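(* If $D$ is a quaternary near-extremal Hermitian self-dual code of length $36$ and $\alpha$ denotes the number of codewords of weight $12$ in $D$, then $\alpha=9\beta$ for some integer $\beta$ with $1\le\beta\le 7140$.
   Context: Let $\mathbb{F}_4=\{0,1,\omega,\omega^2\}$ with $\omega^2=\omega+1$. A quaternary code of length $n$ is a linear subspace of $\mathbb{F}_4^n$; it is Hermitian self-dual if it equals its dual with respect to $\langle x,y\rangle_H=\sum_k x_k y_k^2$. The weight of a vector is the number of nonzero coordinates. A quaternary Hermitian self-dual code of length $36$ is near-extremal if its minimum nonzero weight is $12$. *)

(* Defs.v *)
From mathcomp Require Import all_boot all_algebra all_field.
Set Implicit Arguments. Unset Strict Implicit. Unset Printing Implicit Defensive.
Import GRing.Theory.
Local Open Scope ring_scope.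

(* F is any field with exactly 4 elements (unique up to isomorphism: F_4). *)

Definition herm_ip (F : finFieldType) n (x y : 'rV[F]_n) : F :=
  \sum_(k < n) x ord0 k * (y ord0 k) ^+ 2.

Definition wt (F : finFieldType) n (x : 'rV[F]_n) : nat :=
  #|[set k : 'I_n | x ord0 k != 0]|.

Definition herm_dual (F : finFieldType) n (C : {vspace 'rV[F]_n}) : {set 'rV[F]_n} :=
  [set y : 'rV[F]_n | [forall x : 'rV[F]_n, (x \in C) ==> (herm_ip x y == 0)]].

Definition herm_self_dual (F : finFieldType) n (C : {vspace 'rV[F]_n}) : Prop :=
  forall y : 'rV[F]_n, (y \in C) = (y \in herm_dual C).

Definition min_weight (F : finFieldType) n (C : {vspace 'rV[F]_n}) (d : nat) : Prop :=
  (forall x : 'rV[F]_n, x \in C -> x != 0 -> (d <= wt x)%N) /\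
  (exists2 x : 'rV[F]_n, x \in C & (x != 0) && (wt x == d)).

Definition num_weight (F : finFieldType) n (C : {vspace 'rV[F]_n}) (w : nat) : nat :=
  #|[set x : 'rV[F]_n | (x \in C) && (wt x == w)]|.

(* Main.v *)
Require Import Defs.
From Stdlib Require Import ZArith Lia.
From mathcomp Require Import all_boot all_algebra all_field zify.
Set Implicit Arguments. Unset Strict Implicit. Unset Printing Implicit Defensive.
Import GRing.Theory.
Local Open Scope ring_scope.

(* Proof outline: a refined MacWilliams identity (fixing coordinate 0) for the
   Hermitian self-dual code, proved with the additive character
   chi(x) = (-1)^(Tr x), Tr x = x + x^2, of F_4.  Evaluating it at 26 points
   gives a linear system whose consequences (obtained from explicit integer
   certificates) are A_12 = 3 E_12 and 12 A_12 + A_14 = 771120. *)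

Section NZ.
Local Open Scope Z_scope.
Lemma numericZ (x12 x14 x16 x18 x20 x22 x24 x26 x28 x30 x32 x34 y11 y13 y15 y17 y19 y21 y23 y25 y27 y29 y31 y33 y35 : Z) :
  4^18*(1*(1 + x12*0^12 + x14*0^14 + x16*0^16 + x18*0^18 + x20*0^20 + x22*0^22 + x24*0^24 + x26*0^26 + x28*0^28 + x30*0^30 + x32*0^32 + x34*0^34) + 0*(y11*0^11 + y13*0^13 + y15*0^15 + y17*0^17 + y19*0^19 + y21*0^21 + y23*0^23 + y25*0^25 + y27*0^27 + y29*0^29 + y31*0^31 + y33*0^33 + y35*0^35)) = (1+3*0)*(1+3*0)^35 + x12*(1+3*0)*(1+3*0)^23*(1-0)^12 + x14*(1+3*0)*(1+3*0)^21*(1-0)^14 + x16*(1+3*0)*(1+3*0)^19*(1-0)^16 + x18*(1+3*0)*(1+3*0)^17*(1-0)^18 + x20*(1+3*0)*(1+3*0)^15*(1-0)^20 + x22*(1+3*0)*(1+3*0)^13*(1-0)^22 + x24*(1+3*0)*(1+3*0)^11*(1-0)^24 + x26*(1+3*0)*(1+3*0)^9*(1-0)^26 + x28*(1+3*0)*(1+3*0)^7*(1-0)^28 + x30*(1+3*0)*(1+3*0)^5*(1-0)^30 + x32*(1+3*0)*(1+3*0)^3*(1-0)^32 + x34*(1+3*0)*(1+3*0)^1*(1-0)^34 + y11*(1-0)*(1+3*0)^24*(1-0)^11 + y13*(1-0)*(1+3*0)^22*(1-0)^13 + y15*(1-0)*(1+3*0)^20*(1-0)^15 + y17*(1-0)*(1+3*0)^18*(1-0)^17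 + y19*(1-0)*(1+3*0)^16*(1-0)^19 + y21*(1-0)*(1+3*0)^14*(1-0)^21 + y23*(1-0)*(1+3*0)^12*(1-0)^23 + y25*(1-0)*(1+3*0)^10*(1-0)^25 + y27*(1-0)*(1+3*0)^8*(1-0)^27 + y29*(1-0)*(1+3*0)^6*(1-0)^29 + y31*(1-0)*(1+3*0)^4*(1-0)^31 + y33*(1-0)*(1+3*0)^2*(1-0)^33 + y35*(1-0)*(1+3*0)^0*(1-0)^35 ->
  4^18*(0*(1 + x12*0^12 + x14*0^14 + x16*0^16 + x18*0^18 + x20*0^20 + x22*0^22 + x24*0^24 + x26*0^26 + x28*0^28 + x30*0^30 + x32*0^32 + x34*0^34) + 1*(y11*0^11 + y13*0^13 + y15*0^15 + y17*0^17 + y19*0^19 + y21*0^21 + y23*0^23 + y25*0^25 + y27*0^27 + y29*0^29 + y31*0^31 + y33*0^33 + y35*0^35)) = (0+3*1)*(1+3*0)^35 + x12*(0+3*1)*(1+3*0)^23*(1-0)^12 + x14*(0+3*1)*(1+3*0)^21*(1-0)^14 + x16*(0+3*1)*(1+3*0)^19*(1-0)^16 + x18*(0+3*1)*(1+3*0)^17*(1-0)^18 + x20*(0+3*1)*(1+3*0)^15*(1-0)^20 + x22*(0+3*1)*(1+3*0)^13*(1-0)^22 + x24*(0+3*1)*(1+3*0)^11*(1-0)^24 + x26*(0+3*1)*(1+3*0)^9*(1-0)^26 + x28*(0+3*1)*(1+3*0)^7*(1-0)^28 + x30*(0+3*1)*(1+3*0)^5*(1-0)^30 + x32*(0+3*1)*(1+3*0)^3*(1-0)^32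 + x34*(0+3*1)*(1+3*0)^1*(1-0)^34 + y11*(0-1)*(1+3*0)^24*(1-0)^11 + y13*(0-1)*(1+3*0)^22*(1-0)^13 + y15*(0-1)*(1+3*0)^20*(1-0)^15 + y17*(0-1)*(1+3*0)^18*(1-0)^17 + y19*(0-1)*(1+3*0)^16*(1-0)^19 + y21*(0-1)*(1+3*0)^14*(1-0)^21 + y23*(0-1)*(1+3*0)^12*(1-0)^23 + y25*(0-1)*(1+3*0)^10*(1-0)^25 + y27*(0-1)*(1+3*0)^8*(1-0)^27 + y29*(0-1)*(1+3*0)^6*(1-0)^29 + y31*(0-1)*(1+3*0)^4*(1-0)^31 + y33*(0-1)*(1+3*0)^2*(1-0)^33 + y35*(0-1)*(1+3*0)^0*(1-0)^35 ->
  4^18*(1*(1 + x12*1^12 + x14*1^14 + x16*1^16 + x18*1^18 + x20*1^20 + x22*1^22 + x24*1^24 + x26*1^26 + x28*1^28 + x30*1^30 + x32*1^32 + x34*1^34) + 0*(y11*1^11 + y13*1^13 + y15*1^15 + y17*1^17 + y19*1^19 + y21*1^21 + y23*1^23 + y25*1^25 + y27*1^27 + y29*1^29 + y31*1^31 + y33*1^33 + y35*1^35)) = (1+3*0)*(1+3*1)^35 + x12*(1+3*0)*(1+3*1)^23*(1-1)^12 + x14*(1+3*0)*(1+3*1)^21*(1-1)^14 + x16*(1+3*0)*(1+3*1)^19*(1-1)^16 + x18*(1+3*0)*(1+3*1)^17*(1-1)^18 + x20*(1+3*0)*(1+3*1)^15*(1-1)^20 + x22*(1+3*0)*(1+3*1)^13*(1-1)^22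 + x24*(1+3*0)*(1+3*1)^11*(1-1)^24 + x26*(1+3*0)*(1+3*1)^9*(1-1)^26 + x28*(1+3*0)*(1+3*1)^7*(1-1)^28 + x30*(1+3*0)*(1+3*1)^5*(1-1)^30 + x32*(1+3*0)*(1+3*1)^3*(1-1)^32 + x34*(1+3*0)*(1+3*1)^1*(1-1)^34 + y11*(1-0)*(1+3*1)^24*(1-1)^11 + y13*(1-0)*(1+3*1)^22*(1-1)^13 + y15*(1-0)*(1+3*1)^20*(1-1)^15 + y17*(1-0)*(1+3*1)^18*(1-1)^17 + y19*(1-0)*(1+3*1)^16*(1-1)^19 + y21*(1-0)*(1+3*1)^14*(1-1)^21 + y23*(1-0)*(1+3*1)^12*(1-1)^23 + y25*(1-0)*(1+3*1)^10*(1-1)^25 + y27*(1-0)*(1+3*1)^8*(1-1)^27 + y29*(1-0)*(1+3*1)^6*(1-1)^29 + y31*(1-0)*(1+3*1)^4*(1-1)^31 + y33*(1-0)*(1+3*1)^2*(1-1)^33 + y35*(1-0)*(1+3*1)^0*(1-1)^35 ->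
  4^18*(0*(1 + x12*1^12 + x14*1^14 + x16*1^16 + x18*1^18 + x20*1^20 + x22*1^22 + x24*1^24 + x26*1^26 + x28*1^28 + x30*1^30 + x32*1^32 + x34*1^34) + 1*(y11*1^11 + y13*1^13 + y15*1^15 + y17*1^17 + y19*1^19 + y21*1^21 + y23*1^23 + y25*1^25 + y27*1^27 + y29*1^29 + y31*1^31 + y33*1^33 + y35*1^35)) = (0+3*1)*(1+3*1)^35 + x12*(0+3*1)*(1+3*1)^23*(1-1)^12 + x14*(0+3*1)*(1+3*1)^21*(1-1)^14 + x16*(0+3*1)*(1+3*1)^19*(1-1)^16 + x18*(0+3*1)*(1+3*1)^17*(1-1)^18 + x20*(0+3*1)*(1+3*1)^15*(1-1)^20 + x22*(0+3*1)*(1+3*1)^13*(1-1)^22 + x24*(0+3*1)*(1+3*1)^11*(1-1)^24 + x26*(0+3*1)*(1+3*1)^9*(1-1)^26 + x28*(0+3*1)*(1+3*1)^7*(1-1)^28 + x30*(0+3*1)*(1+3*1)^5*(1-1)^30 + x32*(0+3*1)*(1+3*1)^3*(1-1)^32 + x34*(0+3*1)*(1+3*1)^1*(1-1)^34 + y11*(0-1)*(1+3*1)^24*(1-1)^11 + y13*(0-1)*(1+3*1)^22*(1-1)^13 + y15*(0-1)*(1+3*1)^20*(1-1)^15 + y17*(0-1)*(1+3*1)^18*(1-1)^17 + y19*(0-1)*(1+3*1)^16*(1-1)^19 + y21*(0-1)*(1+3*1)^14*(1-1)^21 + y23*(0-1)*(1+3*1)^12*(1-1)^23 + y25*(0-1)*(1+3*1)^10*(1-1)^25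 + y27*(0-1)*(1+3*1)^8*(1-1)^27 + y29*(0-1)*(1+3*1)^6*(1-1)^29 + y31*(0-1)*(1+3*1)^4*(1-1)^31 + y33*(0-1)*(1+3*1)^2*(1-1)^33 + y35*(0-1)*(1+3*1)^0*(1-1)^35 ->
  4^18*(1*(1 + x12*2^12 + x14*2^14 + x16*2^16 + x18*2^18 + x20*2^20 + x22*2^22 + x24*2^24 + x26*2^26 + x28*2^28 + x30*2^30 + x32*2^32 + x34*2^34) + 0*(y11*2^11 + y13*2^13 + y15*2^15 + y17*2^17 + y19*2^19 + y21*2^21 + y23*2^23 + y25*2^25 + y27*2^27 + y29*2^29 + y31*2^31 + y33*2^33 + y35*2^35)) = (1+3*0)*(1+3*2)^35 + x12*(1+3*0)*(1+3*2)^23*(1-2)^12 + x14*(1+3*0)*(1+3*2)^21*(1-2)^14 + x16*(1+3*0)*(1+3*2)^19*(1-2)^16 + x18*(1+3*0)*(1+3*2)^17*(1-2)^18 + x20*(1+3*0)*(1+3*2)^15*(1-2)^20 + x22*(1+3*0)*(1+3*2)^13*(1-2)^22 + x24*(1+3*0)*(1+3*2)^11*(1-2)^24 + x26*(1+3*0)*(1+3*2)^9*(1-2)^26 + x28*(1+3*0)*(1+3*2)^7*(1-2)^28 + x30*(1+3*0)*(1+3*2)^5*(1-2)^30 + x32*(1+3*0)*(1+3*2)^3*(1-2)^32 + x34*(1+3*0)*(1+3*2)^1*(1-2)^34 + y11*(1-0)*(1+3*2)^24*(1-2)^11 + y13*(1-0)*(1+3*2)^22*(1-2)^13 + y15*(1-0)*(1+3*2)^20*(1-2)^15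 + y17*(1-0)*(1+3*2)^18*(1-2)^17 + y19*(1-0)*(1+3*2)^16*(1-2)^19 + y21*(1-0)*(1+3*2)^14*(1-2)^21 + y23*(1-0)*(1+3*2)^12*(1-2)^23 + y25*(1-0)*(1+3*2)^10*(1-2)^25 + y27*(1-0)*(1+3*2)^8*(1-2)^27 + y29*(1-0)*(1+3*2)^6*(1-2)^29 + y31*(1-0)*(1+3*2)^4*(1-2)^31 + y33*(1-0)*(1+3*2)^2*(1-2)^33 + y35*(1-0)*(1+3*2)^0*(1-2)^35 ->
  4^18*(0*(1 + x12*2^12 + x14*2^14 + x16*2^16 + x18*2^18 + x20*2^20 + x22*2^22 + x24*2^24 + x26*2^26 + x28*2^28 + x30*2^30 + x32*2^32 + x34*2^34) + 1*(y11*2^11 + y13*2^13 + y15*2^15 + y17*2^17 + y19*2^19 + y21*2^21 + y23*2^23 + y25*2^25 + y27*2^27 + y29*2^29 + y31*2^31 + y33*2^33 + y35*2^35)) = (0+3*1)*(1+3*2)^35 + x12*(0+3*1)*(1+3*2)^23*(1-2)^12 + x14*(0+3*1)*(1+3*2)^21*(1-2)^14 + x16*(0+3*1)*(1+3*2)^19*(1-2)^16 + x18*(0+3*1)*(1+3*2)^17*(1-2)^18 + x20*(0+3*1)*(1+3*2)^15*(1-2)^20 + x22*(0+3*1)*(1+3*2)^13*(1-2)^22 + x24*(0+3*1)*(1+3*2)^11*(1-2)^24 + x26*(0+3*1)*(1+3*2)^9*(1-2)^26 + x28*(0+3*1)*(1+3*2)^7*(1-2)^28 + x30*(0+3*1)*(1+3*2)^5*(1-2)^30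 + x32*(0+3*1)*(1+3*2)^3*(1-2)^32 + x34*(0+3*1)*(1+3*2)^1*(1-2)^34 + y11*(0-1)*(1+3*2)^24*(1-2)^11 + y13*(0-1)*(1+3*2)^22*(1-2)^13 + y15*(0-1)*(1+3*2)^20*(1-2)^15 + y17*(0-1)*(1+3*2)^18*(1-2)^17 + y19*(0-1)*(1+3*2)^16*(1-2)^19 + y21*(0-1)*(1+3*2)^14*(1-2)^21 + y23*(0-1)*(1+3*2)^12*(1-2)^23 + y25*(0-1)*(1+3*2)^10*(1-2)^25 + y27*(0-1)*(1+3*2)^8*(1-2)^27 + y29*(0-1)*(1+3*2)^6*(1-2)^29 + y31*(0-1)*(1+3*2)^4*(1-2)^31 + y33*(0-1)*(1+3*2)^2*(1-2)^33 + y35*(0-1)*(1+3*2)^0*(1-2)^35 ->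
  4^18*(1*(1 + x12*3^12 + x14*3^14 + x16*3^16 + x18*3^18 + x20*3^20 + x22*3^22 + x24*3^24 + x26*3^26 + x28*3^28 + x30*3^30 + x32*3^32 + x34*3^34) + 0*(y11*3^11 + y13*3^13 + y15*3^15 + y17*3^17 + y19*3^19 + y21*3^21 + y23*3^23 + y25*3^25 + y27*3^27 + y29*3^29 + y31*3^31 + y33*3^33 + y35*3^35)) = (1+3*0)*(1+3*3)^35 + x12*(1+3*0)*(1+3*3)^23*(1-3)^12 + x14*(1+3*0)*(1+3*3)^21*(1-3)^14 + x16*(1+3*0)*(1+3*3)^19*(1-3)^16 + x18*(1+3*0)*(1+3*3)^17*(1-3)^18 + x20*(1+3*0)*(1+3*3)^15*(1-3)^20 + x22*(1+3*0)*(1+3*3)^13*(1-3)^22 + x24*(1+3*0)*(1+3*3)^11*(1-3)^24 + x26*(1+3*0)*(1+3*3)^9*(1-3)^26 + x28*(1+3*0)*(1+3*3)^7*(1-3)^28 + x30*(1+3*0)*(1+3*3)^5*(1-3)^30 + x32*(1+3*0)*(1+3*3)^3*(1-3)^32 + x34*(1+3*0)*(1+3*3)^1*(1-3)^34 + y11*(1-0)*(1+3*3)^24*(1-3)^11 + y13*(1-0)*(1+3*3)^22*(1-3)^13 + y15*(1-0)*(1+3*3)^20*(1-3)^15 + y17*(1-0)*(1+3*3)^18*(1-3)^17 + y19*(1-0)*(1+3*3)^16*(1-3)^19 + y21*(1-0)*(1+3*3)^14*(1-3)^21 + y23*(1-0)*(1+3*3)^12*(1-3)^23 + y25*(1-0)*(1+3*3)^10*(1-3)^25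 + y27*(1-0)*(1+3*3)^8*(1-3)^27 + y29*(1-0)*(1+3*3)^6*(1-3)^29 + y31*(1-0)*(1+3*3)^4*(1-3)^31 + y33*(1-0)*(1+3*3)^2*(1-3)^33 + y35*(1-0)*(1+3*3)^0*(1-3)^35 ->
  4^18*(0*(1 + x12*3^12 + x14*3^14 + x16*3^16 + x18*3^18 + x20*3^20 + x22*3^22 + x24*3^24 + x26*3^26 + x28*3^28 + x30*3^30 + x32*3^32 + x34*3^34) + 1*(y11*3^11 + y13*3^13 + y15*3^15 + y17*3^17 + y19*3^19 + y21*3^21 + y23*3^23 + y25*3^25 + y27*3^27 + y29*3^29 + y31*3^31 + y33*3^33 + y35*3^35)) = (0+3*1)*(1+3*3)^35 + x12*(0+3*1)*(1+3*3)^23*(1-3)^12 + x14*(0+3*1)*(1+3*3)^21*(1-3)^14 + x16*(0+3*1)*(1+3*3)^19*(1-3)^16 + x18*(0+3*1)*(1+3*3)^17*(1-3)^18 + x20*(0+3*1)*(1+3*3)^15*(1-3)^20 + x22*(0+3*1)*(1+3*3)^13*(1-3)^22 + x24*(0+3*1)*(1+3*3)^11*(1-3)^24 + x26*(0+3*1)*(1+3*3)^9*(1-3)^26 + x28*(0+3*1)*(1+3*3)^7*(1-3)^28 + x30*(0+3*1)*(1+3*3)^5*(1-3)^30 + x32*(0+3*1)*(1+3*3)^3*(1-3)^32 + x34*(0+3*1)*(1+3*3)^1*(1-3)^34 + y11*(0-1)*(1+3*3)^24*(1-3)^11 + y13*(0-1)*(1+3*3)^22*(1-3)^13 + y15*(0-1)*(1+3*3)^20*(1-3)^15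 + y17*(0-1)*(1+3*3)^18*(1-3)^17 + y19*(0-1)*(1+3*3)^16*(1-3)^19 + y21*(0-1)*(1+3*3)^14*(1-3)^21 + y23*(0-1)*(1+3*3)^12*(1-3)^23 + y25*(0-1)*(1+3*3)^10*(1-3)^25 + y27*(0-1)*(1+3*3)^8*(1-3)^27 + y29*(0-1)*(1+3*3)^6*(1-3)^29 + y31*(0-1)*(1+3*3)^4*(1-3)^31 + y33*(0-1)*(1+3*3)^2*(1-3)^33 + y35*(0-1)*(1+3*3)^0*(1-3)^35 ->
  4^18*(1*(1 + x12*4^12 + x14*4^14 + x16*4^16 + x18*4^18 + x20*4^20 + x22*4^22 + x24*4^24 + x26*4^26 + x28*4^28 + x30*4^30 + x32*4^32 + x34*4^34) + 0*(y11*4^11 + y13*4^13 + y15*4^15 + y17*4^17 + y19*4^19 + y21*4^21 + y23*4^23 + y25*4^25 + y27*4^27 + y29*4^29 + y31*4^31 + y33*4^33 + y35*4^35)) = (1+3*0)*(1+3*4)^35 + x12*(1+3*0)*(1+3*4)^23*(1-4)^12 + x14*(1+3*0)*(1+3*4)^21*(1-4)^14 + x16*(1+3*0)*(1+3*4)^19*(1-4)^16 + x18*(1+3*0)*(1+3*4)^17*(1-4)^18 + x20*(1+3*0)*(1+3*4)^15*(1-4)^20 + x22*(1+3*0)*(1+3*4)^13*(1-4)^22 + x24*(1+3*0)*(1+3*4)^11*(1-4)^24 + x26*(1+3*0)*(1+3*4)^9*(1-4)^26 + x28*(1+3*0)*(1+3*4)^7*(1-4)^28 + x30*(1+3*0)*(1+3*4)^5*(1-4)^30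 + x32*(1+3*0)*(1+3*4)^3*(1-4)^32 + x34*(1+3*0)*(1+3*4)^1*(1-4)^34 + y11*(1-0)*(1+3*4)^24*(1-4)^11 + y13*(1-0)*(1+3*4)^22*(1-4)^13 + y15*(1-0)*(1+3*4)^20*(1-4)^15 + y17*(1-0)*(1+3*4)^18*(1-4)^17 + y19*(1-0)*(1+3*4)^16*(1-4)^19 + y21*(1-0)*(1+3*4)^14*(1-4)^21 + y23*(1-0)*(1+3*4)^12*(1-4)^23 + y25*(1-0)*(1+3*4)^10*(1-4)^25 + y27*(1-0)*(1+3*4)^8*(1-4)^27 + y29*(1-0)*(1+3*4)^6*(1-4)^29 + y31*(1-0)*(1+3*4)^4*(1-4)^31 + y33*(1-0)*(1+3*4)^2*(1-4)^33 + y35*(1-0)*(1+3*4)^0*(1-4)^35 ->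
  4^18*(0*(1 + x12*4^12 + x14*4^14 + x16*4^16 + x18*4^18 + x20*4^20 + x22*4^22 + x24*4^24 + x26*4^26 + x28*4^28 + x30*4^30 + x32*4^32 + x34*4^34) + 1*(y11*4^11 + y13*4^13 + y15*4^15 + y17*4^17 + y19*4^19 + y21*4^21 + y23*4^23 + y25*4^25 + y27*4^27 + y29*4^29 + y31*4^31 + y33*4^33 + y35*4^35)) = (0+3*1)*(1+3*4)^35 + x12*(0+3*1)*(1+3*4)^23*(1-4)^12 + x14*(0+3*1)*(1+3*4)^21*(1-4)^14 + x16*(0+3*1)*(1+3*4)^19*(1-4)^16 + x18*(0+3*1)*(1+3*4)^17*(1-4)^18 + x20*(0+3*1)*(1+3*4)^15*(1-4)^20 + x22*(0+3*1)*(1+3*4)^13*(1-4)^22 + x24*(0+3*1)*(1+3*4)^11*(1-4)^24 + x26*(0+3*1)*(1+3*4)^9*(1-4)^26 + x28*(0+3*1)*(1+3*4)^7*(1-4)^28 + x30*(0+3*1)*(1+3*4)^5*(1-4)^30 + x32*(0+3*1)*(1+3*4)^3*(1-4)^32 + x34*(0+3*1)*(1+3*4)^1*(1-4)^34 + y11*(0-1)*(1+3*4)^24*(1-4)^11 + y13*(0-1)*(1+3*4)^22*(1-4)^13 + y15*(0-1)*(1+3*4)^20*(1-4)^15 + y17*(0-1)*(1+3*4)^18*(1-4)^17 + y19*(0-1)*(1+3*4)^16*(1-4)^19 + y21*(0-1)*(1+3*4)^14*(1-4)^21 + y23*(0-1)*(1+3*4)^12*(1-4)^23 + y25*(0-1)*(1+3*4)^10*(1-4)^25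 + y27*(0-1)*(1+3*4)^8*(1-4)^27 + y29*(0-1)*(1+3*4)^6*(1-4)^29 + y31*(0-1)*(1+3*4)^4*(1-4)^31 + y33*(0-1)*(1+3*4)^2*(1-4)^33 + y35*(0-1)*(1+3*4)^0*(1-4)^35 ->
  4^18*(1*(1 + x12*5^12 + x14*5^14 + x16*5^16 + x18*5^18 + x20*5^20 + x22*5^22 + x24*5^24 + x26*5^26 + x28*5^28 + x30*5^30 + x32*5^32 + x34*5^34) + 0*(y11*5^11 + y13*5^13 + y15*5^15 + y17*5^17 + y19*5^19 + y21*5^21 + y23*5^23 + y25*5^25 + y27*5^27 + y29*5^29 + y31*5^31 + y33*5^33 + y35*5^35)) = (1+3*0)*(1+3*5)^35 + x12*(1+3*0)*(1+3*5)^23*(1-5)^12 + x14*(1+3*0)*(1+3*5)^21*(1-5)^14 + x16*(1+3*0)*(1+3*5)^19*(1-5)^16 + x18*(1+3*0)*(1+3*5)^17*(1-5)^18 + x20*(1+3*0)*(1+3*5)^15*(1-5)^20 + x22*(1+3*0)*(1+3*5)^13*(1-5)^22 + x24*(1+3*0)*(1+3*5)^11*(1-5)^24 + x26*(1+3*0)*(1+3*5)^9*(1-5)^26 + x28*(1+3*0)*(1+3*5)^7*(1-5)^28 + x30*(1+3*0)*(1+3*5)^5*(1-5)^30 + x32*(1+3*0)*(1+3*5)^3*(1-5)^32 + x34*(1+3*0)*(1+3*5)^1*(1-5)^34 + y11*(1-0)*(1+3*5)^24*(1-5)^11 + y13*(1-0)*(1+3*5)^22*(1-5)^13 + y15*(1-0)*(1+3*5)^20*(1-5)^15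 + y17*(1-0)*(1+3*5)^18*(1-5)^17 + y19*(1-0)*(1+3*5)^16*(1-5)^19 + y21*(1-0)*(1+3*5)^14*(1-5)^21 + y23*(1-0)*(1+3*5)^12*(1-5)^23 + y25*(1-0)*(1+3*5)^10*(1-5)^25 + y27*(1-0)*(1+3*5)^8*(1-5)^27 + y29*(1-0)*(1+3*5)^6*(1-5)^29 + y31*(1-0)*(1+3*5)^4*(1-5)^31 + y33*(1-0)*(1+3*5)^2*(1-5)^33 + y35*(1-0)*(1+3*5)^0*(1-5)^35 ->
  4^18*(0*(1 + x12*5^12 + x14*5^14 + x16*5^16 + x18*5^18 + x20*5^20 + x22*5^22 + x24*5^24 + x26*5^26 + x28*5^28 + x30*5^30 + x32*5^32 + x34*5^34) + 1*(y11*5^11 + y13*5^13 + y15*5^15 + y17*5^17 + y19*5^19 + y21*5^21 + y23*5^23 + y25*5^25 + y27*5^27 + y29*5^29 + y31*5^31 + y33*5^33 + y35*5^35)) = (0+3*1)*(1+3*5)^35 + x12*(0+3*1)*(1+3*5)^23*(1-5)^12 + x14*(0+3*1)*(1+3*5)^21*(1-5)^14 + x16*(0+3*1)*(1+3*5)^19*(1-5)^16 + x18*(0+3*1)*(1+3*5)^17*(1-5)^18 + x20*(0+3*1)*(1+3*5)^15*(1-5)^20 + x22*(0+3*1)*(1+3*5)^13*(1-5)^22 + x24*(0+3*1)*(1+3*5)^11*(1-5)^24 + x26*(0+3*1)*(1+3*5)^9*(1-5)^26 + x28*(0+3*1)*(1+3*5)^7*(1-5)^28 + x30*(0+3*1)*(1+3*5)^5*(1-5)^30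 + x32*(0+3*1)*(1+3*5)^3*(1-5)^32 + x34*(0+3*1)*(1+3*5)^1*(1-5)^34 + y11*(0-1)*(1+3*5)^24*(1-5)^11 + y13*(0-1)*(1+3*5)^22*(1-5)^13 + y15*(0-1)*(1+3*5)^20*(1-5)^15 + y17*(0-1)*(1+3*5)^18*(1-5)^17 + y19*(0-1)*(1+3*5)^16*(1-5)^19 + y21*(0-1)*(1+3*5)^14*(1-5)^21 + y23*(0-1)*(1+3*5)^12*(1-5)^23 + y25*(0-1)*(1+3*5)^10*(1-5)^25 + y27*(0-1)*(1+3*5)^8*(1-5)^27 + y29*(0-1)*(1+3*5)^6*(1-5)^29 + y31*(0-1)*(1+3*5)^4*(1-5)^31 + y33*(0-1)*(1+3*5)^2*(1-5)^33 + y35*(0-1)*(1+3*5)^0*(1-5)^35 ->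
  4^18*(1*(1 + x12*6^12 + x14*6^14 + x16*6^16 + x18*6^18 + x20*6^20 + x22*6^22 + x24*6^24 + x26*6^26 + x28*6^28 + x30*6^30 + x32*6^32 + x34*6^34) + 0*(y11*6^11 + y13*6^13 + y15*6^15 + y17*6^17 + y19*6^19 + y21*6^21 + y23*6^23 + y25*6^25 + y27*6^27 + y29*6^29 + y31*6^31 + y33*6^33 + y35*6^35)) = (1+3*0)*(1+3*6)^35 + x12*(1+3*0)*(1+3*6)^23*(1-6)^12 + x14*(1+3*0)*(1+3*6)^21*(1-6)^14 + x16*(1+3*0)*(1+3*6)^19*(1-6)^16 + x18*(1+3*0)*(1+3*6)^17*(1-6)^18 + x20*(1+3*0)*(1+3*6)^15*(1-6)^20 + x22*(1+3*0)*(1+3*6)^13*(1-6)^22 + x24*(1+3*0)*(1+3*6)^11*(1-6)^24 + x26*(1+3*0)*(1+3*6)^9*(1-6)^26 + x28*(1+3*0)*(1+3*6)^7*(1-6)^28 + x30*(1+3*0)*(1+3*6)^5*(1-6)^30 + x32*(1+3*0)*(1+3*6)^3*(1-6)^32 + x34*(1+3*0)*(1+3*6)^1*(1-6)^34 + y11*(1-0)*(1+3*6)^24*(1-6)^11 + y13*(1-0)*(1+3*6)^22*(1-6)^13 + y15*(1-0)*(1+3*6)^20*(1-6)^15 + y17*(1-0)*(1+3*6)^18*(1-6)^17 + y19*(1-0)*(1+3*6)^16*(1-6)^19 + y21*(1-0)*(1+3*6)^14*(1-6)^21 + y23*(1-0)*(1+3*6)^12*(1-6)^23 + y25*(1-0)*(1+3*6)^10*(1-6)^25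 + y27*(1-0)*(1+3*6)^8*(1-6)^27 + y29*(1-0)*(1+3*6)^6*(1-6)^29 + y31*(1-0)*(1+3*6)^4*(1-6)^31 + y33*(1-0)*(1+3*6)^2*(1-6)^33 + y35*(1-0)*(1+3*6)^0*(1-6)^35 ->
  4^18*(0*(1 + x12*6^12 + x14*6^14 + x16*6^16 + x18*6^18 + x20*6^20 + x22*6^22 + x24*6^24 + x26*6^26 + x28*6^28 + x30*6^30 + x32*6^32 + x34*6^34) + 1*(y11*6^11 + y13*6^13 + y15*6^15 + y17*6^17 + y19*6^19 + y21*6^21 + y23*6^23 + y25*6^25 + y27*6^27 + y29*6^29 + y31*6^31 + y33*6^33 + y35*6^35)) = (0+3*1)*(1+3*6)^35 + x12*(0+3*1)*(1+3*6)^23*(1-6)^12 + x14*(0+3*1)*(1+3*6)^21*(1-6)^14 + x16*(0+3*1)*(1+3*6)^19*(1-6)^16 + x18*(0+3*1)*(1+3*6)^17*(1-6)^18 + x20*(0+3*1)*(1+3*6)^15*(1-6)^20 + x22*(0+3*1)*(1+3*6)^13*(1-6)^22 + x24*(0+3*1)*(1+3*6)^11*(1-6)^24 + x26*(0+3*1)*(1+3*6)^9*(1-6)^26 + x28*(0+3*1)*(1+3*6)^7*(1-6)^28 + x30*(0+3*1)*(1+3*6)^5*(1-6)^30 + x32*(0+3*1)*(1+3*6)^3*(1-6)^32 + x34*(0+3*1)*(1+3*6)^1*(1-6)^34 + y11*(0-1)*(1+3*6)^24*(1-6)^11 + y13*(0-1)*(1+3*6)^22*(1-6)^13 + y15*(0-1)*(1+3*6)^20*(1-6)^15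 + y17*(0-1)*(1+3*6)^18*(1-6)^17 + y19*(0-1)*(1+3*6)^16*(1-6)^19 + y21*(0-1)*(1+3*6)^14*(1-6)^21 + y23*(0-1)*(1+3*6)^12*(1-6)^23 + y25*(0-1)*(1+3*6)^10*(1-6)^25 + y27*(0-1)*(1+3*6)^8*(1-6)^27 + y29*(0-1)*(1+3*6)^6*(1-6)^29 + y31*(0-1)*(1+3*6)^4*(1-6)^31 + y33*(0-1)*(1+3*6)^2*(1-6)^33 + y35*(0-1)*(1+3*6)^0*(1-6)^35 ->
  4^18*(1*(1 + x12*7^12 + x14*7^14 + x16*7^16 + x18*7^18 + x20*7^20 + x22*7^22 + x24*7^24 + x26*7^26 + x28*7^28 + x30*7^30 + x32*7^32 + x34*7^34) + 0*(y11*7^11 + y13*7^13 + y15*7^15 + y17*7^17 + y19*7^19 + y21*7^21 + y23*7^23 + y25*7^25 + y27*7^27 + y29*7^29 + y31*7^31 + y33*7^33 + y35*7^35)) = (1+3*0)*(1+3*7)^35 + x12*(1+3*0)*(1+3*7)^23*(1-7)^12 + x14*(1+3*0)*(1+3*7)^21*(1-7)^14 + x16*(1+3*0)*(1+3*7)^19*(1-7)^16 + x18*(1+3*0)*(1+3*7)^17*(1-7)^18 + x20*(1+3*0)*(1+3*7)^15*(1-7)^20 + x22*(1+3*0)*(1+3*7)^13*(1-7)^22 + x24*(1+3*0)*(1+3*7)^11*(1-7)^24 + x26*(1+3*0)*(1+3*7)^9*(1-7)^26 + x28*(1+3*0)*(1+3*7)^7*(1-7)^28 + x30*(1+3*0)*(1+3*7)^5*(1-7)^30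 + x32*(1+3*0)*(1+3*7)^3*(1-7)^32 + x34*(1+3*0)*(1+3*7)^1*(1-7)^34 + y11*(1-0)*(1+3*7)^24*(1-7)^11 + y13*(1-0)*(1+3*7)^22*(1-7)^13 + y15*(1-0)*(1+3*7)^20*(1-7)^15 + y17*(1-0)*(1+3*7)^18*(1-7)^17 + y19*(1-0)*(1+3*7)^16*(1-7)^19 + y21*(1-0)*(1+3*7)^14*(1-7)^21 + y23*(1-0)*(1+3*7)^12*(1-7)^23 + y25*(1-0)*(1+3*7)^10*(1-7)^25 + y27*(1-0)*(1+3*7)^8*(1-7)^27 + y29*(1-0)*(1+3*7)^6*(1-7)^29 + y31*(1-0)*(1+3*7)^4*(1-7)^31 + y33*(1-0)*(1+3*7)^2*(1-7)^33 + y35*(1-0)*(1+3*7)^0*(1-7)^35 ->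
  4^18*(0*(1 + x12*7^12 + x14*7^14 + x16*7^16 + x18*7^18 + x20*7^20 + x22*7^22 + x24*7^24 + x26*7^26 + x28*7^28 + x30*7^30 + x32*7^32 + x34*7^34) + 1*(y11*7^11 + y13*7^13 + y15*7^15 + y17*7^17 + y19*7^19 + y21*7^21 + y23*7^23 + y25*7^25 + y27*7^27 + y29*7^29 + y31*7^31 + y33*7^33 + y35*7^35)) = (0+3*1)*(1+3*7)^35 + x12*(0+3*1)*(1+3*7)^23*(1-7)^12 + x14*(0+3*1)*(1+3*7)^21*(1-7)^14 + x16*(0+3*1)*(1+3*7)^19*(1-7)^16 + x18*(0+3*1)*(1+3*7)^17*(1-7)^18 + x20*(0+3*1)*(1+3*7)^15*(1-7)^20 + x22*(0+3*1)*(1+3*7)^13*(1-7)^22 + x24*(0+3*1)*(1+3*7)^11*(1-7)^24 + x26*(0+3*1)*(1+3*7)^9*(1-7)^26 + x28*(0+3*1)*(1+3*7)^7*(1-7)^28 + x30*(0+3*1)*(1+3*7)^5*(1-7)^30 + x32*(0+3*1)*(1+3*7)^3*(1-7)^32 + x34*(0+3*1)*(1+3*7)^1*(1-7)^34 + y11*(0-1)*(1+3*7)^24*(1-7)^11 + y13*(0-1)*(1+3*7)^22*(1-7)^13 + y15*(0-1)*(1+3*7)^20*(1-7)^15 + y17*(0-1)*(1+3*7)^18*(1-7)^17 + y19*(0-1)*(1+3*7)^16*(1-7)^19 + y21*(0-1)*(1+3*7)^14*(1-7)^21 + y23*(0-1)*(1+3*7)^12*(1-7)^23 + y25*(0-1)*(1+3*7)^10*(1-7)^25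 + y27*(0-1)*(1+3*7)^8*(1-7)^27 + y29*(0-1)*(1+3*7)^6*(1-7)^29 + y31*(0-1)*(1+3*7)^4*(1-7)^31 + y33*(0-1)*(1+3*7)^2*(1-7)^33 + y35*(0-1)*(1+3*7)^0*(1-7)^35 ->
  4^18*(1*(1 + x12*8^12 + x14*8^14 + x16*8^16 + x18*8^18 + x20*8^20 + x22*8^22 + x24*8^24 + x26*8^26 + x28*8^28 + x30*8^30 + x32*8^32 + x34*8^34) + 0*(y11*8^11 + y13*8^13 + y15*8^15 + y17*8^17 + y19*8^19 + y21*8^21 + y23*8^23 + y25*8^25 + y27*8^27 + y29*8^29 + y31*8^31 + y33*8^33 + y35*8^35)) = (1+3*0)*(1+3*8)^35 + x12*(1+3*0)*(1+3*8)^23*(1-8)^12 + x14*(1+3*0)*(1+3*8)^21*(1-8)^14 + x16*(1+3*0)*(1+3*8)^19*(1-8)^16 + x18*(1+3*0)*(1+3*8)^17*(1-8)^18 + x20*(1+3*0)*(1+3*8)^15*(1-8)^20 + x22*(1+3*0)*(1+3*8)^13*(1-8)^22 + x24*(1+3*0)*(1+3*8)^11*(1-8)^24 + x26*(1+3*0)*(1+3*8)^9*(1-8)^26 + x28*(1+3*0)*(1+3*8)^7*(1-8)^28 + x30*(1+3*0)*(1+3*8)^5*(1-8)^30 + x32*(1+3*0)*(1+3*8)^3*(1-8)^32 + x34*(1+3*0)*(1+3*8)^1*(1-8)^34 + y11*(1-0)*(1+3*8)^24*(1-8)^11 + y13*(1-0)*(1+3*8)^22*(1-8)^13 + y15*(1-0)*(1+3*8)^20*(1-8)^15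 + y17*(1-0)*(1+3*8)^18*(1-8)^17 + y19*(1-0)*(1+3*8)^16*(1-8)^19 + y21*(1-0)*(1+3*8)^14*(1-8)^21 + y23*(1-0)*(1+3*8)^12*(1-8)^23 + y25*(1-0)*(1+3*8)^10*(1-8)^25 + y27*(1-0)*(1+3*8)^8*(1-8)^27 + y29*(1-0)*(1+3*8)^6*(1-8)^29 + y31*(1-0)*(1+3*8)^4*(1-8)^31 + y33*(1-0)*(1+3*8)^2*(1-8)^33 + y35*(1-0)*(1+3*8)^0*(1-8)^35 ->
  4^18*(0*(1 + x12*8^12 + x14*8^14 + x16*8^16 + x18*8^18 + x20*8^20 + x22*8^22 + x24*8^24 + x26*8^26 + x28*8^28 + x30*8^30 + x32*8^32 + x34*8^34) + 1*(y11*8^11 + y13*8^13 + y15*8^15 + y17*8^17 + y19*8^19 + y21*8^21 + y23*8^23 + y25*8^25 + y27*8^27 + y29*8^29 + y31*8^31 + y33*8^33 + y35*8^35)) = (0+3*1)*(1+3*8)^35 + x12*(0+3*1)*(1+3*8)^23*(1-8)^12 + x14*(0+3*1)*(1+3*8)^21*(1-8)^14 + x16*(0+3*1)*(1+3*8)^19*(1-8)^16 + x18*(0+3*1)*(1+3*8)^17*(1-8)^18 + x20*(0+3*1)*(1+3*8)^15*(1-8)^20 + x22*(0+3*1)*(1+3*8)^13*(1-8)^22 + x24*(0+3*1)*(1+3*8)^11*(1-8)^24 + x26*(0+3*1)*(1+3*8)^9*(1-8)^26 + x28*(0+3*1)*(1+3*8)^7*(1-8)^28 + x30*(0+3*1)*(1+3*8)^5*(1-8)^30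 + x32*(0+3*1)*(1+3*8)^3*(1-8)^32 + x34*(0+3*1)*(1+3*8)^1*(1-8)^34 + y11*(0-1)*(1+3*8)^24*(1-8)^11 + y13*(0-1)*(1+3*8)^22*(1-8)^13 + y15*(0-1)*(1+3*8)^20*(1-8)^15 + y17*(0-1)*(1+3*8)^18*(1-8)^17 + y19*(0-1)*(1+3*8)^16*(1-8)^19 + y21*(0-1)*(1+3*8)^14*(1-8)^21 + y23*(0-1)*(1+3*8)^12*(1-8)^23 + y25*(0-1)*(1+3*8)^10*(1-8)^25 + y27*(0-1)*(1+3*8)^8*(1-8)^27 + y29*(0-1)*(1+3*8)^6*(1-8)^29 + y31*(0-1)*(1+3*8)^4*(1-8)^31 + y33*(0-1)*(1+3*8)^2*(1-8)^33 + y35*(0-1)*(1+3*8)^0*(1-8)^35 ->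
  4^18*(1*(1 + x12*9^12 + x14*9^14 + x16*9^16 + x18*9^18 + x20*9^20 + x22*9^22 + x24*9^24 + x26*9^26 + x28*9^28 + x30*9^30 + x32*9^32 + x34*9^34) + 0*(y11*9^11 + y13*9^13 + y15*9^15 + y17*9^17 + y19*9^19 + y21*9^21 + y23*9^23 + y25*9^25 + y27*9^27 + y29*9^29 + y31*9^31 + y33*9^33 + y35*9^35)) = (1+3*0)*(1+3*9)^35 + x12*(1+3*0)*(1+3*9)^23*(1-9)^12 + x14*(1+3*0)*(1+3*9)^21*(1-9)^14 + x16*(1+3*0)*(1+3*9)^19*(1-9)^16 + x18*(1+3*0)*(1+3*9)^17*(1-9)^18 + x20*(1+3*0)*(1+3*9)^15*(1-9)^20 + x22*(1+3*0)*(1+3*9)^13*(1-9)^22 + x24*(1+3*0)*(1+3*9)^11*(1-9)^24 + x26*(1+3*0)*(1+3*9)^9*(1-9)^26 + x28*(1+3*0)*(1+3*9)^7*(1-9)^28 + x30*(1+3*0)*(1+3*9)^5*(1-9)^30 + x32*(1+3*0)*(1+3*9)^3*(1-9)^32 + x34*(1+3*0)*(1+3*9)^1*(1-9)^34 + y11*(1-0)*(1+3*9)^24*(1-9)^11 + y13*(1-0)*(1+3*9)^22*(1-9)^13 + y15*(1-0)*(1+3*9)^20*(1-9)^15 + y17*(1-0)*(1+3*9)^18*(1-9)^17 + y19*(1-0)*(1+3*9)^16*(1-9)^19 + y21*(1-0)*(1+3*9)^14*(1-9)^21 + y23*(1-0)*(1+3*9)^12*(1-9)^23 + y25*(1-0)*(1+3*9)^10*(1-9)^25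 + y27*(1-0)*(1+3*9)^8*(1-9)^27 + y29*(1-0)*(1+3*9)^6*(1-9)^29 + y31*(1-0)*(1+3*9)^4*(1-9)^31 + y33*(1-0)*(1+3*9)^2*(1-9)^33 + y35*(1-0)*(1+3*9)^0*(1-9)^35 ->
  4^18*(0*(1 + x12*9^12 + x14*9^14 + x16*9^16 + x18*9^18 + x20*9^20 + x22*9^22 + x24*9^24 + x26*9^26 + x28*9^28 + x30*9^30 + x32*9^32 + x34*9^34) + 1*(y11*9^11 + y13*9^13 + y15*9^15 + y17*9^17 + y19*9^19 + y21*9^21 + y23*9^23 + y25*9^25 + y27*9^27 + y29*9^29 + y31*9^31 + y33*9^33 + y35*9^35)) = (0+3*1)*(1+3*9)^35 + x12*(0+3*1)*(1+3*9)^23*(1-9)^12 + x14*(0+3*1)*(1+3*9)^21*(1-9)^14 + x16*(0+3*1)*(1+3*9)^19*(1-9)^16 + x18*(0+3*1)*(1+3*9)^17*(1-9)^18 + x20*(0+3*1)*(1+3*9)^15*(1-9)^20 + x22*(0+3*1)*(1+3*9)^13*(1-9)^22 + x24*(0+3*1)*(1+3*9)^11*(1-9)^24 + x26*(0+3*1)*(1+3*9)^9*(1-9)^26 + x28*(0+3*1)*(1+3*9)^7*(1-9)^28 + x30*(0+3*1)*(1+3*9)^5*(1-9)^30 + x32*(0+3*1)*(1+3*9)^3*(1-9)^32 + x34*(0+3*1)*(1+3*9)^1*(1-9)^34 + y11*(0-1)*(1+3*9)^24*(1-9)^11 + y13*(0-1)*(1+3*9)^22*(1-9)^13 + y15*(0-1)*(1+3*9)^20*(1-9)^15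 + y17*(0-1)*(1+3*9)^18*(1-9)^17 + y19*(0-1)*(1+3*9)^16*(1-9)^19 + y21*(0-1)*(1+3*9)^14*(1-9)^21 + y23*(0-1)*(1+3*9)^12*(1-9)^23 + y25*(0-1)*(1+3*9)^10*(1-9)^25 + y27*(0-1)*(1+3*9)^8*(1-9)^27 + y29*(0-1)*(1+3*9)^6*(1-9)^29 + y31*(0-1)*(1+3*9)^4*(1-9)^31 + y33*(0-1)*(1+3*9)^2*(1-9)^33 + y35*(0-1)*(1+3*9)^0*(1-9)^35 ->
  4^18*(1*(1 + x12*10^12 + x14*10^14 + x16*10^16 + x18*10^18 + x20*10^20 + x22*10^22 + x24*10^24 + x26*10^26 + x28*10^28 + x30*10^30 + x32*10^32 + x34*10^34) + 0*(y11*10^11 + y13*10^13 + y15*10^15 + y17*10^17 + y19*10^19 + y21*10^21 + y23*10^23 + y25*10^25 + y27*10^27 + y29*10^29 + y31*10^31 + y33*10^33 + y35*10^35)) = (1+3*0)*(1+3*10)^35 + x12*(1+3*0)*(1+3*10)^23*(1-10)^12 + x14*(1+3*0)*(1+3*10)^21*(1-10)^14 + x16*(1+3*0)*(1+3*10)^19*(1-10)^16 + x18*(1+3*0)*(1+3*10)^17*(1-10)^18 + x20*(1+3*0)*(1+3*10)^15*(1-10)^20 + x22*(1+3*0)*(1+3*10)^13*(1-10)^22 + x24*(1+3*0)*(1+3*10)^11*(1-10)^24 + x26*(1+3*0)*(1+3*10)^9*(1-10)^26 + x28*(1+3*0)*(1+3*10)^7*(1-10)^28 + x30*(1+3*0)*(1+3*10)^5*(1-10)^30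 + x32*(1+3*0)*(1+3*10)^3*(1-10)^32 + x34*(1+3*0)*(1+3*10)^1*(1-10)^34 + y11*(1-0)*(1+3*10)^24*(1-10)^11 + y13*(1-0)*(1+3*10)^22*(1-10)^13 + y15*(1-0)*(1+3*10)^20*(1-10)^15 + y17*(1-0)*(1+3*10)^18*(1-10)^17 + y19*(1-0)*(1+3*10)^16*(1-10)^19 + y21*(1-0)*(1+3*10)^14*(1-10)^21 + y23*(1-0)*(1+3*10)^12*(1-10)^23 + y25*(1-0)*(1+3*10)^10*(1-10)^25 + y27*(1-0)*(1+3*10)^8*(1-10)^27 + y29*(1-0)*(1+3*10)^6*(1-10)^29 + y31*(1-0)*(1+3*10)^4*(1-10)^31 + y33*(1-0)*(1+3*10)^2*(1-10)^33 + y35*(1-0)*(1+3*10)^0*(1-10)^35 ->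
  4^18*(0*(1 + x12*10^12 + x14*10^14 + x16*10^16 + x18*10^18 + x20*10^20 + x22*10^22 + x24*10^24 + x26*10^26 + x28*10^28 + x30*10^30 + x32*10^32 + x34*10^34) + 1*(y11*10^11 + y13*10^13 + y15*10^15 + y17*10^17 + y19*10^19 + y21*10^21 + y23*10^23 + y25*10^25 + y27*10^27 + y29*10^29 + y31*10^31 + y33*10^33 + y35*10^35)) = (0+3*1)*(1+3*10)^35 + x12*(0+3*1)*(1+3*10)^23*(1-10)^12 + x14*(0+3*1)*(1+3*10)^21*(1-10)^14 + x16*(0+3*1)*(1+3*10)^19*(1-10)^16 + x18*(0+3*1)*(1+3*10)^17*(1-10)^18 + x20*(0+3*1)*(1+3*10)^15*(1-10)^20 + x22*(0+3*1)*(1+3*10)^13*(1-10)^22 + x24*(0+3*1)*(1+3*10)^11*(1-10)^24 + x26*(0+3*1)*(1+3*10)^9*(1-10)^26 + x28*(0+3*1)*(1+3*10)^7*(1-10)^28 + x30*(0+3*1)*(1+3*10)^5*(1-10)^30 + x32*(0+3*1)*(1+3*10)^3*(1-10)^32 + x34*(0+3*1)*(1+3*10)^1*(1-10)^34 + y11*(0-1)*(1+3*10)^24*(1-10)^11 + y13*(0-1)*(1+3*10)^22*(1-10)^13 + y15*(0-1)*(1+3*10)^20*(1-10)^15 + y17*(0-1)*(1+3*10)^18*(1-10)^17 + y19*(0-1)*(1+3*10)^16*(1-10)^19 + y21*(0-1)*(1+3*10)^14*(1-10)^21 + y23*(0-1)*(1+3*10)^12*(1-10)^23 + y25*(0-1)*(1+3*10)^10*(1-10)^25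 + y27*(0-1)*(1+3*10)^8*(1-10)^27 + y29*(0-1)*(1+3*10)^6*(1-10)^29 + y31*(0-1)*(1+3*10)^4*(1-10)^31 + y33*(0-1)*(1+3*10)^2*(1-10)^33 + y35*(0-1)*(1+3*10)^0*(1-10)^35 ->
  4^18*(1*(1 + x12*11^12 + x14*11^14 + x16*11^16 + x18*11^18 + x20*11^20 + x22*11^22 + x24*11^24 + x26*11^26 + x28*11^28 + x30*11^30 + x32*11^32 + x34*11^34) + 0*(y11*11^11 + y13*11^13 + y15*11^15 + y17*11^17 + y19*11^19 + y21*11^21 + y23*11^23 + y25*11^25 + y27*11^27 + y29*11^29 + y31*11^31 + y33*11^33 + y35*11^35)) = (1+3*0)*(1+3*11)^35 + x12*(1+3*0)*(1+3*11)^23*(1-11)^12 + x14*(1+3*0)*(1+3*11)^21*(1-11)^14 + x16*(1+3*0)*(1+3*11)^19*(1-11)^16 + x18*(1+3*0)*(1+3*11)^17*(1-11)^18 + x20*(1+3*0)*(1+3*11)^15*(1-11)^20 + x22*(1+3*0)*(1+3*11)^13*(1-11)^22 + x24*(1+3*0)*(1+3*11)^11*(1-11)^24 + x26*(1+3*0)*(1+3*11)^9*(1-11)^26 + x28*(1+3*0)*(1+3*11)^7*(1-11)^28 + x30*(1+3*0)*(1+3*11)^5*(1-11)^30 + x32*(1+3*0)*(1+3*11)^3*(1-11)^32 + x34*(1+3*0)*(1+3*11)^1*(1-11)^34 + y11*(1-0)*(1+3*11)^24*(1-11)^11 + y13*(1-0)*(1+3*11)^22*(1-11)^13 + y15*(1-0)*(1+3*11)^20*(1-11)^15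 + y17*(1-0)*(1+3*11)^18*(1-11)^17 + y19*(1-0)*(1+3*11)^16*(1-11)^19 + y21*(1-0)*(1+3*11)^14*(1-11)^21 + y23*(1-0)*(1+3*11)^12*(1-11)^23 + y25*(1-0)*(1+3*11)^10*(1-11)^25 + y27*(1-0)*(1+3*11)^8*(1-11)^27 + y29*(1-0)*(1+3*11)^6*(1-11)^29 + y31*(1-0)*(1+3*11)^4*(1-11)^31 + y33*(1-0)*(1+3*11)^2*(1-11)^33 + y35*(1-0)*(1+3*11)^0*(1-11)^35 ->
  4^18*(0*(1 + x12*11^12 + x14*11^14 + x16*11^16 + x18*11^18 + x20*11^20 + x22*11^22 + x24*11^24 + x26*11^26 + x28*11^28 + x30*11^30 + x32*11^32 + x34*11^34) + 1*(y11*11^11 + y13*11^13 + y15*11^15 + y17*11^17 + y19*11^19 + y21*11^21 + y23*11^23 + y25*11^25 + y27*11^27 + y29*11^29 + y31*11^31 + y33*11^33 + y35*11^35)) = (0+3*1)*(1+3*11)^35 + x12*(0+3*1)*(1+3*11)^23*(1-11)^12 + x14*(0+3*1)*(1+3*11)^21*(1-11)^14 + x16*(0+3*1)*(1+3*11)^19*(1-11)^16 + x18*(0+3*1)*(1+3*11)^17*(1-11)^18 + x20*(0+3*1)*(1+3*11)^15*(1-11)^20 + x22*(0+3*1)*(1+3*11)^13*(1-11)^22 + x24*(0+3*1)*(1+3*11)^11*(1-11)^24 + x26*(0+3*1)*(1+3*11)^9*(1-11)^26 + x28*(0+3*1)*(1+3*11)^7*(1-11)^28 + x30*(0+3*1)*(1+3*11)^5*(1-11)^30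 + x32*(0+3*1)*(1+3*11)^3*(1-11)^32 + x34*(0+3*1)*(1+3*11)^1*(1-11)^34 + y11*(0-1)*(1+3*11)^24*(1-11)^11 + y13*(0-1)*(1+3*11)^22*(1-11)^13 + y15*(0-1)*(1+3*11)^20*(1-11)^15 + y17*(0-1)*(1+3*11)^18*(1-11)^17 + y19*(0-1)*(1+3*11)^16*(1-11)^19 + y21*(0-1)*(1+3*11)^14*(1-11)^21 + y23*(0-1)*(1+3*11)^12*(1-11)^23 + y25*(0-1)*(1+3*11)^10*(1-11)^25 + y27*(0-1)*(1+3*11)^8*(1-11)^27 + y29*(0-1)*(1+3*11)^6*(1-11)^29 + y31*(0-1)*(1+3*11)^4*(1-11)^31 + y33*(0-1)*(1+3*11)^2*(1-11)^33 + y35*(0-1)*(1+3*11)^0*(1-11)^35 ->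
  4^18*(1*(1 + x12*12^12 + x14*12^14 + x16*12^16 + x18*12^18 + x20*12^20 + x22*12^22 + x24*12^24 + x26*12^26 + x28*12^28 + x30*12^30 + x32*12^32 + x34*12^34) + 0*(y11*12^11 + y13*12^13 + y15*12^15 + y17*12^17 + y19*12^19 + y21*12^21 + y23*12^23 + y25*12^25 + y27*12^27 + y29*12^29 + y31*12^31 + y33*12^33 + y35*12^35)) = (1+3*0)*(1+3*12)^35 + x12*(1+3*0)*(1+3*12)^23*(1-12)^12 + x14*(1+3*0)*(1+3*12)^21*(1-12)^14 + x16*(1+3*0)*(1+3*12)^19*(1-12)^16 + x18*(1+3*0)*(1+3*12)^17*(1-12)^18 + x20*(1+3*0)*(1+3*12)^15*(1-12)^20 + x22*(1+3*0)*(1+3*12)^13*(1-12)^22 + x24*(1+3*0)*(1+3*12)^11*(1-12)^24 + x26*(1+3*0)*(1+3*12)^9*(1-12)^26 + x28*(1+3*0)*(1+3*12)^7*(1-12)^28 + x30*(1+3*0)*(1+3*12)^5*(1-12)^30 + x32*(1+3*0)*(1+3*12)^3*(1-12)^32 + x34*(1+3*0)*(1+3*12)^1*(1-12)^34 + y11*(1-0)*(1+3*12)^24*(1-12)^11 + y13*(1-0)*(1+3*12)^22*(1-12)^13 + y15*(1-0)*(1+3*12)^20*(1-12)^15 + y17*(1-0)*(1+3*12)^18*(1-12)^17 + y19*(1-0)*(1+3*12)^16*(1-12)^19 + y21*(1-0)*(1+3*12)^14*(1-12)^21 + y23*(1-0)*(1+3*12)^12*(1-12)^23 + y25*(1-0)*(1+3*12)^10*(1-12)^25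 + y27*(1-0)*(1+3*12)^8*(1-12)^27 + y29*(1-0)*(1+3*12)^6*(1-12)^29 + y31*(1-0)*(1+3*12)^4*(1-12)^31 + y33*(1-0)*(1+3*12)^2*(1-12)^33 + y35*(1-0)*(1+3*12)^0*(1-12)^35 ->
  4^18*(0*(1 + x12*12^12 + x14*12^14 + x16*12^16 + x18*12^18 + x20*12^20 + x22*12^22 + x24*12^24 + x26*12^26 + x28*12^28 + x30*12^30 + x32*12^32 + x34*12^34) + 1*(y11*12^11 + y13*12^13 + y15*12^15 + y17*12^17 + y19*12^19 + y21*12^21 + y23*12^23 + y25*12^25 + y27*12^27 + y29*12^29 + y31*12^31 + y33*12^33 + y35*12^35)) = (0+3*1)*(1+3*12)^35 + x12*(0+3*1)*(1+3*12)^23*(1-12)^12 + x14*(0+3*1)*(1+3*12)^21*(1-12)^14 + x16*(0+3*1)*(1+3*12)^19*(1-12)^16 + x18*(0+3*1)*(1+3*12)^17*(1-12)^18 + x20*(0+3*1)*(1+3*12)^15*(1-12)^20 + x22*(0+3*1)*(1+3*12)^13*(1-12)^22 + x24*(0+3*1)*(1+3*12)^11*(1-12)^24 + x26*(0+3*1)*(1+3*12)^9*(1-12)^26 + x28*(0+3*1)*(1+3*12)^7*(1-12)^28 + x30*(0+3*1)*(1+3*12)^5*(1-12)^30 + x32*(0+3*1)*(1+3*12)^3*(1-12)^32 + x34*(0+3*1)*(1+3*12)^1*(1-12)^34 + y11*(0-1)*(1+3*12)^24*(1-12)^11 + y13*(0-1)*(1+3*12)^22*(1-12)^13 + y15*(0-1)*(1+3*12)^20*(1-12)^15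 + y17*(0-1)*(1+3*12)^18*(1-12)^17 + y19*(0-1)*(1+3*12)^16*(1-12)^19 + y21*(0-1)*(1+3*12)^14*(1-12)^21 + y23*(0-1)*(1+3*12)^12*(1-12)^23 + y25*(0-1)*(1+3*12)^10*(1-12)^25 + y27*(0-1)*(1+3*12)^8*(1-12)^27 + y29*(0-1)*(1+3*12)^6*(1-12)^29 + y31*(0-1)*(1+3*12)^4*(1-12)^31 + y33*(0-1)*(1+3*12)^2*(1-12)^33 + y35*(0-1)*(1+3*12)^0*(1-12)^35 ->
  (x12 = 2*y11 /\ 12*(x12+y11)+x14+y13 = 771120).
Proof.
intros h0 h1 h2 h3 h4 h5 h6 h7 h8 h9 h10 h11 h12 h13 h14 h15 h16 h17 h18 h19 h20 h21 h22 h23 h24 h25.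
assert (ET1 : 634933983564943432537658239784327012431143633858540297513239949239118662079874700313896816623007607795696540000336098299794302993148539968094754087381305920904556844154880000000*(x12 - 2*y11) = (-1730134790098227505727279744405236826117513938362761874266733622911625984757476321908346470889119217717416975908644974590212840563100663546547080397939178096624206808990351360)*((4^18*(1*(1 + x12*0^12 + x14*0^14 + x16*0^16 + x18*0^18 + x20*0^20 + x22*0^22 + x24*0^24 + x26*0^26 + x28*0^28 + x30*0^30 + x32*0^32 + x34*0^34) + 0*(y11*0^11 + y13*0^13 + y15*0^15 + y17*0^17 + y19*0^19 + y21*0^21 + y23*0^23 + y25*0^25 + y27*0^27 + y29*0^29 + y31*0^31 + y33*0^33 + y35*0^35))) - ((1+3*0)*(1+3*0)^35 + x12*(1+3*0)*(1+3*0)^23*(1-0)^12 + x14*(1+3*0)*(1+3*0)^21*(1-0)^14 + x16*(1+3*0)*(1+3*0)^19*(1-0)^16 + x18*(1+3*0)*(1+3*0)^17*(1-0)^18 + x20*(1+3*0)*(1+3*0)^15*(1-0)^20 + x22*(1+3*0)*(1+3*0)^13*(1-0)^22 + x24*(1+3*0)*(1+3*0)^11*(1-0)^24 + x26*(1+3*0)*(1+3*0)^9*(1-0)^26 + x28*(1+3*0)*(1+3*0)^7*(1-0)^28 + x30*(1+3*0)*(1+3*0)^5*(1-0)^30 + x32*(1+3*0)*(1+3*0)^3*(1-0)^32 + x34*(1+3*0)*(1+3*0)^1*(1-0)^34 + y11*(1-0)*(1+3*0)^24*(1-0)^11 + y13*(1-0)*(1+3*0)^22*(1-0)^13 + y15*(1-0)*(1+3*0)^20*(1-0)^15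 + y17*(1-0)*(1+3*0)^18*(1-0)^17 + y19*(1-0)*(1+3*0)^16*(1-0)^19 + y21*(1-0)*(1+3*0)^14*(1-0)^21 + y23*(1-0)*(1+3*0)^12*(1-0)^23 + y25*(1-0)*(1+3*0)^10*(1-0)^25 + y27*(1-0)*(1+3*0)^8*(1-0)^27 + y29*(1-0)*(1+3*0)^6*(1-0)^29 + y31*(1-0)*(1+3*0)^4*(1-0)^31 + y33*(1-0)*(1+3*0)^2*(1-0)^33 + y35*(1-0)*(1+3*0)^0*(1-0)^35)) + (-355208591902842907168699709979199087583249761588523978280144249816858434233024448525018654060992917881810702723526310610962670788726963589932377595470005699684702808189173760)*((4^18*(0*(1 + x12*0^12 + x14*0^14 + x16*0^16 + x18*0^18 + x20*0^20 + x22*0^22 + x24*0^24 + x26*0^26 + x28*0^28 + x30*0^30 + x32*0^32 + x34*0^34) + 1*(y11*0^11 + y13*0^13 + y15*0^15 + y17*0^17 + y19*0^19 + y21*0^21 + y23*0^23 + y25*0^25 + y27*0^27 + y29*0^29 + y31*0^31 + y33*0^33 + y35*0^35))) - ((0+3*1)*(1+3*0)^35 + x12*(0+3*1)*(1+3*0)^23*(1-0)^12 + x14*(0+3*1)*(1+3*0)^21*(1-0)^14 + x16*(0+3*1)*(1+3*0)^19*(1-0)^16 + x18*(0+3*1)*(1+3*0)^17*(1-0)^18 + x20*(0+3*1)*(1+3*0)^15*(1-0)^20 + x22*(0+3*1)*(1+3*0)^13*(1-0)^22 + x24*(0+3*1)*(1+3*0)^11*(1-0)^24 + x26*(0+3*1)*(1+3*0)^9*(1-0)^26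 + x28*(0+3*1)*(1+3*0)^7*(1-0)^28 + x30*(0+3*1)*(1+3*0)^5*(1-0)^30 + x32*(0+3*1)*(1+3*0)^3*(1-0)^32 + x34*(0+3*1)*(1+3*0)^1*(1-0)^34 + y11*(0-1)*(1+3*0)^24*(1-0)^11 + y13*(0-1)*(1+3*0)^22*(1-0)^13 + y15*(0-1)*(1+3*0)^20*(1-0)^15 + y17*(0-1)*(1+3*0)^18*(1-0)^17 + y19*(0-1)*(1+3*0)^16*(1-0)^19 + y21*(0-1)*(1+3*0)^14*(1-0)^21 + y23*(0-1)*(1+3*0)^12*(1-0)^23 + y25*(0-1)*(1+3*0)^10*(1-0)^25 + y27*(0-1)*(1+3*0)^8*(1-0)^27 + y29*(0-1)*(1+3*0)^6*(1-0)^29 + y31*(0-1)*(1+3*0)^4*(1-0)^31 + y33*(0-1)*(1+3*0)^2*(1-0)^33 + y35*(0-1)*(1+3*0)^0*(1-0)^35)) + (-27653678238746698910279264763254975020836642891897665366027661624384789808655717965408953387982459307837060488662898138131073827298673806414027570921120727040)*((4^18*(1*(1 + x12*2^12 + x14*2^14 + x16*2^16 + x18*2^18 + x20*2^20 + x22*2^22 + x24*2^24 + x26*2^26 + x28*2^28 + x30*2^30 + x32*2^32 + x34*2^34) + 0*(y11*2^11 + y13*2^13 + y15*2^15 + y17*2^17 + y19*2^19 + y21*2^21 + y23*2^23 + y25*2^25 + y27*2^27 + y29*2^29 + y31*2^31 + y33*2^33 + y35*2^35))) - ((1+3*0)*(1+3*2)^35 + x12*(1+3*0)*(1+3*2)^23*(1-2)^12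 + x14*(1+3*0)*(1+3*2)^21*(1-2)^14 + x16*(1+3*0)*(1+3*2)^19*(1-2)^16 + x18*(1+3*0)*(1+3*2)^17*(1-2)^18 + x20*(1+3*0)*(1+3*2)^15*(1-2)^20 + x22*(1+3*0)*(1+3*2)^13*(1-2)^22 + x24*(1+3*0)*(1+3*2)^11*(1-2)^24 + x26*(1+3*0)*(1+3*2)^9*(1-2)^26 + x28*(1+3*0)*(1+3*2)^7*(1-2)^28 + x30*(1+3*0)*(1+3*2)^5*(1-2)^30 + x32*(1+3*0)*(1+3*2)^3*(1-2)^32 + x34*(1+3*0)*(1+3*2)^1*(1-2)^34 + y11*(1-0)*(1+3*2)^24*(1-2)^11 + y13*(1-0)*(1+3*2)^22*(1-2)^13 + y15*(1-0)*(1+3*2)^20*(1-2)^15 + y17*(1-0)*(1+3*2)^18*(1-2)^17 + y19*(1-0)*(1+3*2)^16*(1-2)^19 + y21*(1-0)*(1+3*2)^14*(1-2)^21 + y23*(1-0)*(1+3*2)^12*(1-2)^23 + y25*(1-0)*(1+3*2)^10*(1-2)^25 + y27*(1-0)*(1+3*2)^8*(1-2)^27 + y29*(1-0)*(1+3*2)^6*(1-2)^29 + y31*(1-0)*(1+3*2)^4*(1-2)^31 + y33*(1-0)*(1+3*2)^2*(1-2)^33 + y35*(1-0)*(1+3*2)^0*(1-2)^35)) + (-4265908150457184157482340231078736035941243675552708316789712371496392887761195892081888032557582871228031990734027473348089292304269477623351639259616378880)*((4^18*(0*(1 + x12*2^12 + x14*2^14 + x16*2^16 + x18*2^18 + x20*2^20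 + x22*2^22 + x24*2^24 + x26*2^26 + x28*2^28 + x30*2^30 + x32*2^32 + x34*2^34) + 1*(y11*2^11 + y13*2^13 + y15*2^15 + y17*2^17 + y19*2^19 + y21*2^21 + y23*2^23 + y25*2^25 + y27*2^27 + y29*2^29 + y31*2^31 + y33*2^33 + y35*2^35))) - ((0+3*1)*(1+3*2)^35 + x12*(0+3*1)*(1+3*2)^23*(1-2)^12 + x14*(0+3*1)*(1+3*2)^21*(1-2)^14 + x16*(0+3*1)*(1+3*2)^19*(1-2)^16 + x18*(0+3*1)*(1+3*2)^17*(1-2)^18 + x20*(0+3*1)*(1+3*2)^15*(1-2)^20 + x22*(0+3*1)*(1+3*2)^13*(1-2)^22 + x24*(0+3*1)*(1+3*2)^11*(1-2)^24 + x26*(0+3*1)*(1+3*2)^9*(1-2)^26 + x28*(0+3*1)*(1+3*2)^7*(1-2)^28 + x30*(0+3*1)*(1+3*2)^5*(1-2)^30 + x32*(0+3*1)*(1+3*2)^3*(1-2)^32 + x34*(0+3*1)*(1+3*2)^1*(1-2)^34 + y11*(0-1)*(1+3*2)^24*(1-2)^11 + y13*(0-1)*(1+3*2)^22*(1-2)^13 + y15*(0-1)*(1+3*2)^20*(1-2)^15 + y17*(0-1)*(1+3*2)^18*(1-2)^17 + y19*(0-1)*(1+3*2)^16*(1-2)^19 + y21*(0-1)*(1+3*2)^14*(1-2)^21 + y23*(0-1)*(1+3*2)^12*(1-2)^23 + y25*(0-1)*(1+3*2)^10*(1-2)^25 + y27*(0-1)*(1+3*2)^8*(1-2)^27 + y29*(0-1)*(1+3*2)^6*(1-2)^29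 + y31*(0-1)*(1+3*2)^4*(1-2)^31 + y33*(0-1)*(1+3*2)^2*(1-2)^33 + y35*(0-1)*(1+3*2)^0*(1-2)^35)) + (7599901037004139565958203954767528202978669713490119163621692045439514870087592017150125647235265354128959344892958499630937549043237286084480196972800000)*((4^18*(1*(1 + x12*3^12 + x14*3^14 + x16*3^16 + x18*3^18 + x20*3^20 + x22*3^22 + x24*3^24 + x26*3^26 + x28*3^28 + x30*3^30 + x32*3^32 + x34*3^34) + 0*(y11*3^11 + y13*3^13 + y15*3^15 + y17*3^17 + y19*3^19 + y21*3^21 + y23*3^23 + y25*3^25 + y27*3^27 + y29*3^29 + y31*3^31 + y33*3^33 + y35*3^35))) - ((1+3*0)*(1+3*3)^35 + x12*(1+3*0)*(1+3*3)^23*(1-3)^12 + x14*(1+3*0)*(1+3*3)^21*(1-3)^14 + x16*(1+3*0)*(1+3*3)^19*(1-3)^16 + x18*(1+3*0)*(1+3*3)^17*(1-3)^18 + x20*(1+3*0)*(1+3*3)^15*(1-3)^20 + x22*(1+3*0)*(1+3*3)^13*(1-3)^22 + x24*(1+3*0)*(1+3*3)^11*(1-3)^24 + x26*(1+3*0)*(1+3*3)^9*(1-3)^26 + x28*(1+3*0)*(1+3*3)^7*(1-3)^28 + x30*(1+3*0)*(1+3*3)^5*(1-3)^30 + x32*(1+3*0)*(1+3*3)^3*(1-3)^32 + x34*(1+3*0)*(1+3*3)^1*(1-3)^34 + y11*(1-0)*(1+3*3)^24*(1-3)^11 + y13*(1-0)*(1+3*3)^22*(1-3)^13 + y15*(1-0)*(1+3*3)^20*(1-3)^15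 + y17*(1-0)*(1+3*3)^18*(1-3)^17 + y19*(1-0)*(1+3*3)^16*(1-3)^19 + y21*(1-0)*(1+3*3)^14*(1-3)^21 + y23*(1-0)*(1+3*3)^12*(1-3)^23 + y25*(1-0)*(1+3*3)^10*(1-3)^25 + y27*(1-0)*(1+3*3)^8*(1-3)^27 + y29*(1-0)*(1+3*3)^6*(1-3)^29 + y31*(1-0)*(1+3*3)^4*(1-3)^31 + y33*(1-0)*(1+3*3)^2*(1-3)^33 + y35*(1-0)*(1+3*3)^0*(1-3)^35)) + (389472985400565650467606805489211444855724399652388316593550455944749820939418155523697033943739678918097543859907623744131804888561307224208997907200000)*((4^18*(0*(1 + x12*3^12 + x14*3^14 + x16*3^16 + x18*3^18 + x20*3^20 + x22*3^22 + x24*3^24 + x26*3^26 + x28*3^28 + x30*3^30 + x32*3^32 + x34*3^34) + 1*(y11*3^11 + y13*3^13 + y15*3^15 + y17*3^17 + y19*3^19 + y21*3^21 + y23*3^23 + y25*3^25 + y27*3^27 + y29*3^29 + y31*3^31 + y33*3^33 + y35*3^35))) - ((0+3*1)*(1+3*3)^35 + x12*(0+3*1)*(1+3*3)^23*(1-3)^12 + x14*(0+3*1)*(1+3*3)^21*(1-3)^14 + x16*(0+3*1)*(1+3*3)^19*(1-3)^16 + x18*(0+3*1)*(1+3*3)^17*(1-3)^18 + x20*(0+3*1)*(1+3*3)^15*(1-3)^20 + x22*(0+3*1)*(1+3*3)^13*(1-3)^22 + x24*(0+3*1)*(1+3*3)^11*(1-3)^24 + x26*(0+3*1)*(1+3*3)^9*(1-3)^26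 + x28*(0+3*1)*(1+3*3)^7*(1-3)^28 + x30*(0+3*1)*(1+3*3)^5*(1-3)^30 + x32*(0+3*1)*(1+3*3)^3*(1-3)^32 + x34*(0+3*1)*(1+3*3)^1*(1-3)^34 + y11*(0-1)*(1+3*3)^24*(1-3)^11 + y13*(0-1)*(1+3*3)^22*(1-3)^13 + y15*(0-1)*(1+3*3)^20*(1-3)^15 + y17*(0-1)*(1+3*3)^18*(1-3)^17 + y19*(0-1)*(1+3*3)^16*(1-3)^19 + y21*(0-1)*(1+3*3)^14*(1-3)^21 + y23*(0-1)*(1+3*3)^12*(1-3)^23 + y25*(0-1)*(1+3*3)^10*(1-3)^25 + y27*(0-1)*(1+3*3)^8*(1-3)^27 + y29*(0-1)*(1+3*3)^6*(1-3)^29 + y31*(0-1)*(1+3*3)^4*(1-3)^31 + y33*(0-1)*(1+3*3)^2*(1-3)^33 + y35*(0-1)*(1+3*3)^0*(1-3)^35)) + (-20402439165349865258719232732723825271069351091133861915050050234600496351424498296241685696549194903361263575074845399015025726765697681947459762257920)*((4^18*(1*(1 + x12*4^12 + x14*4^14 + x16*4^16 + x18*4^18 + x20*4^20 + x22*4^22 + x24*4^24 + x26*4^26 + x28*4^28 + x30*4^30 + x32*4^32 + x34*4^34) + 0*(y11*4^11 + y13*4^13 + y15*4^15 + y17*4^17 + y19*4^19 + y21*4^21 + y23*4^23 + y25*4^25 + y27*4^27 + y29*4^29 + y31*4^31 + y33*4^33 + y35*4^35))) - ((1+3*0)*(1+3*4)^35 + x12*(1+3*0)*(1+3*4)^23*(1-4)^12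 + x14*(1+3*0)*(1+3*4)^21*(1-4)^14 + x16*(1+3*0)*(1+3*4)^19*(1-4)^16 + x18*(1+3*0)*(1+3*4)^17*(1-4)^18 + x20*(1+3*0)*(1+3*4)^15*(1-4)^20 + x22*(1+3*0)*(1+3*4)^13*(1-4)^22 + x24*(1+3*0)*(1+3*4)^11*(1-4)^24 + x26*(1+3*0)*(1+3*4)^9*(1-4)^26 + x28*(1+3*0)*(1+3*4)^7*(1-4)^28 + x30*(1+3*0)*(1+3*4)^5*(1-4)^30 + x32*(1+3*0)*(1+3*4)^3*(1-4)^32 + x34*(1+3*0)*(1+3*4)^1*(1-4)^34 + y11*(1-0)*(1+3*4)^24*(1-4)^11 + y13*(1-0)*(1+3*4)^22*(1-4)^13 + y15*(1-0)*(1+3*4)^20*(1-4)^15 + y17*(1-0)*(1+3*4)^18*(1-4)^17 + y19*(1-0)*(1+3*4)^16*(1-4)^19 + y21*(1-0)*(1+3*4)^14*(1-4)^21 + y23*(1-0)*(1+3*4)^12*(1-4)^23 + y25*(1-0)*(1+3*4)^10*(1-4)^25 + y27*(1-0)*(1+3*4)^8*(1-4)^27 + y29*(1-0)*(1+3*4)^6*(1-4)^29 + y31*(1-0)*(1+3*4)^4*(1-4)^31 + y33*(1-0)*(1+3*4)^2*(1-4)^33 + y35*(1-0)*(1+3*4)^0*(1-4)^35)) + (48379090339198256001468435149354324598995882945616984876230768642586538670275852430604195708883283169243795061703856580222116674787339112652419891200)*((4^18*(0*(1 + x12*4^12 + x14*4^14 + x16*4^16 + x18*4^18 + x20*4^20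 + x22*4^22 + x24*4^24 + x26*4^26 + x28*4^28 + x30*4^30 + x32*4^32 + x34*4^34) + 1*(y11*4^11 + y13*4^13 + y15*4^15 + y17*4^17 + y19*4^19 + y21*4^21 + y23*4^23 + y25*4^25 + y27*4^27 + y29*4^29 + y31*4^31 + y33*4^33 + y35*4^35))) - ((0+3*1)*(1+3*4)^35 + x12*(0+3*1)*(1+3*4)^23*(1-4)^12 + x14*(0+3*1)*(1+3*4)^21*(1-4)^14 + x16*(0+3*1)*(1+3*4)^19*(1-4)^16 + x18*(0+3*1)*(1+3*4)^17*(1-4)^18 + x20*(0+3*1)*(1+3*4)^15*(1-4)^20 + x22*(0+3*1)*(1+3*4)^13*(1-4)^22 + x24*(0+3*1)*(1+3*4)^11*(1-4)^24 + x26*(0+3*1)*(1+3*4)^9*(1-4)^26 + x28*(0+3*1)*(1+3*4)^7*(1-4)^28 + x30*(0+3*1)*(1+3*4)^5*(1-4)^30 + x32*(0+3*1)*(1+3*4)^3*(1-4)^32 + x34*(0+3*1)*(1+3*4)^1*(1-4)^34 + y11*(0-1)*(1+3*4)^24*(1-4)^11 + y13*(0-1)*(1+3*4)^22*(1-4)^13 + y15*(0-1)*(1+3*4)^20*(1-4)^15 + y17*(0-1)*(1+3*4)^18*(1-4)^17 + y19*(0-1)*(1+3*4)^16*(1-4)^19 + y21*(0-1)*(1+3*4)^14*(1-4)^21 + y23*(0-1)*(1+3*4)^12*(1-4)^23 + y25*(0-1)*(1+3*4)^10*(1-4)^25 + y27*(0-1)*(1+3*4)^8*(1-4)^27 + y29*(0-1)*(1+3*4)^6*(1-4)^29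 + y31*(0-1)*(1+3*4)^4*(1-4)^31 + y33*(0-1)*(1+3*4)^2*(1-4)^33 + y35*(0-1)*(1+3*4)^0*(1-4)^35)) + (171409279360801401306598254208741795220815194179806552450221586538930905134460164219935954002827313632504356710347654930082125510714134397598323523584)*((4^18*(1*(1 + x12*5^12 + x14*5^14 + x16*5^16 + x18*5^18 + x20*5^20 + x22*5^22 + x24*5^24 + x26*5^26 + x28*5^28 + x30*5^30 + x32*5^32 + x34*5^34) + 0*(y11*5^11 + y13*5^13 + y15*5^15 + y17*5^17 + y19*5^19 + y21*5^21 + y23*5^23 + y25*5^25 + y27*5^27 + y29*5^29 + y31*5^31 + y33*5^33 + y35*5^35))) - ((1+3*0)*(1+3*5)^35 + x12*(1+3*0)*(1+3*5)^23*(1-5)^12 + x14*(1+3*0)*(1+3*5)^21*(1-5)^14 + x16*(1+3*0)*(1+3*5)^19*(1-5)^16 + x18*(1+3*0)*(1+3*5)^17*(1-5)^18 + x20*(1+3*0)*(1+3*5)^15*(1-5)^20 + x22*(1+3*0)*(1+3*5)^13*(1-5)^22 + x24*(1+3*0)*(1+3*5)^11*(1-5)^24 + x26*(1+3*0)*(1+3*5)^9*(1-5)^26 + x28*(1+3*0)*(1+3*5)^7*(1-5)^28 + x30*(1+3*0)*(1+3*5)^5*(1-5)^30 + x32*(1+3*0)*(1+3*5)^3*(1-5)^32 + x34*(1+3*0)*(1+3*5)^1*(1-5)^34 + y11*(1-0)*(1+3*5)^24*(1-5)^11 + y13*(1-0)*(1+3*5)^22*(1-5)^13 + y15*(1-0)*(1+3*5)^20*(1-5)^15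 + y17*(1-0)*(1+3*5)^18*(1-5)^17 + y19*(1-0)*(1+3*5)^16*(1-5)^19 + y21*(1-0)*(1+3*5)^14*(1-5)^21 + y23*(1-0)*(1+3*5)^12*(1-5)^23 + y25*(1-0)*(1+3*5)^10*(1-5)^25 + y27*(1-0)*(1+3*5)^8*(1-5)^27 + y29*(1-0)*(1+3*5)^6*(1-5)^29 + y31*(1-0)*(1+3*5)^4*(1-5)^31 + y33*(1-0)*(1+3*5)^2*(1-5)^33 + y35*(1-0)*(1+3*5)^0*(1-5)^35)) + (-6115160457915378441277516769392118509125239465559883236409401396781480639394182095089615717048492271062433853386033415735162230857141539755546034176)*((4^18*(0*(1 + x12*5^12 + x14*5^14 + x16*5^16 + x18*5^18 + x20*5^20 + x22*5^22 + x24*5^24 + x26*5^26 + x28*5^28 + x30*5^30 + x32*5^32 + x34*5^34) + 1*(y11*5^11 + y13*5^13 + y15*5^15 + y17*5^17 + y19*5^19 + y21*5^21 + y23*5^23 + y25*5^25 + y27*5^27 + y29*5^29 + y31*5^31 + y33*5^33 + y35*5^35))) - ((0+3*1)*(1+3*5)^35 + x12*(0+3*1)*(1+3*5)^23*(1-5)^12 + x14*(0+3*1)*(1+3*5)^21*(1-5)^14 + x16*(0+3*1)*(1+3*5)^19*(1-5)^16 + x18*(0+3*1)*(1+3*5)^17*(1-5)^18 + x20*(0+3*1)*(1+3*5)^15*(1-5)^20 + x22*(0+3*1)*(1+3*5)^13*(1-5)^22 + x24*(0+3*1)*(1+3*5)^11*(1-5)^24 + x26*(0+3*1)*(1+3*5)^9*(1-5)^26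 + x28*(0+3*1)*(1+3*5)^7*(1-5)^28 + x30*(0+3*1)*(1+3*5)^5*(1-5)^30 + x32*(0+3*1)*(1+3*5)^3*(1-5)^32 + x34*(0+3*1)*(1+3*5)^1*(1-5)^34 + y11*(0-1)*(1+3*5)^24*(1-5)^11 + y13*(0-1)*(1+3*5)^22*(1-5)^13 + y15*(0-1)*(1+3*5)^20*(1-5)^15 + y17*(0-1)*(1+3*5)^18*(1-5)^17 + y19*(0-1)*(1+3*5)^16*(1-5)^19 + y21*(0-1)*(1+3*5)^14*(1-5)^21 + y23*(0-1)*(1+3*5)^12*(1-5)^23 + y25*(0-1)*(1+3*5)^10*(1-5)^25 + y27*(0-1)*(1+3*5)^8*(1-5)^27 + y29*(0-1)*(1+3*5)^6*(1-5)^29 + y31*(0-1)*(1+3*5)^4*(1-5)^31 + y33*(0-1)*(1+3*5)^2*(1-5)^33 + y35*(0-1)*(1+3*5)^0*(1-5)^35)) + (-2702154874612740145359399244470712521975611984174194671149642125114185442390036170017636025543701265695139625072962207172329940701277031109989761024)*((4^18*(1*(1 + x12*6^12 + x14*6^14 + x16*6^16 + x18*6^18 + x20*6^20 + x22*6^22 + x24*6^24 + x26*6^26 + x28*6^28 + x30*6^30 + x32*6^32 + x34*6^34) + 0*(y11*6^11 + y13*6^13 + y15*6^15 + y17*6^17 + y19*6^19 + y21*6^21 + y23*6^23 + y25*6^25 + y27*6^27 + y29*6^29 + y31*6^31 + y33*6^33 + y35*6^35))) - ((1+3*0)*(1+3*6)^35 + x12*(1+3*0)*(1+3*6)^23*(1-6)^12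 + x14*(1+3*0)*(1+3*6)^21*(1-6)^14 + x16*(1+3*0)*(1+3*6)^19*(1-6)^16 + x18*(1+3*0)*(1+3*6)^17*(1-6)^18 + x20*(1+3*0)*(1+3*6)^15*(1-6)^20 + x22*(1+3*0)*(1+3*6)^13*(1-6)^22 + x24*(1+3*0)*(1+3*6)^11*(1-6)^24 + x26*(1+3*0)*(1+3*6)^9*(1-6)^26 + x28*(1+3*0)*(1+3*6)^7*(1-6)^28 + x30*(1+3*0)*(1+3*6)^5*(1-6)^30 + x32*(1+3*0)*(1+3*6)^3*(1-6)^32 + x34*(1+3*0)*(1+3*6)^1*(1-6)^34 + y11*(1-0)*(1+3*6)^24*(1-6)^11 + y13*(1-0)*(1+3*6)^22*(1-6)^13 + y15*(1-0)*(1+3*6)^20*(1-6)^15 + y17*(1-0)*(1+3*6)^18*(1-6)^17 + y19*(1-0)*(1+3*6)^16*(1-6)^19 + y21*(1-0)*(1+3*6)^14*(1-6)^21 + y23*(1-0)*(1+3*6)^12*(1-6)^23 + y25*(1-0)*(1+3*6)^10*(1-6)^25 + y27*(1-0)*(1+3*6)^8*(1-6)^27 + y29*(1-0)*(1+3*6)^6*(1-6)^29 + y31*(1-0)*(1+3*6)^4*(1-6)^31 + y33*(1-0)*(1+3*6)^2*(1-6)^33 + y35*(1-0)*(1+3*6)^0*(1-6)^35)) + (157949006629490767772285511600250449257376693207524101575900646652793143858549899059553325108674766221611079338786927938252894606270614430390681600)*((4^18*(0*(1 + x12*6^12 + x14*6^14 + x16*6^16 + x18*6^18 + x20*6^20 +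 x22*6^22 + x24*6^24 + x26*6^26 + x28*6^28 + x30*6^30 + x32*6^32 + x34*6^34) + 1*(y11*6^11 + y13*6^13 + y15*6^15 + y17*6^17 + y19*6^19 + y21*6^21 + y23*6^23 + y25*6^25 + y27*6^27 + y29*6^29 + y31*6^31 + y33*6^33 + y35*6^35))) - ((0+3*1)*(1+3*6)^35 + x12*(0+3*1)*(1+3*6)^23*(1-6)^12 + x14*(0+3*1)*(1+3*6)^21*(1-6)^14 + x16*(0+3*1)*(1+3*6)^19*(1-6)^16 + x18*(0+3*1)*(1+3*6)^17*(1-6)^18 + x20*(0+3*1)*(1+3*6)^15*(1-6)^20 + x22*(0+3*1)*(1+3*6)^13*(1-6)^22 + x24*(0+3*1)*(1+3*6)^11*(1-6)^24 + x26*(0+3*1)*(1+3*6)^9*(1-6)^26 + x28*(0+3*1)*(1+3*6)^7*(1-6)^28 + x30*(0+3*1)*(1+3*6)^5*(1-6)^30 + x32*(0+3*1)*(1+3*6)^3*(1-6)^32 + x34*(0+3*1)*(1+3*6)^1*(1-6)^34 + y11*(0-1)*(1+3*6)^24*(1-6)^11 + y13*(0-1)*(1+3*6)^22*(1-6)^13 + y15*(0-1)*(1+3*6)^20*(1-6)^15 + y17*(0-1)*(1+3*6)^18*(1-6)^17 + y19*(0-1)*(1+3*6)^16*(1-6)^19 + y21*(0-1)*(1+3*6)^14*(1-6)^21 + y23*(0-1)*(1+3*6)^12*(1-6)^23 + y25*(0-1)*(1+3*6)^10*(1-6)^25 + y27*(0-1)*(1+3*6)^8*(1-6)^27 + y29*(0-1)*(1+3*6)^6*(1-6)^29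 + y31*(0-1)*(1+3*6)^4*(1-6)^31 + y33*(0-1)*(1+3*6)^2*(1-6)^33 + y35*(0-1)*(1+3*6)^0*(1-6)^35)) + (60314563744339387848128076885820918416879111026164740583003531585051802607444777154363043343803268736385666973645487777244607889429115528853421335)*((4^18*(1*(1 + x12*7^12 + x14*7^14 + x16*7^16 + x18*7^18 + x20*7^20 + x22*7^22 + x24*7^24 + x26*7^26 + x28*7^28 + x30*7^30 + x32*7^32 + x34*7^34) + 0*(y11*7^11 + y13*7^13 + y15*7^15 + y17*7^17 + y19*7^19 + y21*7^21 + y23*7^23 + y25*7^25 + y27*7^27 + y29*7^29 + y31*7^31 + y33*7^33 + y35*7^35))) - ((1+3*0)*(1+3*7)^35 + x12*(1+3*0)*(1+3*7)^23*(1-7)^12 + x14*(1+3*0)*(1+3*7)^21*(1-7)^14 + x16*(1+3*0)*(1+3*7)^19*(1-7)^16 + x18*(1+3*0)*(1+3*7)^17*(1-7)^18 + x20*(1+3*0)*(1+3*7)^15*(1-7)^20 + x22*(1+3*0)*(1+3*7)^13*(1-7)^22 + x24*(1+3*0)*(1+3*7)^11*(1-7)^24 + x26*(1+3*0)*(1+3*7)^9*(1-7)^26 + x28*(1+3*0)*(1+3*7)^7*(1-7)^28 + x30*(1+3*0)*(1+3*7)^5*(1-7)^30 + x32*(1+3*0)*(1+3*7)^3*(1-7)^32 + x34*(1+3*0)*(1+3*7)^1*(1-7)^34 + y11*(1-0)*(1+3*7)^24*(1-7)^11 + y13*(1-0)*(1+3*7)^22*(1-7)^13 + y15*(1-0)*(1+3*7)^20*(1-7)^15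 + y17*(1-0)*(1+3*7)^18*(1-7)^17 + y19*(1-0)*(1+3*7)^16*(1-7)^19 + y21*(1-0)*(1+3*7)^14*(1-7)^21 + y23*(1-0)*(1+3*7)^12*(1-7)^23 + y25*(1-0)*(1+3*7)^10*(1-7)^25 + y27*(1-0)*(1+3*7)^8*(1-7)^27 + y29*(1-0)*(1+3*7)^6*(1-7)^29 + y31*(1-0)*(1+3*7)^4*(1-7)^31 + y33*(1-0)*(1+3*7)^2*(1-7)^33 + y35*(1-0)*(1+3*7)^0*(1-7)^35)) + (-4525871759828500588700888079340804444998886653065530887925432681399648119573033536622651206103215333880470065668053594719527804574028544999203355)*((4^18*(0*(1 + x12*7^12 + x14*7^14 + x16*7^16 + x18*7^18 + x20*7^20 + x22*7^22 + x24*7^24 + x26*7^26 + x28*7^28 + x30*7^30 + x32*7^32 + x34*7^34) + 1*(y11*7^11 + y13*7^13 + y15*7^15 + y17*7^17 + y19*7^19 + y21*7^21 + y23*7^23 + y25*7^25 + y27*7^27 + y29*7^29 + y31*7^31 + y33*7^33 + y35*7^35))) - ((0+3*1)*(1+3*7)^35 + x12*(0+3*1)*(1+3*7)^23*(1-7)^12 + x14*(0+3*1)*(1+3*7)^21*(1-7)^14 + x16*(0+3*1)*(1+3*7)^19*(1-7)^16 + x18*(0+3*1)*(1+3*7)^17*(1-7)^18 + x20*(0+3*1)*(1+3*7)^15*(1-7)^20 + x22*(0+3*1)*(1+3*7)^13*(1-7)^22 + x24*(0+3*1)*(1+3*7)^11*(1-7)^24 + x26*(0+3*1)*(1+3*7)^9*(1-7)^26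 + x28*(0+3*1)*(1+3*7)^7*(1-7)^28 + x30*(0+3*1)*(1+3*7)^5*(1-7)^30 + x32*(0+3*1)*(1+3*7)^3*(1-7)^32 + x34*(0+3*1)*(1+3*7)^1*(1-7)^34 + y11*(0-1)*(1+3*7)^24*(1-7)^11 + y13*(0-1)*(1+3*7)^22*(1-7)^13 + y15*(0-1)*(1+3*7)^20*(1-7)^15 + y17*(0-1)*(1+3*7)^18*(1-7)^17 + y19*(0-1)*(1+3*7)^16*(1-7)^19 + y21*(0-1)*(1+3*7)^14*(1-7)^21 + y23*(0-1)*(1+3*7)^12*(1-7)^23 + y25*(0-1)*(1+3*7)^10*(1-7)^25 + y27*(0-1)*(1+3*7)^8*(1-7)^27 + y29*(0-1)*(1+3*7)^6*(1-7)^29 + y31*(0-1)*(1+3*7)^4*(1-7)^31 + y33*(0-1)*(1+3*7)^2*(1-7)^33 + y35*(0-1)*(1+3*7)^0*(1-7)^35)) + (-1589962490299731026660560400630206847303679964388278521972799021620175459506283974681134458616602872932859054553462007255009743666766980055040000)*((4^18*(1*(1 + x12*8^12 + x14*8^14 + x16*8^16 + x18*8^18 + x20*8^20 + x22*8^22 + x24*8^24 + x26*8^26 + x28*8^28 + x30*8^30 + x32*8^32 + x34*8^34) + 0*(y11*8^11 + y13*8^13 + y15*8^15 + y17*8^17 + y19*8^19 + y21*8^21 + y23*8^23 + y25*8^25 + y27*8^27 + y29*8^29 + y31*8^31 + y33*8^33 + y35*8^35))) - ((1+3*0)*(1+3*8)^35 + x12*(1+3*0)*(1+3*8)^23*(1-8)^12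 + x14*(1+3*0)*(1+3*8)^21*(1-8)^14 + x16*(1+3*0)*(1+3*8)^19*(1-8)^16 + x18*(1+3*0)*(1+3*8)^17*(1-8)^18 + x20*(1+3*0)*(1+3*8)^15*(1-8)^20 + x22*(1+3*0)*(1+3*8)^13*(1-8)^22 + x24*(1+3*0)*(1+3*8)^11*(1-8)^24 + x26*(1+3*0)*(1+3*8)^9*(1-8)^26 + x28*(1+3*0)*(1+3*8)^7*(1-8)^28 + x30*(1+3*0)*(1+3*8)^5*(1-8)^30 + x32*(1+3*0)*(1+3*8)^3*(1-8)^32 + x34*(1+3*0)*(1+3*8)^1*(1-8)^34 + y11*(1-0)*(1+3*8)^24*(1-8)^11 + y13*(1-0)*(1+3*8)^22*(1-8)^13 + y15*(1-0)*(1+3*8)^20*(1-8)^15 + y17*(1-0)*(1+3*8)^18*(1-8)^17 + y19*(1-0)*(1+3*8)^16*(1-8)^19 + y21*(1-0)*(1+3*8)^14*(1-8)^21 + y23*(1-0)*(1+3*8)^12*(1-8)^23 + y25*(1-0)*(1+3*8)^10*(1-8)^25 + y27*(1-0)*(1+3*8)^8*(1-8)^27 + y29*(1-0)*(1+3*8)^6*(1-8)^29 + y31*(1-0)*(1+3*8)^4*(1-8)^31 + y33*(1-0)*(1+3*8)^2*(1-8)^33 + y35*(1-0)*(1+3*8)^0*(1-8)^35)) + (139380238389158734939686096277067012470092671590381446070047180633136477984485238132360467450059091856543826105962564867455273612857636290560000)*((4^18*(0*(1 + x12*8^12 + x14*8^14 + x16*8^16 + x18*8^18 + x20*8^20 +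 x22*8^22 + x24*8^24 + x26*8^26 + x28*8^28 + x30*8^30 + x32*8^32 + x34*8^34) + 1*(y11*8^11 + y13*8^13 + y15*8^15 + y17*8^17 + y19*8^19 + y21*8^21 + y23*8^23 + y25*8^25 + y27*8^27 + y29*8^29 + y31*8^31 + y33*8^33 + y35*8^35))) - ((0+3*1)*(1+3*8)^35 + x12*(0+3*1)*(1+3*8)^23*(1-8)^12 + x14*(0+3*1)*(1+3*8)^21*(1-8)^14 + x16*(0+3*1)*(1+3*8)^19*(1-8)^16 + x18*(0+3*1)*(1+3*8)^17*(1-8)^18 + x20*(0+3*1)*(1+3*8)^15*(1-8)^20 + x22*(0+3*1)*(1+3*8)^13*(1-8)^22 + x24*(0+3*1)*(1+3*8)^11*(1-8)^24 + x26*(0+3*1)*(1+3*8)^9*(1-8)^26 + x28*(0+3*1)*(1+3*8)^7*(1-8)^28 + x30*(0+3*1)*(1+3*8)^5*(1-8)^30 + x32*(0+3*1)*(1+3*8)^3*(1-8)^32 + x34*(0+3*1)*(1+3*8)^1*(1-8)^34 + y11*(0-1)*(1+3*8)^24*(1-8)^11 + y13*(0-1)*(1+3*8)^22*(1-8)^13 + y15*(0-1)*(1+3*8)^20*(1-8)^15 + y17*(0-1)*(1+3*8)^18*(1-8)^17 + y19*(0-1)*(1+3*8)^16*(1-8)^19 + y21*(0-1)*(1+3*8)^14*(1-8)^21 + y23*(0-1)*(1+3*8)^12*(1-8)^23 + y25*(0-1)*(1+3*8)^10*(1-8)^25 + y27*(0-1)*(1+3*8)^8*(1-8)^27 + y29*(0-1)*(1+3*8)^6*(1-8)^29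 + y31*(0-1)*(1+3*8)^4*(1-8)^31 + y33*(0-1)*(1+3*8)^2*(1-8)^33 + y35*(0-1)*(1+3*8)^0*(1-8)^35)) + (43126827298447036662421191273534047332944520071922153850993523219624044628123653996086709773164220823333400821175473553571332543790484305424640)*((4^18*(1*(1 + x12*9^12 + x14*9^14 + x16*9^16 + x18*9^18 + x20*9^20 + x22*9^22 + x24*9^24 + x26*9^26 + x28*9^28 + x30*9^30 + x32*9^32 + x34*9^34) + 0*(y11*9^11 + y13*9^13 + y15*9^15 + y17*9^17 + y19*9^19 + y21*9^21 + y23*9^23 + y25*9^25 + y27*9^27 + y29*9^29 + y31*9^31 + y33*9^33 + y35*9^35))) - ((1+3*0)*(1+3*9)^35 + x12*(1+3*0)*(1+3*9)^23*(1-9)^12 + x14*(1+3*0)*(1+3*9)^21*(1-9)^14 + x16*(1+3*0)*(1+3*9)^19*(1-9)^16 + x18*(1+3*0)*(1+3*9)^17*(1-9)^18 + x20*(1+3*0)*(1+3*9)^15*(1-9)^20 + x22*(1+3*0)*(1+3*9)^13*(1-9)^22 + x24*(1+3*0)*(1+3*9)^11*(1-9)^24 + x26*(1+3*0)*(1+3*9)^9*(1-9)^26 + x28*(1+3*0)*(1+3*9)^7*(1-9)^28 + x30*(1+3*0)*(1+3*9)^5*(1-9)^30 + x32*(1+3*0)*(1+3*9)^3*(1-9)^32 + x34*(1+3*0)*(1+3*9)^1*(1-9)^34 + y11*(1-0)*(1+3*9)^24*(1-9)^11 + y13*(1-0)*(1+3*9)^22*(1-9)^13 + y15*(1-0)*(1+3*9)^20*(1-9)^15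 + y17*(1-0)*(1+3*9)^18*(1-9)^17 + y19*(1-0)*(1+3*9)^16*(1-9)^19 + y21*(1-0)*(1+3*9)^14*(1-9)^21 + y23*(1-0)*(1+3*9)^12*(1-9)^23 + y25*(1-0)*(1+3*9)^10*(1-9)^25 + y27*(1-0)*(1+3*9)^8*(1-9)^27 + y29*(1-0)*(1+3*9)^6*(1-9)^29 + y31*(1-0)*(1+3*9)^4*(1-9)^31 + y33*(1-0)*(1+3*9)^2*(1-9)^33 + y35*(1-0)*(1+3*9)^0*(1-9)^35)) + (-4209111917461833822497907159537832952148892662546463390070510972088782213029155295918678075975585070973806786598501772793300725722680261473200)*((4^18*(0*(1 + x12*9^12 + x14*9^14 + x16*9^16 + x18*9^18 + x20*9^20 + x22*9^22 + x24*9^24 + x26*9^26 + x28*9^28 + x30*9^30 + x32*9^32 + x34*9^34) + 1*(y11*9^11 + y13*9^13 + y15*9^15 + y17*9^17 + y19*9^19 + y21*9^21 + y23*9^23 + y25*9^25 + y27*9^27 + y29*9^29 + y31*9^31 + y33*9^33 + y35*9^35))) - ((0+3*1)*(1+3*9)^35 + x12*(0+3*1)*(1+3*9)^23*(1-9)^12 + x14*(0+3*1)*(1+3*9)^21*(1-9)^14 + x16*(0+3*1)*(1+3*9)^19*(1-9)^16 + x18*(0+3*1)*(1+3*9)^17*(1-9)^18 + x20*(0+3*1)*(1+3*9)^15*(1-9)^20 + x22*(0+3*1)*(1+3*9)^13*(1-9)^22 + x24*(0+3*1)*(1+3*9)^11*(1-9)^24 + x26*(0+3*1)*(1+3*9)^9*(1-9)^26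 + x28*(0+3*1)*(1+3*9)^7*(1-9)^28 + x30*(0+3*1)*(1+3*9)^5*(1-9)^30 + x32*(0+3*1)*(1+3*9)^3*(1-9)^32 + x34*(0+3*1)*(1+3*9)^1*(1-9)^34 + y11*(0-1)*(1+3*9)^24*(1-9)^11 + y13*(0-1)*(1+3*9)^22*(1-9)^13 + y15*(0-1)*(1+3*9)^20*(1-9)^15 + y17*(0-1)*(1+3*9)^18*(1-9)^17 + y19*(0-1)*(1+3*9)^16*(1-9)^19 + y21*(0-1)*(1+3*9)^14*(1-9)^21 + y23*(0-1)*(1+3*9)^12*(1-9)^23 + y25*(0-1)*(1+3*9)^10*(1-9)^25 + y27*(0-1)*(1+3*9)^8*(1-9)^27 + y29*(0-1)*(1+3*9)^6*(1-9)^29 + y31*(0-1)*(1+3*9)^4*(1-9)^31 + y33*(0-1)*(1+3*9)^2*(1-9)^33 + y35*(0-1)*(1+3*9)^0*(1-9)^35)) + (-1057537360297657394324705459461033563858394455523781985538107287736188016948817705993341382007889382914225166624727869676461032565306759839744)*((4^18*(1*(1 + x12*10^12 + x14*10^14 + x16*10^16 + x18*10^18 + x20*10^20 + x22*10^22 + x24*10^24 + x26*10^26 + x28*10^28 + x30*10^30 + x32*10^32 + x34*10^34) + 0*(y11*10^11 + y13*10^13 + y15*10^15 + y17*10^17 + y19*10^19 + y21*10^21 + y23*10^23 + y25*10^25 + y27*10^27 + y29*10^29 + y31*10^31 + y33*10^33 + y35*10^35))) - ((1+3*0)*(1+3*10)^35 + x12*(1+3*0)*(1+3*10)^23*(1-10)^12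 + x14*(1+3*0)*(1+3*10)^21*(1-10)^14 + x16*(1+3*0)*(1+3*10)^19*(1-10)^16 + x18*(1+3*0)*(1+3*10)^17*(1-10)^18 + x20*(1+3*0)*(1+3*10)^15*(1-10)^20 + x22*(1+3*0)*(1+3*10)^13*(1-10)^22 + x24*(1+3*0)*(1+3*10)^11*(1-10)^24 + x26*(1+3*0)*(1+3*10)^9*(1-10)^26 + x28*(1+3*0)*(1+3*10)^7*(1-10)^28 + x30*(1+3*0)*(1+3*10)^5*(1-10)^30 + x32*(1+3*0)*(1+3*10)^3*(1-10)^32 + x34*(1+3*0)*(1+3*10)^1*(1-10)^34 + y11*(1-0)*(1+3*10)^24*(1-10)^11 + y13*(1-0)*(1+3*10)^22*(1-10)^13 + y15*(1-0)*(1+3*10)^20*(1-10)^15 + y17*(1-0)*(1+3*10)^18*(1-10)^17 + y19*(1-0)*(1+3*10)^16*(1-10)^19 + y21*(1-0)*(1+3*10)^14*(1-10)^21 + y23*(1-0)*(1+3*10)^12*(1-10)^23 + y25*(1-0)*(1+3*10)^10*(1-10)^25 + y27*(1-0)*(1+3*10)^8*(1-10)^27 + y29*(1-0)*(1+3*10)^6*(1-10)^29 + y31*(1-0)*(1+3*10)^4*(1-10)^31 + y33*(1-0)*(1+3*10)^2*(1-10)^33 + y35*(1-0)*(1+3*10)^0*(1-10)^35)) + (111701019761410728893106905702168215679343371857916292322556872067266980088196423956359635956572782136873253471237030626071099858852014718976)*((4^18*(0*(1 + x12*10^12 + x14*10^14 + x16*10^16 + x18*10^18 + x20*10^20 + x22*10^22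 + x24*10^24 + x26*10^26 + x28*10^28 + x30*10^30 + x32*10^32 + x34*10^34) + 1*(y11*10^11 + y13*10^13 + y15*10^15 + y17*10^17 + y19*10^19 + y21*10^21 + y23*10^23 + y25*10^25 + y27*10^27 + y29*10^29 + y31*10^31 + y33*10^33 + y35*10^35))) - ((0+3*1)*(1+3*10)^35 + x12*(0+3*1)*(1+3*10)^23*(1-10)^12 + x14*(0+3*1)*(1+3*10)^21*(1-10)^14 + x16*(0+3*1)*(1+3*10)^19*(1-10)^16 + x18*(0+3*1)*(1+3*10)^17*(1-10)^18 + x20*(0+3*1)*(1+3*10)^15*(1-10)^20 + x22*(0+3*1)*(1+3*10)^13*(1-10)^22 + x24*(0+3*1)*(1+3*10)^11*(1-10)^24 + x26*(0+3*1)*(1+3*10)^9*(1-10)^26 + x28*(0+3*1)*(1+3*10)^7*(1-10)^28 + x30*(0+3*1)*(1+3*10)^5*(1-10)^30 + x32*(0+3*1)*(1+3*10)^3*(1-10)^32 + x34*(0+3*1)*(1+3*10)^1*(1-10)^34 + y11*(0-1)*(1+3*10)^24*(1-10)^11 + y13*(0-1)*(1+3*10)^22*(1-10)^13 + y15*(0-1)*(1+3*10)^20*(1-10)^15 + y17*(0-1)*(1+3*10)^18*(1-10)^17 + y19*(0-1)*(1+3*10)^16*(1-10)^19 + y21*(0-1)*(1+3*10)^14*(1-10)^21 + y23*(0-1)*(1+3*10)^12*(1-10)^23 + y25*(0-1)*(1+3*10)^10*(1-10)^25 + y27*(0-1)*(1+3*10)^8*(1-10)^27 + y29*(0-1)*(1+3*10)^6*(1-10)^29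 + y31*(0-1)*(1+3*10)^4*(1-10)^31 + y33*(0-1)*(1+3*10)^2*(1-10)^33 + y35*(0-1)*(1+3*10)^0*(1-10)^35)) + (19916688499624762287830965030118614983470639780543077218261506622196062570543751036793830008535185911063276298188124725134238236045781190144)*((4^18*(1*(1 + x12*11^12 + x14*11^14 + x16*11^16 + x18*11^18 + x20*11^20 + x22*11^22 + x24*11^24 + x26*11^26 + x28*11^28 + x30*11^30 + x32*11^32 + x34*11^34) + 0*(y11*11^11 + y13*11^13 + y15*11^15 + y17*11^17 + y19*11^19 + y21*11^21 + y23*11^23 + y25*11^25 + y27*11^27 + y29*11^29 + y31*11^31 + y33*11^33 + y35*11^35))) - ((1+3*0)*(1+3*11)^35 + x12*(1+3*0)*(1+3*11)^23*(1-11)^12 + x14*(1+3*0)*(1+3*11)^21*(1-11)^14 + x16*(1+3*0)*(1+3*11)^19*(1-11)^16 + x18*(1+3*0)*(1+3*11)^17*(1-11)^18 + x20*(1+3*0)*(1+3*11)^15*(1-11)^20 + x22*(1+3*0)*(1+3*11)^13*(1-11)^22 + x24*(1+3*0)*(1+3*11)^11*(1-11)^24 + x26*(1+3*0)*(1+3*11)^9*(1-11)^26 + x28*(1+3*0)*(1+3*11)^7*(1-11)^28 + x30*(1+3*0)*(1+3*11)^5*(1-11)^30 + x32*(1+3*0)*(1+3*11)^3*(1-11)^32 + x34*(1+3*0)*(1+3*11)^1*(1-11)^34 + y11*(1-0)*(1+3*11)^24*(1-11)^11 + y13*(1-0)*(1+3*11)^22*(1-11)^13 + y15*(1-0)*(1+3*11)^20*(1-11)^15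 + y17*(1-0)*(1+3*11)^18*(1-11)^17 + y19*(1-0)*(1+3*11)^16*(1-11)^19 + y21*(1-0)*(1+3*11)^14*(1-11)^21 + y23*(1-0)*(1+3*11)^12*(1-11)^23 + y25*(1-0)*(1+3*11)^10*(1-11)^25 + y27*(1-0)*(1+3*11)^8*(1-11)^27 + y29*(1-0)*(1+3*11)^6*(1-11)^29 + y31*(1-0)*(1+3*11)^4*(1-11)^31 + y33*(1-0)*(1+3*11)^2*(1-11)^33 + y35*(1-0)*(1+3*11)^0*(1-11)^35)) + (-2235491342445983274527363532558339156980048077712594910292643449053517717605796362732408852185046399407705448530605673151867304425870835200)*((4^18*(0*(1 + x12*11^12 + x14*11^14 + x16*11^16 + x18*11^18 + x20*11^20 + x22*11^22 + x24*11^24 + x26*11^26 + x28*11^28 + x30*11^30 + x32*11^32 + x34*11^34) + 1*(y11*11^11 + y13*11^13 + y15*11^15 + y17*11^17 + y19*11^19 + y21*11^21 + y23*11^23 + y25*11^25 + y27*11^27 + y29*11^29 + y31*11^31 + y33*11^33 + y35*11^35))) - ((0+3*1)*(1+3*11)^35 + x12*(0+3*1)*(1+3*11)^23*(1-11)^12 + x14*(0+3*1)*(1+3*11)^21*(1-11)^14 + x16*(0+3*1)*(1+3*11)^19*(1-11)^16 + x18*(0+3*1)*(1+3*11)^17*(1-11)^18 + x20*(0+3*1)*(1+3*11)^15*(1-11)^20 + x22*(0+3*1)*(1+3*11)^13*(1-11)^22 + x24*(0+3*1)*(1+3*11)^11*(1-11)^24 + x26*(0+3*1)*(1+3*11)^9*(1-11)^26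 + x28*(0+3*1)*(1+3*11)^7*(1-11)^28 + x30*(0+3*1)*(1+3*11)^5*(1-11)^30 + x32*(0+3*1)*(1+3*11)^3*(1-11)^32 + x34*(0+3*1)*(1+3*11)^1*(1-11)^34 + y11*(0-1)*(1+3*11)^24*(1-11)^11 + y13*(0-1)*(1+3*11)^22*(1-11)^13 + y15*(0-1)*(1+3*11)^20*(1-11)^15 + y17*(0-1)*(1+3*11)^18*(1-11)^17 + y19*(0-1)*(1+3*11)^16*(1-11)^19 + y21*(0-1)*(1+3*11)^14*(1-11)^21 + y23*(0-1)*(1+3*11)^12*(1-11)^23 + y25*(0-1)*(1+3*11)^10*(1-11)^25 + y27*(0-1)*(1+3*11)^8*(1-11)^27 + y29*(0-1)*(1+3*11)^6*(1-11)^29 + y31*(0-1)*(1+3*11)^4*(1-11)^31 + y33*(0-1)*(1+3*11)^2*(1-11)^33 + y35*(0-1)*(1+3*11)^0*(1-11)^35)) + (-209116950266995802138160023638375145340435589768051798157994589673170252676937943310130513427340740439702391419412327978953516449057996800)*((4^18*(1*(1 + x12*12^12 + x14*12^14 + x16*12^16 + x18*12^18 + x20*12^20 + x22*12^22 + x24*12^24 + x26*12^26 + x28*12^28 + x30*12^30 + x32*12^32 + x34*12^34) + 0*(y11*12^11 + y13*12^13 + y15*12^15 + y17*12^17 + y19*12^19 + y21*12^21 + y23*12^23 + y25*12^25 + y27*12^27 + y29*12^29 + y31*12^31 + y33*12^33 + y35*12^35))) - ((1+3*0)*(1+3*12)^35 + x12*(1+3*0)*(1+3*12)^23*(1-12)^12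 + x14*(1+3*0)*(1+3*12)^21*(1-12)^14 + x16*(1+3*0)*(1+3*12)^19*(1-12)^16 + x18*(1+3*0)*(1+3*12)^17*(1-12)^18 + x20*(1+3*0)*(1+3*12)^15*(1-12)^20 + x22*(1+3*0)*(1+3*12)^13*(1-12)^22 + x24*(1+3*0)*(1+3*12)^11*(1-12)^24 + x26*(1+3*0)*(1+3*12)^9*(1-12)^26 + x28*(1+3*0)*(1+3*12)^7*(1-12)^28 + x30*(1+3*0)*(1+3*12)^5*(1-12)^30 + x32*(1+3*0)*(1+3*12)^3*(1-12)^32 + x34*(1+3*0)*(1+3*12)^1*(1-12)^34 + y11*(1-0)*(1+3*12)^24*(1-12)^11 + y13*(1-0)*(1+3*12)^22*(1-12)^13 + y15*(1-0)*(1+3*12)^20*(1-12)^15 + y17*(1-0)*(1+3*12)^18*(1-12)^17 + y19*(1-0)*(1+3*12)^16*(1-12)^19 + y21*(1-0)*(1+3*12)^14*(1-12)^21 + y23*(1-0)*(1+3*12)^12*(1-12)^23 + y25*(1-0)*(1+3*12)^10*(1-12)^25 + y27*(1-0)*(1+3*12)^8*(1-12)^27 + y29*(1-0)*(1+3*12)^6*(1-12)^29 + y31*(1-0)*(1+3*12)^4*(1-12)^31 + y33*(1-0)*(1+3*12)^2*(1-12)^33 + y35*(1-0)*(1+3*12)^0*(1-12)^35)) + (24632800205876639863556461102864541463702304082999076732374942887984143807131423446647095815508498879590644153824970975749393032308326400)*((4^18*(0*(1 + x12*12^12 + x14*12^14 + x16*12^16 + x18*12^18 + x20*12^20 + x22*12^22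 + x24*12^24 + x26*12^26 + x28*12^28 + x30*12^30 + x32*12^32 + x34*12^34) + 1*(y11*12^11 + y13*12^13 + y15*12^15 + y17*12^17 + y19*12^19 + y21*12^21 + y23*12^23 + y25*12^25 + y27*12^27 + y29*12^29 + y31*12^31 + y33*12^33 + y35*12^35))) - ((0+3*1)*(1+3*12)^35 + x12*(0+3*1)*(1+3*12)^23*(1-12)^12 + x14*(0+3*1)*(1+3*12)^21*(1-12)^14 + x16*(0+3*1)*(1+3*12)^19*(1-12)^16 + x18*(0+3*1)*(1+3*12)^17*(1-12)^18 + x20*(0+3*1)*(1+3*12)^15*(1-12)^20 + x22*(0+3*1)*(1+3*12)^13*(1-12)^22 + x24*(0+3*1)*(1+3*12)^11*(1-12)^24 + x26*(0+3*1)*(1+3*12)^9*(1-12)^26 + x28*(0+3*1)*(1+3*12)^7*(1-12)^28 + x30*(0+3*1)*(1+3*12)^5*(1-12)^30 + x32*(0+3*1)*(1+3*12)^3*(1-12)^32 + x34*(0+3*1)*(1+3*12)^1*(1-12)^34 + y11*(0-1)*(1+3*12)^24*(1-12)^11 + y13*(0-1)*(1+3*12)^22*(1-12)^13 + y15*(0-1)*(1+3*12)^20*(1-12)^15 + y17*(0-1)*(1+3*12)^18*(1-12)^17 + y19*(0-1)*(1+3*12)^16*(1-12)^19 + y21*(0-1)*(1+3*12)^14*(1-12)^21 + y23*(0-1)*(1+3*12)^12*(1-12)^23 + y25*(0-1)*(1+3*12)^10*(1-12)^25 + y27*(0-1)*(1+3*12)^8*(1-12)^27 + y29*(0-1)*(1+3*12)^6*(1-12)^29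 + y31*(0-1)*(1+3*12)^4*(1-12)^31 + y33*(0-1)*(1+3*12)^2*(1-12)^33 + y35*(0-1)*(1+3*12)^0*(1-12)^35))) by ring.
rewrite h0 h1 h4 h5 h6 h7 h8 h9 h10 h11 h12 h13 h14 h15 h16 h17 h18 h19 h20 h21 h22 h23 h24 h25 in ET1.
rewrite !Z.sub_diag in ET1.
assert (ET2 : 21156072157242783699577271170767181407818625176043222440303546340890676640665565370036111747987586086634360583209530295488348160000000*(12*(x12+y11)+x14+y13 - 771120) = (-74081190735605219863891851281164925716643773866654247732486697072915465483690502051849065021307426916219241594949422744172924764160)*((4^18*(1*(1 + x12*0^12 + x14*0^14 + x16*0^16 + x18*0^18 + x20*0^20 + x22*0^22 + x24*0^24 + x26*0^26 + x28*0^28 + x30*0^30 + x32*0^32 + x34*0^34) + 0*(y11*0^11 + y13*0^13 + y15*0^15 + y17*0^17 + y19*0^19 + y21*0^21 + y23*0^23 + y25*0^25 + y27*0^27 + y29*0^29 + y31*0^31 + y33*0^33 + y35*0^35))) - ((1+3*0)*(1+3*0)^35 + x12*(1+3*0)*(1+3*0)^23*(1-0)^12 + x14*(1+3*0)*(1+3*0)^21*(1-0)^14 + x16*(1+3*0)*(1+3*0)^19*(1-0)^16 + x18*(1+3*0)*(1+3*0)^17*(1-0)^18 + x20*(1+3*0)*(1+3*0)^15*(1-0)^20 + x22*(1+3*0)*(1+3*0)^13*(1-0)^22 + x24*(1+3*0)*(1+3*0)^11*(1-0)^24 + x26*(1+3*0)*(1+3*0)^9*(1-0)^26 + x28*(1+3*0)*(1+3*0)^7*(1-0)^28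 + x30*(1+3*0)*(1+3*0)^5*(1-0)^30 + x32*(1+3*0)*(1+3*0)^3*(1-0)^32 + x34*(1+3*0)*(1+3*0)^1*(1-0)^34 + y11*(1-0)*(1+3*0)^24*(1-0)^11 + y13*(1-0)*(1+3*0)^22*(1-0)^13 + y15*(1-0)*(1+3*0)^20*(1-0)^15 + y17*(1-0)*(1+3*0)^18*(1-0)^17 + y19*(1-0)*(1+3*0)^16*(1-0)^19 + y21*(1-0)*(1+3*0)^14*(1-0)^21 + y23*(1-0)*(1+3*0)^12*(1-0)^23 + y25*(1-0)*(1+3*0)^10*(1-0)^25 + y27*(1-0)*(1+3*0)^8*(1-0)^27 + y29*(1-0)*(1+3*0)^6*(1-0)^29 + y31*(1-0)*(1+3*0)^4*(1-0)^31 + y33*(1-0)*(1+3*0)^2*(1-0)^33 + y35*(1-0)*(1+3*0)^0*(1-0)^35)) + (-3131994438016071799774988898532692295851726201191016434958309225441514834468408327221167810999283561279950684160)*((4^18*(1*(1 + x12*2^12 + x14*2^14 + x16*2^16 + x18*2^18 + x20*2^20 + x22*2^22 + x24*2^24 + x26*2^26 + x28*2^28 + x30*2^30 + x32*2^32 + x34*2^34) + 0*(y11*2^11 + y13*2^13 + y15*2^15 + y17*2^17 + y19*2^19 + y21*2^21 + y23*2^23 + y25*2^25 + y27*2^27 + y29*2^29 + y31*2^31 + y33*2^33 + y35*2^35))) - ((1+3*0)*(1+3*2)^35 + x12*(1+3*0)*(1+3*2)^23*(1-2)^12 + x14*(1+3*0)*(1+3*2)^21*(1-2)^14 + x16*(1+3*0)*(1+3*2)^19*(1-2)^16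 + x18*(1+3*0)*(1+3*2)^17*(1-2)^18 + x20*(1+3*0)*(1+3*2)^15*(1-2)^20 + x22*(1+3*0)*(1+3*2)^13*(1-2)^22 + x24*(1+3*0)*(1+3*2)^11*(1-2)^24 + x26*(1+3*0)*(1+3*2)^9*(1-2)^26 + x28*(1+3*0)*(1+3*2)^7*(1-2)^28 + x30*(1+3*0)*(1+3*2)^5*(1-2)^30 + x32*(1+3*0)*(1+3*2)^3*(1-2)^32 + x34*(1+3*0)*(1+3*2)^1*(1-2)^34 + y11*(1-0)*(1+3*2)^24*(1-2)^11 + y13*(1-0)*(1+3*2)^22*(1-2)^13 + y15*(1-0)*(1+3*2)^20*(1-2)^15 + y17*(1-0)*(1+3*2)^18*(1-2)^17 + y19*(1-0)*(1+3*2)^16*(1-2)^19 + y21*(1-0)*(1+3*2)^14*(1-2)^21 + y23*(1-0)*(1+3*2)^12*(1-2)^23 + y25*(1-0)*(1+3*2)^10*(1-2)^25 + y27*(1-0)*(1+3*2)^8*(1-2)^27 + y29*(1-0)*(1+3*2)^6*(1-2)^29 + y31*(1-0)*(1+3*2)^4*(1-2)^31 + y33*(1-0)*(1+3*2)^2*(1-2)^33 + y35*(1-0)*(1+3*2)^0*(1-2)^35)) + (-6263988876032143599549977797065384591703452402382032869916618450883029668936816654442335621998567122559901368320)*((4^18*(0*(1 + x12*2^12 + x14*2^14 + x16*2^16 + x18*2^18 + x20*2^20 + x22*2^22 + x24*2^24 + x26*2^26 + x28*2^28 + x30*2^30 + x32*2^32 + x34*2^34) + 1*(y11*2^11 + y13*2^13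 + y15*2^15 + y17*2^17 + y19*2^19 + y21*2^21 + y23*2^23 + y25*2^25 + y27*2^27 + y29*2^29 + y31*2^31 + y33*2^33 + y35*2^35))) - ((0+3*1)*(1+3*2)^35 + x12*(0+3*1)*(1+3*2)^23*(1-2)^12 + x14*(0+3*1)*(1+3*2)^21*(1-2)^14 + x16*(0+3*1)*(1+3*2)^19*(1-2)^16 + x18*(0+3*1)*(1+3*2)^17*(1-2)^18 + x20*(0+3*1)*(1+3*2)^15*(1-2)^20 + x22*(0+3*1)*(1+3*2)^13*(1-2)^22 + x24*(0+3*1)*(1+3*2)^11*(1-2)^24 + x26*(0+3*1)*(1+3*2)^9*(1-2)^26 + x28*(0+3*1)*(1+3*2)^7*(1-2)^28 + x30*(0+3*1)*(1+3*2)^5*(1-2)^30 + x32*(0+3*1)*(1+3*2)^3*(1-2)^32 + x34*(0+3*1)*(1+3*2)^1*(1-2)^34 + y11*(0-1)*(1+3*2)^24*(1-2)^11 + y13*(0-1)*(1+3*2)^22*(1-2)^13 + y15*(0-1)*(1+3*2)^20*(1-2)^15 + y17*(0-1)*(1+3*2)^18*(1-2)^17 + y19*(0-1)*(1+3*2)^16*(1-2)^19 + y21*(0-1)*(1+3*2)^14*(1-2)^21 + y23*(0-1)*(1+3*2)^12*(1-2)^23 + y25*(0-1)*(1+3*2)^10*(1-2)^25 + y27*(0-1)*(1+3*2)^8*(1-2)^27 + y29*(0-1)*(1+3*2)^6*(1-2)^29 + y31*(0-1)*(1+3*2)^4*(1-2)^31 + y33*(0-1)*(1+3*2)^2*(1-2)^33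 + y35*(0-1)*(1+3*2)^0*(1-2)^35)) + (-25649677945279056447898411445955829731242733008339922569233159721405567694801307245078838055004014687548800000)*((4^18*(1*(1 + x12*3^12 + x14*3^14 + x16*3^16 + x18*3^18 + x20*3^20 + x22*3^22 + x24*3^24 + x26*3^26 + x28*3^28 + x30*3^30 + x32*3^32 + x34*3^34) + 0*(y11*3^11 + y13*3^13 + y15*3^15 + y17*3^17 + y19*3^19 + y21*3^21 + y23*3^23 + y25*3^25 + y27*3^27 + y29*3^29 + y31*3^31 + y33*3^33 + y35*3^35))) - ((1+3*0)*(1+3*3)^35 + x12*(1+3*0)*(1+3*3)^23*(1-3)^12 + x14*(1+3*0)*(1+3*3)^21*(1-3)^14 + x16*(1+3*0)*(1+3*3)^19*(1-3)^16 + x18*(1+3*0)*(1+3*3)^17*(1-3)^18 + x20*(1+3*0)*(1+3*3)^15*(1-3)^20 + x22*(1+3*0)*(1+3*3)^13*(1-3)^22 + x24*(1+3*0)*(1+3*3)^11*(1-3)^24 + x26*(1+3*0)*(1+3*3)^9*(1-3)^26 + x28*(1+3*0)*(1+3*3)^7*(1-3)^28 + x30*(1+3*0)*(1+3*3)^5*(1-3)^30 + x32*(1+3*0)*(1+3*3)^3*(1-3)^32 + x34*(1+3*0)*(1+3*3)^1*(1-3)^34 + y11*(1-0)*(1+3*3)^24*(1-3)^11 + y13*(1-0)*(1+3*3)^22*(1-3)^13 + y15*(1-0)*(1+3*3)^20*(1-3)^15 + y17*(1-0)*(1+3*3)^18*(1-3)^17 + y19*(1-0)*(1+3*3)^16*(1-3)^19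 + y21*(1-0)*(1+3*3)^14*(1-3)^21 + y23*(1-0)*(1+3*3)^12*(1-3)^23 + y25*(1-0)*(1+3*3)^10*(1-3)^25 + y27*(1-0)*(1+3*3)^8*(1-3)^27 + y29*(1-0)*(1+3*3)^6*(1-3)^29 + y31*(1-0)*(1+3*3)^4*(1-3)^31 + y33*(1-0)*(1+3*3)^2*(1-3)^33 + y35*(1-0)*(1+3*3)^0*(1-3)^35)) + (-76949033835837169343695234337867489193728199025019767707699479164216703084403921735236514165012044062646400000)*((4^18*(0*(1 + x12*3^12 + x14*3^14 + x16*3^16 + x18*3^18 + x20*3^20 + x22*3^22 + x24*3^24 + x26*3^26 + x28*3^28 + x30*3^30 + x32*3^32 + x34*3^34) + 1*(y11*3^11 + y13*3^13 + y15*3^15 + y17*3^17 + y19*3^19 + y21*3^21 + y23*3^23 + y25*3^25 + y27*3^27 + y29*3^29 + y31*3^31 + y33*3^33 + y35*3^35))) - ((0+3*1)*(1+3*3)^35 + x12*(0+3*1)*(1+3*3)^23*(1-3)^12 + x14*(0+3*1)*(1+3*3)^21*(1-3)^14 + x16*(0+3*1)*(1+3*3)^19*(1-3)^16 + x18*(0+3*1)*(1+3*3)^17*(1-3)^18 + x20*(0+3*1)*(1+3*3)^15*(1-3)^20 + x22*(0+3*1)*(1+3*3)^13*(1-3)^22 + x24*(0+3*1)*(1+3*3)^11*(1-3)^24 + x26*(0+3*1)*(1+3*3)^9*(1-3)^26 + x28*(0+3*1)*(1+3*3)^7*(1-3)^28 + x30*(0+3*1)*(1+3*3)^5*(1-3)^30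 + x32*(0+3*1)*(1+3*3)^3*(1-3)^32 + x34*(0+3*1)*(1+3*3)^1*(1-3)^34 + y11*(0-1)*(1+3*3)^24*(1-3)^11 + y13*(0-1)*(1+3*3)^22*(1-3)^13 + y15*(0-1)*(1+3*3)^20*(1-3)^15 + y17*(0-1)*(1+3*3)^18*(1-3)^17 + y19*(0-1)*(1+3*3)^16*(1-3)^19 + y21*(0-1)*(1+3*3)^14*(1-3)^21 + y23*(0-1)*(1+3*3)^12*(1-3)^23 + y25*(0-1)*(1+3*3)^10*(1-3)^25 + y27*(0-1)*(1+3*3)^8*(1-3)^27 + y29*(0-1)*(1+3*3)^6*(1-3)^29 + y31*(0-1)*(1+3*3)^4*(1-3)^31 + y33*(0-1)*(1+3*3)^2*(1-3)^33 + y35*(0-1)*(1+3*3)^0*(1-3)^35)) + (80954674157252918189006932672583342618026572038180614974704412949697869149526644595526087701822585721323520)*((4^18*(1*(1 + x12*4^12 + x14*4^14 + x16*4^16 + x18*4^18 + x20*4^20 + x22*4^22 + x24*4^24 + x26*4^26 + x28*4^28 + x30*4^30 + x32*4^32 + x34*4^34) + 0*(y11*4^11 + y13*4^13 + y15*4^15 + y17*4^17 + y19*4^19 + y21*4^21 + y23*4^23 + y25*4^25 + y27*4^27 + y29*4^29 + y31*4^31 + y33*4^33 + y35*4^35))) - ((1+3*0)*(1+3*4)^35 + x12*(1+3*0)*(1+3*4)^23*(1-4)^12 + x14*(1+3*0)*(1+3*4)^21*(1-4)^14 + x16*(1+3*0)*(1+3*4)^19*(1-4)^16 + x18*(1+3*0)*(1+3*4)^17*(1-4)^18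 + x20*(1+3*0)*(1+3*4)^15*(1-4)^20 + x22*(1+3*0)*(1+3*4)^13*(1-4)^22 + x24*(1+3*0)*(1+3*4)^11*(1-4)^24 + x26*(1+3*0)*(1+3*4)^9*(1-4)^26 + x28*(1+3*0)*(1+3*4)^7*(1-4)^28 + x30*(1+3*0)*(1+3*4)^5*(1-4)^30 + x32*(1+3*0)*(1+3*4)^3*(1-4)^32 + x34*(1+3*0)*(1+3*4)^1*(1-4)^34 + y11*(1-0)*(1+3*4)^24*(1-4)^11 + y13*(1-0)*(1+3*4)^22*(1-4)^13 + y15*(1-0)*(1+3*4)^20*(1-4)^15 + y17*(1-0)*(1+3*4)^18*(1-4)^17 + y19*(1-0)*(1+3*4)^16*(1-4)^19 + y21*(1-0)*(1+3*4)^14*(1-4)^21 + y23*(1-0)*(1+3*4)^12*(1-4)^23 + y25*(1-0)*(1+3*4)^10*(1-4)^25 + y27*(1-0)*(1+3*4)^8*(1-4)^27 + y29*(1-0)*(1+3*4)^6*(1-4)^29 + y31*(1-0)*(1+3*4)^4*(1-4)^31 + y33*(1-0)*(1+3*4)^2*(1-4)^33 + y35*(1-0)*(1+3*4)^0*(1-4)^35)) + (323818696629011672756027730690333370472106288152722459898817651798791476598106578382104350807290342885294080)*((4^18*(0*(1 + x12*4^12 + x14*4^14 + x16*4^16 + x18*4^18 + x20*4^20 + x22*4^22 + x24*4^24 + x26*4^26 + x28*4^28 + x30*4^30 + x32*4^32 + x34*4^34) + 1*(y11*4^11 + y13*4^13 + y15*4^15 + y17*4^17 + y19*4^19 + y21*4^21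 + y23*4^23 + y25*4^25 + y27*4^27 + y29*4^29 + y31*4^31 + y33*4^33 + y35*4^35))) - ((0+3*1)*(1+3*4)^35 + x12*(0+3*1)*(1+3*4)^23*(1-4)^12 + x14*(0+3*1)*(1+3*4)^21*(1-4)^14 + x16*(0+3*1)*(1+3*4)^19*(1-4)^16 + x18*(0+3*1)*(1+3*4)^17*(1-4)^18 + x20*(0+3*1)*(1+3*4)^15*(1-4)^20 + x22*(0+3*1)*(1+3*4)^13*(1-4)^22 + x24*(0+3*1)*(1+3*4)^11*(1-4)^24 + x26*(0+3*1)*(1+3*4)^9*(1-4)^26 + x28*(0+3*1)*(1+3*4)^7*(1-4)^28 + x30*(0+3*1)*(1+3*4)^5*(1-4)^30 + x32*(0+3*1)*(1+3*4)^3*(1-4)^32 + x34*(0+3*1)*(1+3*4)^1*(1-4)^34 + y11*(0-1)*(1+3*4)^24*(1-4)^11 + y13*(0-1)*(1+3*4)^22*(1-4)^13 + y15*(0-1)*(1+3*4)^20*(1-4)^15 + y17*(0-1)*(1+3*4)^18*(1-4)^17 + y19*(0-1)*(1+3*4)^16*(1-4)^19 + y21*(0-1)*(1+3*4)^14*(1-4)^21 + y23*(0-1)*(1+3*4)^12*(1-4)^23 + y25*(0-1)*(1+3*4)^10*(1-4)^25 + y27*(0-1)*(1+3*4)^8*(1-4)^27 + y29*(0-1)*(1+3*4)^6*(1-4)^29 + y31*(0-1)*(1+3*4)^4*(1-4)^31 + y33*(0-1)*(1+3*4)^2*(1-4)^33 + y35*(0-1)*(1+3*4)^0*(1-4)^35))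 + (-667524071690546379300888807822179391735134639634103300326435136588555248836494149836259107030230693871616)*((4^18*(1*(1 + x12*5^12 + x14*5^14 + x16*5^16 + x18*5^18 + x20*5^20 + x22*5^22 + x24*5^24 + x26*5^26 + x28*5^28 + x30*5^30 + x32*5^32 + x34*5^34) + 0*(y11*5^11 + y13*5^13 + y15*5^15 + y17*5^17 + y19*5^19 + y21*5^21 + y23*5^23 + y25*5^25 + y27*5^27 + y29*5^29 + y31*5^31 + y33*5^33 + y35*5^35))) - ((1+3*0)*(1+3*5)^35 + x12*(1+3*0)*(1+3*5)^23*(1-5)^12 + x14*(1+3*0)*(1+3*5)^21*(1-5)^14 + x16*(1+3*0)*(1+3*5)^19*(1-5)^16 + x18*(1+3*0)*(1+3*5)^17*(1-5)^18 + x20*(1+3*0)*(1+3*5)^15*(1-5)^20 + x22*(1+3*0)*(1+3*5)^13*(1-5)^22 + x24*(1+3*0)*(1+3*5)^11*(1-5)^24 + x26*(1+3*0)*(1+3*5)^9*(1-5)^26 + x28*(1+3*0)*(1+3*5)^7*(1-5)^28 + x30*(1+3*0)*(1+3*5)^5*(1-5)^30 + x32*(1+3*0)*(1+3*5)^3*(1-5)^32 + x34*(1+3*0)*(1+3*5)^1*(1-5)^34 + y11*(1-0)*(1+3*5)^24*(1-5)^11 + y13*(1-0)*(1+3*5)^22*(1-5)^13 + y15*(1-0)*(1+3*5)^20*(1-5)^15 + y17*(1-0)*(1+3*5)^18*(1-5)^17 + y19*(1-0)*(1+3*5)^16*(1-5)^19 + y21*(1-0)*(1+3*5)^14*(1-5)^21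 + y23*(1-0)*(1+3*5)^12*(1-5)^23 + y25*(1-0)*(1+3*5)^10*(1-5)^25 + y27*(1-0)*(1+3*5)^8*(1-5)^27 + y29*(1-0)*(1+3*5)^6*(1-5)^29 + y31*(1-0)*(1+3*5)^4*(1-5)^31 + y33*(1-0)*(1+3*5)^2*(1-5)^33 + y35*(1-0)*(1+3*5)^0*(1-5)^35)) + (-3337620358452731896504444039110896958675673198170516501632175682942776244182470749181295535151153469358080)*((4^18*(0*(1 + x12*5^12 + x14*5^14 + x16*5^16 + x18*5^18 + x20*5^20 + x22*5^22 + x24*5^24 + x26*5^26 + x28*5^28 + x30*5^30 + x32*5^32 + x34*5^34) + 1*(y11*5^11 + y13*5^13 + y15*5^15 + y17*5^17 + y19*5^19 + y21*5^21 + y23*5^23 + y25*5^25 + y27*5^27 + y29*5^29 + y31*5^31 + y33*5^33 + y35*5^35))) - ((0+3*1)*(1+3*5)^35 + x12*(0+3*1)*(1+3*5)^23*(1-5)^12 + x14*(0+3*1)*(1+3*5)^21*(1-5)^14 + x16*(0+3*1)*(1+3*5)^19*(1-5)^16 + x18*(0+3*1)*(1+3*5)^17*(1-5)^18 + x20*(0+3*1)*(1+3*5)^15*(1-5)^20 + x22*(0+3*1)*(1+3*5)^13*(1-5)^22 + x24*(0+3*1)*(1+3*5)^11*(1-5)^24 + x26*(0+3*1)*(1+3*5)^9*(1-5)^26 + x28*(0+3*1)*(1+3*5)^7*(1-5)^28 + x30*(0+3*1)*(1+3*5)^5*(1-5)^30 + x32*(0+3*1)*(1+3*5)^3*(1-5)^32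 + x34*(0+3*1)*(1+3*5)^1*(1-5)^34 + y11*(0-1)*(1+3*5)^24*(1-5)^11 + y13*(0-1)*(1+3*5)^22*(1-5)^13 + y15*(0-1)*(1+3*5)^20*(1-5)^15 + y17*(0-1)*(1+3*5)^18*(1-5)^17 + y19*(0-1)*(1+3*5)^16*(1-5)^19 + y21*(0-1)*(1+3*5)^14*(1-5)^21 + y23*(0-1)*(1+3*5)^12*(1-5)^23 + y25*(0-1)*(1+3*5)^10*(1-5)^25 + y27*(0-1)*(1+3*5)^8*(1-5)^27 + y29*(0-1)*(1+3*5)^6*(1-5)^29 + y31*(0-1)*(1+3*5)^4*(1-5)^31 + y33*(0-1)*(1+3*5)^2*(1-5)^33 + y35*(0-1)*(1+3*5)^0*(1-5)^35)) + (9867963566865238647642973097771667423967299924213979115556090336210773330025492293920145144923924987904)*((4^18*(1*(1 + x12*6^12 + x14*6^14 + x16*6^16 + x18*6^18 + x20*6^20 + x22*6^22 + x24*6^24 + x26*6^26 + x28*6^28 + x30*6^30 + x32*6^32 + x34*6^34) + 0*(y11*6^11 + y13*6^13 + y15*6^15 + y17*6^17 + y19*6^19 + y21*6^21 + y23*6^23 + y25*6^25 + y27*6^27 + y29*6^29 + y31*6^31 + y33*6^33 + y35*6^35))) - ((1+3*0)*(1+3*6)^35 + x12*(1+3*0)*(1+3*6)^23*(1-6)^12 + x14*(1+3*0)*(1+3*6)^21*(1-6)^14 + x16*(1+3*0)*(1+3*6)^19*(1-6)^16 + x18*(1+3*0)*(1+3*6)^17*(1-6)^18 + x20*(1+3*0)*(1+3*6)^15*(1-6)^20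 + x22*(1+3*0)*(1+3*6)^13*(1-6)^22 + x24*(1+3*0)*(1+3*6)^11*(1-6)^24 + x26*(1+3*0)*(1+3*6)^9*(1-6)^26 + x28*(1+3*0)*(1+3*6)^7*(1-6)^28 + x30*(1+3*0)*(1+3*6)^5*(1-6)^30 + x32*(1+3*0)*(1+3*6)^3*(1-6)^32 + x34*(1+3*0)*(1+3*6)^1*(1-6)^34 + y11*(1-0)*(1+3*6)^24*(1-6)^11 + y13*(1-0)*(1+3*6)^22*(1-6)^13 + y15*(1-0)*(1+3*6)^20*(1-6)^15 + y17*(1-0)*(1+3*6)^18*(1-6)^17 + y19*(1-0)*(1+3*6)^16*(1-6)^19 + y21*(1-0)*(1+3*6)^14*(1-6)^21 + y23*(1-0)*(1+3*6)^12*(1-6)^23 + y25*(1-0)*(1+3*6)^10*(1-6)^25 + y27*(1-0)*(1+3*6)^8*(1-6)^27 + y29*(1-0)*(1+3*6)^6*(1-6)^29 + y31*(1-0)*(1+3*6)^4*(1-6)^31 + y33*(1-0)*(1+3*6)^2*(1-6)^33 + y35*(1-0)*(1+3*6)^0*(1-6)^35)) + (59207781401191431885857838586630004543803799545283874693336542017264639980152953763520870869543549927424)*((4^18*(0*(1 + x12*6^12 + x14*6^14 + x16*6^16 + x18*6^18 + x20*6^20 + x22*6^22 + x24*6^24 + x26*6^26 + x28*6^28 + x30*6^30 + x32*6^32 + x34*6^34) + 1*(y11*6^11 + y13*6^13 + y15*6^15 + y17*6^17 + y19*6^19 + y21*6^21 + y23*6^23 + y25*6^25 + y27*6^27 + y29*6^29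 + y31*6^31 + y33*6^33 + y35*6^35))) - ((0+3*1)*(1+3*6)^35 + x12*(0+3*1)*(1+3*6)^23*(1-6)^12 + x14*(0+3*1)*(1+3*6)^21*(1-6)^14 + x16*(0+3*1)*(1+3*6)^19*(1-6)^16 + x18*(0+3*1)*(1+3*6)^17*(1-6)^18 + x20*(0+3*1)*(1+3*6)^15*(1-6)^20 + x22*(0+3*1)*(1+3*6)^13*(1-6)^22 + x24*(0+3*1)*(1+3*6)^11*(1-6)^24 + x26*(0+3*1)*(1+3*6)^9*(1-6)^26 + x28*(0+3*1)*(1+3*6)^7*(1-6)^28 + x30*(0+3*1)*(1+3*6)^5*(1-6)^30 + x32*(0+3*1)*(1+3*6)^3*(1-6)^32 + x34*(0+3*1)*(1+3*6)^1*(1-6)^34 + y11*(0-1)*(1+3*6)^24*(1-6)^11 + y13*(0-1)*(1+3*6)^22*(1-6)^13 + y15*(0-1)*(1+3*6)^20*(1-6)^15 + y17*(0-1)*(1+3*6)^18*(1-6)^17 + y19*(0-1)*(1+3*6)^16*(1-6)^19 + y21*(0-1)*(1+3*6)^14*(1-6)^21 + y23*(0-1)*(1+3*6)^12*(1-6)^23 + y25*(0-1)*(1+3*6)^10*(1-6)^25 + y27*(0-1)*(1+3*6)^8*(1-6)^27 + y29*(0-1)*(1+3*6)^6*(1-6)^29 + y31*(0-1)*(1+3*6)^4*(1-6)^31 + y33*(0-1)*(1+3*6)^2*(1-6)^33 + y35*(0-1)*(1+3*6)^0*(1-6)^35)) + (-203889504385124331186629173431442583432490571212279077166783548468955561235065309541904819846944680735)*((4^18*(1*(1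 + x12*7^12 + x14*7^14 + x16*7^16 + x18*7^18 + x20*7^20 + x22*7^22 + x24*7^24 + x26*7^26 + x28*7^28 + x30*7^30 + x32*7^32 + x34*7^34) + 0*(y11*7^11 + y13*7^13 + y15*7^15 + y17*7^17 + y19*7^19 + y21*7^21 + y23*7^23 + y25*7^25 + y27*7^27 + y29*7^29 + y31*7^31 + y33*7^33 + y35*7^35))) - ((1+3*0)*(1+3*7)^35 + x12*(1+3*0)*(1+3*7)^23*(1-7)^12 + x14*(1+3*0)*(1+3*7)^21*(1-7)^14 + x16*(1+3*0)*(1+3*7)^19*(1-7)^16 + x18*(1+3*0)*(1+3*7)^17*(1-7)^18 + x20*(1+3*0)*(1+3*7)^15*(1-7)^20 + x22*(1+3*0)*(1+3*7)^13*(1-7)^22 + x24*(1+3*0)*(1+3*7)^11*(1-7)^24 + x26*(1+3*0)*(1+3*7)^9*(1-7)^26 + x28*(1+3*0)*(1+3*7)^7*(1-7)^28 + x30*(1+3*0)*(1+3*7)^5*(1-7)^30 + x32*(1+3*0)*(1+3*7)^3*(1-7)^32 + x34*(1+3*0)*(1+3*7)^1*(1-7)^34 + y11*(1-0)*(1+3*7)^24*(1-7)^11 + y13*(1-0)*(1+3*7)^22*(1-7)^13 + y15*(1-0)*(1+3*7)^20*(1-7)^15 + y17*(1-0)*(1+3*7)^18*(1-7)^17 + y19*(1-0)*(1+3*7)^16*(1-7)^19 + y21*(1-0)*(1+3*7)^14*(1-7)^21 + y23*(1-0)*(1+3*7)^12*(1-7)^23 + y25*(1-0)*(1+3*7)^10*(1-7)^25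 + y27*(1-0)*(1+3*7)^8*(1-7)^27 + y29*(1-0)*(1+3*7)^6*(1-7)^29 + y31*(1-0)*(1+3*7)^4*(1-7)^31 + y33*(1-0)*(1+3*7)^2*(1-7)^33 + y35*(1-0)*(1+3*7)^0*(1-7)^35)) + (-1427226530695870318306404214020098084027433998485953540167484839282688928645457166793333738928612765145)*((4^18*(0*(1 + x12*7^12 + x14*7^14 + x16*7^16 + x18*7^18 + x20*7^20 + x22*7^22 + x24*7^24 + x26*7^26 + x28*7^28 + x30*7^30 + x32*7^32 + x34*7^34) + 1*(y11*7^11 + y13*7^13 + y15*7^15 + y17*7^17 + y19*7^19 + y21*7^21 + y23*7^23 + y25*7^25 + y27*7^27 + y29*7^29 + y31*7^31 + y33*7^33 + y35*7^35))) - ((0+3*1)*(1+3*7)^35 + x12*(0+3*1)*(1+3*7)^23*(1-7)^12 + x14*(0+3*1)*(1+3*7)^21*(1-7)^14 + x16*(0+3*1)*(1+3*7)^19*(1-7)^16 + x18*(0+3*1)*(1+3*7)^17*(1-7)^18 + x20*(0+3*1)*(1+3*7)^15*(1-7)^20 + x22*(0+3*1)*(1+3*7)^13*(1-7)^22 + x24*(0+3*1)*(1+3*7)^11*(1-7)^24 + x26*(0+3*1)*(1+3*7)^9*(1-7)^26 + x28*(0+3*1)*(1+3*7)^7*(1-7)^28 + x30*(0+3*1)*(1+3*7)^5*(1-7)^30 + x32*(0+3*1)*(1+3*7)^3*(1-7)^32 + x34*(0+3*1)*(1+3*7)^1*(1-7)^34 + y11*(0-1)*(1+3*7)^24*(1-7)^11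 + y13*(0-1)*(1+3*7)^22*(1-7)^13 + y15*(0-1)*(1+3*7)^20*(1-7)^15 + y17*(0-1)*(1+3*7)^18*(1-7)^17 + y19*(0-1)*(1+3*7)^16*(1-7)^19 + y21*(0-1)*(1+3*7)^14*(1-7)^21 + y23*(0-1)*(1+3*7)^12*(1-7)^23 + y25*(0-1)*(1+3*7)^10*(1-7)^25 + y27*(0-1)*(1+3*7)^8*(1-7)^27 + y29*(0-1)*(1+3*7)^6*(1-7)^29 + y31*(0-1)*(1+3*7)^4*(1-7)^31 + y33*(0-1)*(1+3*7)^2*(1-7)^33 + y35*(0-1)*(1+3*7)^0*(1-7)^35)) + (4964133067796364334683716317830115237027187090134592604067390116159382493406311183266639301836800000)*((4^18*(1*(1 + x12*8^12 + x14*8^14 + x16*8^16 + x18*8^18 + x20*8^20 + x22*8^22 + x24*8^24 + x26*8^26 + x28*8^28 + x30*8^30 + x32*8^32 + x34*8^34) + 0*(y11*8^11 + y13*8^13 + y15*8^15 + y17*8^17 + y19*8^19 + y21*8^21 + y23*8^23 + y25*8^25 + y27*8^27 + y29*8^29 + y31*8^31 + y33*8^33 + y35*8^35))) - ((1+3*0)*(1+3*8)^35 + x12*(1+3*0)*(1+3*8)^23*(1-8)^12 + x14*(1+3*0)*(1+3*8)^21*(1-8)^14 + x16*(1+3*0)*(1+3*8)^19*(1-8)^16 + x18*(1+3*0)*(1+3*8)^17*(1-8)^18 + x20*(1+3*0)*(1+3*8)^15*(1-8)^20 + x22*(1+3*0)*(1+3*8)^13*(1-8)^22 + x24*(1+3*0)*(1+3*8)^11*(1-8)^24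 + x26*(1+3*0)*(1+3*8)^9*(1-8)^26 + x28*(1+3*0)*(1+3*8)^7*(1-8)^28 + x30*(1+3*0)*(1+3*8)^5*(1-8)^30 + x32*(1+3*0)*(1+3*8)^3*(1-8)^32 + x34*(1+3*0)*(1+3*8)^1*(1-8)^34 + y11*(1-0)*(1+3*8)^24*(1-8)^11 + y13*(1-0)*(1+3*8)^22*(1-8)^13 + y15*(1-0)*(1+3*8)^20*(1-8)^15 + y17*(1-0)*(1+3*8)^18*(1-8)^17 + y19*(1-0)*(1+3*8)^16*(1-8)^19 + y21*(1-0)*(1+3*8)^14*(1-8)^21 + y23*(1-0)*(1+3*8)^12*(1-8)^23 + y25*(1-0)*(1+3*8)^10*(1-8)^25 + y27*(1-0)*(1+3*8)^8*(1-8)^27 + y29*(1-0)*(1+3*8)^6*(1-8)^29 + y31*(1-0)*(1+3*8)^4*(1-8)^31 + y33*(1-0)*(1+3*8)^2*(1-8)^33 + y35*(1-0)*(1+3*8)^0*(1-8)^35)) + (39713064542370914677469730542640921896217496721076740832539120929275059947250489466133114414694400000)*((4^18*(0*(1 + x12*8^12 + x14*8^14 + x16*8^16 + x18*8^18 + x20*8^20 + x22*8^22 + x24*8^24 + x26*8^26 + x28*8^28 + x30*8^30 + x32*8^32 + x34*8^34) + 1*(y11*8^11 + y13*8^13 + y15*8^15 + y17*8^17 + y19*8^19 + y21*8^21 + y23*8^23 + y25*8^25 + y27*8^27 + y29*8^29 + y31*8^31 + y33*8^33 + y35*8^35))) - ((0+3*1)*(1+3*8)^35 + x12*(0+3*1)*(1+3*8)^23*(1-8)^12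 + x14*(0+3*1)*(1+3*8)^21*(1-8)^14 + x16*(0+3*1)*(1+3*8)^19*(1-8)^16 + x18*(0+3*1)*(1+3*8)^17*(1-8)^18 + x20*(0+3*1)*(1+3*8)^15*(1-8)^20 + x22*(0+3*1)*(1+3*8)^13*(1-8)^22 + x24*(0+3*1)*(1+3*8)^11*(1-8)^24 + x26*(0+3*1)*(1+3*8)^9*(1-8)^26 + x28*(0+3*1)*(1+3*8)^7*(1-8)^28 + x30*(0+3*1)*(1+3*8)^5*(1-8)^30 + x32*(0+3*1)*(1+3*8)^3*(1-8)^32 + x34*(0+3*1)*(1+3*8)^1*(1-8)^34 + y11*(0-1)*(1+3*8)^24*(1-8)^11 + y13*(0-1)*(1+3*8)^22*(1-8)^13 + y15*(0-1)*(1+3*8)^20*(1-8)^15 + y17*(0-1)*(1+3*8)^18*(1-8)^17 + y19*(0-1)*(1+3*8)^16*(1-8)^19 + y21*(0-1)*(1+3*8)^14*(1-8)^21 + y23*(0-1)*(1+3*8)^12*(1-8)^23 + y25*(0-1)*(1+3*8)^10*(1-8)^25 + y27*(0-1)*(1+3*8)^8*(1-8)^27 + y29*(0-1)*(1+3*8)^6*(1-8)^29 + y31*(0-1)*(1+3*8)^4*(1-8)^31 + y33*(0-1)*(1+3*8)^2*(1-8)^33 + y35*(0-1)*(1+3*8)^0*(1-8)^35)) + (-124578315765386273592024133399236927506821475702833163210840705146693307030737985562398424037331340)*((4^18*(1*(1 + x12*9^12 + x14*9^14 + x16*9^16 + x18*9^18 + x20*9^20 + x22*9^22 + x24*9^24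 + x26*9^26 + x28*9^28 + x30*9^30 + x32*9^32 + x34*9^34) + 0*(y11*9^11 + y13*9^13 + y15*9^15 + y17*9^17 + y19*9^19 + y21*9^21 + y23*9^23 + y25*9^25 + y27*9^27 + y29*9^29 + y31*9^31 + y33*9^33 + y35*9^35))) - ((1+3*0)*(1+3*9)^35 + x12*(1+3*0)*(1+3*9)^23*(1-9)^12 + x14*(1+3*0)*(1+3*9)^21*(1-9)^14 + x16*(1+3*0)*(1+3*9)^19*(1-9)^16 + x18*(1+3*0)*(1+3*9)^17*(1-9)^18 + x20*(1+3*0)*(1+3*9)^15*(1-9)^20 + x22*(1+3*0)*(1+3*9)^13*(1-9)^22 + x24*(1+3*0)*(1+3*9)^11*(1-9)^24 + x26*(1+3*0)*(1+3*9)^9*(1-9)^26 + x28*(1+3*0)*(1+3*9)^7*(1-9)^28 + x30*(1+3*0)*(1+3*9)^5*(1-9)^30 + x32*(1+3*0)*(1+3*9)^3*(1-9)^32 + x34*(1+3*0)*(1+3*9)^1*(1-9)^34 + y11*(1-0)*(1+3*9)^24*(1-9)^11 + y13*(1-0)*(1+3*9)^22*(1-9)^13 + y15*(1-0)*(1+3*9)^20*(1-9)^15 + y17*(1-0)*(1+3*9)^18*(1-9)^17 + y19*(1-0)*(1+3*9)^16*(1-9)^19 + y21*(1-0)*(1+3*9)^14*(1-9)^21 + y23*(1-0)*(1+3*9)^12*(1-9)^23 + y25*(1-0)*(1+3*9)^10*(1-9)^25 + y27*(1-0)*(1+3*9)^8*(1-9)^27 + y29*(1-0)*(1+3*9)^6*(1-9)^29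 + y31*(1-0)*(1+3*9)^4*(1-9)^31 + y33*(1-0)*(1+3*9)^2*(1-9)^33 + y35*(1-0)*(1+3*9)^0*(1-9)^35)) + (-1121204841888476462328217200593132347561393281325498468897566346320239763276641870061585816335982060)*((4^18*(0*(1 + x12*9^12 + x14*9^14 + x16*9^16 + x18*9^18 + x20*9^20 + x22*9^22 + x24*9^24 + x26*9^26 + x28*9^28 + x30*9^30 + x32*9^32 + x34*9^34) + 1*(y11*9^11 + y13*9^13 + y15*9^15 + y17*9^17 + y19*9^19 + y21*9^21 + y23*9^23 + y25*9^25 + y27*9^27 + y29*9^29 + y31*9^31 + y33*9^33 + y35*9^35))) - ((0+3*1)*(1+3*9)^35 + x12*(0+3*1)*(1+3*9)^23*(1-9)^12 + x14*(0+3*1)*(1+3*9)^21*(1-9)^14 + x16*(0+3*1)*(1+3*9)^19*(1-9)^16 + x18*(0+3*1)*(1+3*9)^17*(1-9)^18 + x20*(0+3*1)*(1+3*9)^15*(1-9)^20 + x22*(0+3*1)*(1+3*9)^13*(1-9)^22 + x24*(0+3*1)*(1+3*9)^11*(1-9)^24 + x26*(0+3*1)*(1+3*9)^9*(1-9)^26 + x28*(0+3*1)*(1+3*9)^7*(1-9)^28 + x30*(0+3*1)*(1+3*9)^5*(1-9)^30 + x32*(0+3*1)*(1+3*9)^3*(1-9)^32 + x34*(0+3*1)*(1+3*9)^1*(1-9)^34 + y11*(0-1)*(1+3*9)^24*(1-9)^11 + y13*(0-1)*(1+3*9)^22*(1-9)^13 + y15*(0-1)*(1+3*9)^20*(1-9)^15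 + y17*(0-1)*(1+3*9)^18*(1-9)^17 + y19*(0-1)*(1+3*9)^16*(1-9)^19 + y21*(0-1)*(1+3*9)^14*(1-9)^21 + y23*(0-1)*(1+3*9)^12*(1-9)^23 + y25*(0-1)*(1+3*9)^10*(1-9)^25 + y27*(0-1)*(1+3*9)^8*(1-9)^27 + y29*(0-1)*(1+3*9)^6*(1-9)^29 + y31*(0-1)*(1+3*9)^4*(1-9)^31 + y33*(0-1)*(1+3*9)^2*(1-9)^33 + y35*(0-1)*(1+3*9)^0*(1-9)^35)) + (2835483471946849240236394570235237937660817770490091851387788029168354203788522145866331849752576)*((4^18*(1*(1 + x12*10^12 + x14*10^14 + x16*10^16 + x18*10^18 + x20*10^20 + x22*10^22 + x24*10^24 + x26*10^26 + x28*10^28 + x30*10^30 + x32*10^32 + x34*10^34) + 0*(y11*10^11 + y13*10^13 + y15*10^15 + y17*10^17 + y19*10^19 + y21*10^21 + y23*10^23 + y25*10^25 + y27*10^27 + y29*10^29 + y31*10^31 + y33*10^33 + y35*10^35))) - ((1+3*0)*(1+3*10)^35 + x12*(1+3*0)*(1+3*10)^23*(1-10)^12 + x14*(1+3*0)*(1+3*10)^21*(1-10)^14 + x16*(1+3*0)*(1+3*10)^19*(1-10)^16 + x18*(1+3*0)*(1+3*10)^17*(1-10)^18 + x20*(1+3*0)*(1+3*10)^15*(1-10)^20 + x22*(1+3*0)*(1+3*10)^13*(1-10)^22 + x24*(1+3*0)*(1+3*10)^11*(1-10)^24 + x26*(1+3*0)*(1+3*10)^9*(1-10)^26 + x28*(1+3*0)*(1+3*10)^7*(1-10)^28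 + x30*(1+3*0)*(1+3*10)^5*(1-10)^30 + x32*(1+3*0)*(1+3*10)^3*(1-10)^32 + x34*(1+3*0)*(1+3*10)^1*(1-10)^34 + y11*(1-0)*(1+3*10)^24*(1-10)^11 + y13*(1-0)*(1+3*10)^22*(1-10)^13 + y15*(1-0)*(1+3*10)^20*(1-10)^15 + y17*(1-0)*(1+3*10)^18*(1-10)^17 + y19*(1-0)*(1+3*10)^16*(1-10)^19 + y21*(1-0)*(1+3*10)^14*(1-10)^21 + y23*(1-0)*(1+3*10)^12*(1-10)^23 + y25*(1-0)*(1+3*10)^10*(1-10)^25 + y27*(1-0)*(1+3*10)^8*(1-10)^27 + y29*(1-0)*(1+3*10)^6*(1-10)^29 + y31*(1-0)*(1+3*10)^4*(1-10)^31 + y33*(1-0)*(1+3*10)^2*(1-10)^33 + y35*(1-0)*(1+3*10)^0*(1-10)^35)) + (28354834719468492402363945702352379376608177704900918513877880291683542037885221458663318497525760)*((4^18*(0*(1 + x12*10^12 + x14*10^14 + x16*10^16 + x18*10^18 + x20*10^20 + x22*10^22 + x24*10^24 + x26*10^26 + x28*10^28 + x30*10^30 + x32*10^32 + x34*10^34) + 1*(y11*10^11 + y13*10^13 + y15*10^15 + y17*10^17 + y19*10^19 + y21*10^21 + y23*10^23 + y25*10^25 + y27*10^27 + y29*10^29 + y31*10^31 + y33*10^33 + y35*10^35))) - ((0+3*1)*(1+3*10)^35 + x12*(0+3*1)*(1+3*10)^23*(1-10)^12 + x14*(0+3*1)*(1+3*10)^21*(1-10)^14 + x16*(0+3*1)*(1+3*10)^19*(1-10)^16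 + x18*(0+3*1)*(1+3*10)^17*(1-10)^18 + x20*(0+3*1)*(1+3*10)^15*(1-10)^20 + x22*(0+3*1)*(1+3*10)^13*(1-10)^22 + x24*(0+3*1)*(1+3*10)^11*(1-10)^24 + x26*(0+3*1)*(1+3*10)^9*(1-10)^26 + x28*(0+3*1)*(1+3*10)^7*(1-10)^28 + x30*(0+3*1)*(1+3*10)^5*(1-10)^30 + x32*(0+3*1)*(1+3*10)^3*(1-10)^32 + x34*(0+3*1)*(1+3*10)^1*(1-10)^34 + y11*(0-1)*(1+3*10)^24*(1-10)^11 + y13*(0-1)*(1+3*10)^22*(1-10)^13 + y15*(0-1)*(1+3*10)^20*(1-10)^15 + y17*(0-1)*(1+3*10)^18*(1-10)^17 + y19*(0-1)*(1+3*10)^16*(1-10)^19 + y21*(0-1)*(1+3*10)^14*(1-10)^21 + y23*(0-1)*(1+3*10)^12*(1-10)^23 + y25*(0-1)*(1+3*10)^10*(1-10)^25 + y27*(0-1)*(1+3*10)^8*(1-10)^27 + y29*(0-1)*(1+3*10)^6*(1-10)^29 + y31*(0-1)*(1+3*10)^4*(1-10)^31 + y33*(0-1)*(1+3*10)^2*(1-10)^33 + y35*(0-1)*(1+3*10)^0*(1-10)^35)) + (-49749075135585165671345462953593890099983210127064698487960864419967338043887621118334220676864)*((4^18*(1*(1 + x12*11^12 + x14*11^14 + x16*11^16 + x18*11^18 + x20*11^20 + x22*11^22 + x24*11^24 + x26*11^26 + x28*11^28 + x30*11^30 + x32*11^32 + x34*11^34) + 0*(y11*11^11 + y13*11^13 +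 y15*11^15 + y17*11^17 + y19*11^19 + y21*11^21 + y23*11^23 + y25*11^25 + y27*11^27 + y29*11^29 + y31*11^31 + y33*11^33 + y35*11^35))) - ((1+3*0)*(1+3*11)^35 + x12*(1+3*0)*(1+3*11)^23*(1-11)^12 + x14*(1+3*0)*(1+3*11)^21*(1-11)^14 + x16*(1+3*0)*(1+3*11)^19*(1-11)^16 + x18*(1+3*0)*(1+3*11)^17*(1-11)^18 + x20*(1+3*0)*(1+3*11)^15*(1-11)^20 + x22*(1+3*0)*(1+3*11)^13*(1-11)^22 + x24*(1+3*0)*(1+3*11)^11*(1-11)^24 + x26*(1+3*0)*(1+3*11)^9*(1-11)^26 + x28*(1+3*0)*(1+3*11)^7*(1-11)^28 + x30*(1+3*0)*(1+3*11)^5*(1-11)^30 + x32*(1+3*0)*(1+3*11)^3*(1-11)^32 + x34*(1+3*0)*(1+3*11)^1*(1-11)^34 + y11*(1-0)*(1+3*11)^24*(1-11)^11 + y13*(1-0)*(1+3*11)^22*(1-11)^13 + y15*(1-0)*(1+3*11)^20*(1-11)^15 + y17*(1-0)*(1+3*11)^18*(1-11)^17 + y19*(1-0)*(1+3*11)^16*(1-11)^19 + y21*(1-0)*(1+3*11)^14*(1-11)^21 + y23*(1-0)*(1+3*11)^12*(1-11)^23 + y25*(1-0)*(1+3*11)^10*(1-11)^25 + y27*(1-0)*(1+3*11)^8*(1-11)^27 + y29*(1-0)*(1+3*11)^6*(1-11)^29 + y31*(1-0)*(1+3*11)^4*(1-11)^31 + y33*(1-0)*(1+3*11)^2*(1-11)^33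 + y35*(1-0)*(1+3*11)^0*(1-11)^35)) + (-547239826491436822384800092489532791099815311397711683367569508619640718482763832301676427445504)*((4^18*(0*(1 + x12*11^12 + x14*11^14 + x16*11^16 + x18*11^18 + x20*11^20 + x22*11^22 + x24*11^24 + x26*11^26 + x28*11^28 + x30*11^30 + x32*11^32 + x34*11^34) + 1*(y11*11^11 + y13*11^13 + y15*11^15 + y17*11^17 + y19*11^19 + y21*11^21 + y23*11^23 + y25*11^25 + y27*11^27 + y29*11^29 + y31*11^31 + y33*11^33 + y35*11^35))) - ((0+3*1)*(1+3*11)^35 + x12*(0+3*1)*(1+3*11)^23*(1-11)^12 + x14*(0+3*1)*(1+3*11)^21*(1-11)^14 + x16*(0+3*1)*(1+3*11)^19*(1-11)^16 + x18*(0+3*1)*(1+3*11)^17*(1-11)^18 + x20*(0+3*1)*(1+3*11)^15*(1-11)^20 + x22*(0+3*1)*(1+3*11)^13*(1-11)^22 + x24*(0+3*1)*(1+3*11)^11*(1-11)^24 + x26*(0+3*1)*(1+3*11)^9*(1-11)^26 + x28*(0+3*1)*(1+3*11)^7*(1-11)^28 + x30*(0+3*1)*(1+3*11)^5*(1-11)^30 + x32*(0+3*1)*(1+3*11)^3*(1-11)^32 + x34*(0+3*1)*(1+3*11)^1*(1-11)^34 + y11*(0-1)*(1+3*11)^24*(1-11)^11 + y13*(0-1)*(1+3*11)^22*(1-11)^13 + y15*(0-1)*(1+3*11)^20*(1-11)^15 + y17*(0-1)*(1+3*11)^18*(1-11)^17 + y19*(0-1)*(1+3*11)^16*(1-11)^19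 + y21*(0-1)*(1+3*11)^14*(1-11)^21 + y23*(0-1)*(1+3*11)^12*(1-11)^23 + y25*(0-1)*(1+3*11)^10*(1-11)^25 + y27*(0-1)*(1+3*11)^8*(1-11)^27 + y29*(0-1)*(1+3*11)^6*(1-11)^29 + y31*(0-1)*(1+3*11)^4*(1-11)^31 + y33*(0-1)*(1+3*11)^2*(1-11)^33 + y35*(0-1)*(1+3*11)^0*(1-11)^35)) + (488434951388065466962273741947210537034065982324889930337059582452050842868813834522250444800)*((4^18*(1*(1 + x12*12^12 + x14*12^14 + x16*12^16 + x18*12^18 + x20*12^20 + x22*12^22 + x24*12^24 + x26*12^26 + x28*12^28 + x30*12^30 + x32*12^32 + x34*12^34) + 0*(y11*12^11 + y13*12^13 + y15*12^15 + y17*12^17 + y19*12^19 + y21*12^21 + y23*12^23 + y25*12^25 + y27*12^27 + y29*12^29 + y31*12^31 + y33*12^33 + y35*12^35))) - ((1+3*0)*(1+3*12)^35 + x12*(1+3*0)*(1+3*12)^23*(1-12)^12 + x14*(1+3*0)*(1+3*12)^21*(1-12)^14 + x16*(1+3*0)*(1+3*12)^19*(1-12)^16 + x18*(1+3*0)*(1+3*12)^17*(1-12)^18 + x20*(1+3*0)*(1+3*12)^15*(1-12)^20 + x22*(1+3*0)*(1+3*12)^13*(1-12)^22 + x24*(1+3*0)*(1+3*12)^11*(1-12)^24 + x26*(1+3*0)*(1+3*12)^9*(1-12)^26 + x28*(1+3*0)*(1+3*12)^7*(1-12)^28 + x30*(1+3*0)*(1+3*12)^5*(1-12)^30 + x32*(1+3*0)*(1+3*12)^3*(1-12)^32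 + x34*(1+3*0)*(1+3*12)^1*(1-12)^34 + y11*(1-0)*(1+3*12)^24*(1-12)^11 + y13*(1-0)*(1+3*12)^22*(1-12)^13 + y15*(1-0)*(1+3*12)^20*(1-12)^15 + y17*(1-0)*(1+3*12)^18*(1-12)^17 + y19*(1-0)*(1+3*12)^16*(1-12)^19 + y21*(1-0)*(1+3*12)^14*(1-12)^21 + y23*(1-0)*(1+3*12)^12*(1-12)^23 + y25*(1-0)*(1+3*12)^10*(1-12)^25 + y27*(1-0)*(1+3*12)^8*(1-12)^27 + y29*(1-0)*(1+3*12)^6*(1-12)^29 + y31*(1-0)*(1+3*12)^4*(1-12)^31 + y33*(1-0)*(1+3*12)^2*(1-12)^33 + y35*(1-0)*(1+3*12)^0*(1-12)^35)) + (5861219416656785603547284903366526444408791787898679164044714989424610114425766014267005337600)*((4^18*(0*(1 + x12*12^12 + x14*12^14 + x16*12^16 + x18*12^18 + x20*12^20 + x22*12^22 + x24*12^24 + x26*12^26 + x28*12^28 + x30*12^30 + x32*12^32 + x34*12^34) + 1*(y11*12^11 + y13*12^13 + y15*12^15 + y17*12^17 + y19*12^19 + y21*12^21 + y23*12^23 + y25*12^25 + y27*12^27 + y29*12^29 + y31*12^31 + y33*12^33 + y35*12^35))) - ((0+3*1)*(1+3*12)^35 + x12*(0+3*1)*(1+3*12)^23*(1-12)^12 + x14*(0+3*1)*(1+3*12)^21*(1-12)^14 + x16*(0+3*1)*(1+3*12)^19*(1-12)^16 + x18*(0+3*1)*(1+3*12)^17*(1-12)^18 + x20*(0+3*1)*(1+3*12)^15*(1-12)^20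 + x22*(0+3*1)*(1+3*12)^13*(1-12)^22 + x24*(0+3*1)*(1+3*12)^11*(1-12)^24 + x26*(0+3*1)*(1+3*12)^9*(1-12)^26 + x28*(0+3*1)*(1+3*12)^7*(1-12)^28 + x30*(0+3*1)*(1+3*12)^5*(1-12)^30 + x32*(0+3*1)*(1+3*12)^3*(1-12)^32 + x34*(0+3*1)*(1+3*12)^1*(1-12)^34 + y11*(0-1)*(1+3*12)^24*(1-12)^11 + y13*(0-1)*(1+3*12)^22*(1-12)^13 + y15*(0-1)*(1+3*12)^20*(1-12)^15 + y17*(0-1)*(1+3*12)^18*(1-12)^17 + y19*(0-1)*(1+3*12)^16*(1-12)^19 + y21*(0-1)*(1+3*12)^14*(1-12)^21 + y23*(0-1)*(1+3*12)^12*(1-12)^23 + y25*(0-1)*(1+3*12)^10*(1-12)^25 + y27*(0-1)*(1+3*12)^8*(1-12)^27 + y29*(0-1)*(1+3*12)^6*(1-12)^29 + y31*(0-1)*(1+3*12)^4*(1-12)^31 + y33*(0-1)*(1+3*12)^2*(1-12)^33 + y35*(0-1)*(1+3*12)^0*(1-12)^35))) by ring.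
rewrite h0 h4 h5 h6 h7 h8 h9 h10 h11 h12 h13 h14 h15 h16 h17 h18 h19 h20 h21 h22 h23 h24 h25 in ET2.
rewrite !Z.sub_diag in ET2.
clear - ET1 ET2. split; lia.
Qed.

Lemma Z7140 : Z.of_nat 7140%nat = 7140. Proof. vm_compute. reflexivity. Qed.

Definition concl (a b c d : nat) : Prop :=
  Z.of_nat a = 2 * Z.of_nat b /\ 12 * (Z.of_nat a + Z.of_nat b) + Z.of_nat c + Z.of_nat d = 771120.
End NZ.

Definition good0 (j : nat) := (j == 0)%N || ((12 <= j)%N && ~~ odd j).
Definition good1 (j : nat) := (11 <= j)%N && odd j.

Definition Pw (c : nat -> nat) (t : int) : int := \sum_(j < 36) (c j)%:R * t ^+ j.
Definition Qw (c : nat -> nat) (t : int) : int := \sum_(j < 36) (c j)%:R * (1 + 3 * t) ^+ (35 - j) * (1 - t) ^+ j.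

Lemma Pw_exp c t : Pw c t = \sum_(0 <= j < 36) (c j)%:R * t ^+ j.
Proof. by rewrite /Pw big_mkord. Qed.
Lemma Qw_exp c t : Qw c t = \sum_(0 <= j < 36) (c j)%:R * (1 + 3 * t) ^+ (35 - j) * (1 - t) ^+ j.
Proof. by rewrite /Qw big_mkord. Qed.
Lemma Pw_expand c t : Pw c t = (c 0%N)%:R * t ^+ 0 + (c 1%N)%:R * t ^+ 1 + (c 2%N)%:R * t ^+ 2 + (c 3%N)%:R * t ^+ 3 + (c 4%N)%:R * t ^+ 4 + (c 5%N)%:R * t ^+ 5 + (c 6%N)%:R * t ^+ 6 + (c 7%N)%:R * t ^+ 7 + (c 8%N)%:R * t ^+ 8 + (c 9%N)%:R * t ^+ 9 + (c 10%N)%:R * t ^+ 10 + (c 11%N)%:R * t ^+ 11 + (c 12%N)%:R * t ^+ 12 + (c 13%N)%:R * t ^+ 13 + (c 14%N)%:R * t ^+ 14 + (c 15%N)%:R * t ^+ 15 + (c 16%N)%:R * t ^+ 16 + (c 17%N)%:R * t ^+ 17 + (c 18%N)%:R * t ^+ 18 + (c 19%N)%:R * t ^+ 19 + (c 20%N)%:R * t ^+ 20 + (c 21%N)%:R * t ^+ 21 + (c 22%N)%:R * t ^+ 22 + (c 23%N)%:R * t ^+ 23 + (c 24%N)%:R * t ^+ 24 + (c 25%N)%:R * t ^+ 25 + (c 26%N)%:R * t ^+ 26 + (c 27%N)%:R * t ^+ 27 + (c 28%N)%:R * t ^+ 28 + (c 29%N)%:R * t ^+ 29 + (c 30%N)%:R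 * t ^+ 30 + (c 31%N)%:R * t ^+ 31 + (c 32%N)%:R * t ^+ 32 + (c 33%N)%:R * t ^+ 33 + (c 34%N)%:R * t ^+ 34 + (c 35%N)%:R * t ^+ 35.
Proof. rewrite Pw_exp !big_nat_recr //= big_geq // add0r. reflexivity. Qed.
Lemma Qw_expand c t : Qw c t = (c 0%N)%:R * (1 + 3 * t) ^+ 35 * (1 - t) ^+ 0 + (c 1%N)%:R * (1 + 3 * t) ^+ 34 * (1 - t) ^+ 1 + (c 2%N)%:R * (1 + 3 * t) ^+ 33 * (1 - t) ^+ 2 + (c 3%N)%:R * (1 + 3 * t) ^+ 32 * (1 - t) ^+ 3 + (c 4%N)%:R * (1 + 3 * t) ^+ 31 * (1 - t) ^+ 4 + (c 5%N)%:R * (1 + 3 * t) ^+ 30 * (1 - t) ^+ 5 + (c 6%N)%:R * (1 + 3 * t) ^+ 29 * (1 - t) ^+ 6 + (c 7%N)%:R * (1 + 3 * t) ^+ 28 * (1 - t) ^+ 7 + (c 8%N)%:R * (1 + 3 * t) ^+ 27 * (1 - t) ^+ 8 + (c 9%N)%:R * (1 + 3 * t) ^+ 26 * (1 - t) ^+ 9 + (c 10%N)%:R * (1 + 3 * t) ^+ 25 * (1 - t) ^+ 10 + (c 11%N)%:R * (1 + 3 * t) ^+ 24 * (1 - t) ^+ 11 + (c 12%N)%:R * (1 + 3 * t) ^+ 23 * (1 - t) ^+ 12 + (c 13%N)%:R * (1 + 3 * t) ^+ 22 * (1 - t) ^+ 13 + (c 14%N)%:R * (1 + 3 * t) ^+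 21 * (1 - t) ^+ 14 + (c 15%N)%:R * (1 + 3 * t) ^+ 20 * (1 - t) ^+ 15 + (c 16%N)%:R * (1 + 3 * t) ^+ 19 * (1 - t) ^+ 16 + (c 17%N)%:R * (1 + 3 * t) ^+ 18 * (1 - t) ^+ 17 + (c 18%N)%:R * (1 + 3 * t) ^+ 17 * (1 - t) ^+ 18 + (c 19%N)%:R * (1 + 3 * t) ^+ 16 * (1 - t) ^+ 19 + (c 20%N)%:R * (1 + 3 * t) ^+ 15 * (1 - t) ^+ 20 + (c 21%N)%:R * (1 + 3 * t) ^+ 14 * (1 - t) ^+ 21 + (c 22%N)%:R * (1 + 3 * t) ^+ 13 * (1 - t) ^+ 22 + (c 23%N)%:R * (1 + 3 * t) ^+ 12 * (1 - t) ^+ 23 + (c 24%N)%:R * (1 + 3 * t) ^+ 11 * (1 - t) ^+ 24 + (c 25%N)%:R * (1 + 3 * t) ^+ 10 * (1 - t) ^+ 25 + (c 26%N)%:R * (1 + 3 * t) ^+ 9 * (1 - t) ^+ 26 + (c 27%N)%:R * (1 + 3 * t) ^+ 8 * (1 - t) ^+ 27 + (c 28%N)%:R * (1 + 3 * t) ^+ 7 * (1 - t) ^+ 28 + (c 29%N)%:R * (1 + 3 * t) ^+ 6 * (1 - t) ^+ 29 + (c 30%N)%:R * (1 + 3 * t) ^+ 5 * (1 - t) ^+ 30 + (c 31%N)%:R * (1 + 3 * t) ^+ 4 * (1 - t) ^+ 31 + (c 32%N)%:R * (1 + 3 * t) ^+ 3 * (1 - t) ^+ 32 + (c 33%N)%:R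 * (1 + 3 * t) ^+ 2 * (1 - t) ^+ 33 + (c 34%N)%:R * (1 + 3 * t) ^+ 1 * (1 - t) ^+ 34 + (c 35%N)%:R * (1 + 3 * t) ^+ 0 * (1 - t) ^+ 35.
Proof. rewrite Qw_exp !big_nat_recr //= big_geq // add0r. reflexivity. Qed.

Lemma numeric (x12 x14 x16 x18 x20 x22 x24 x26 x28 x30 x32 x34 y11 y13 y15 y17 y19 y21 y23 y25 y27 y29 y31 y33 y35 : nat) :
  (forall u v t : int, 4 ^+ 18 * (u * ((1%N)%:R * t ^+ 0 + (x12)%:R * t ^+ 12 + (x14)%:R * t ^+ 14 + (x16)%:R * t ^+ 16 + (x18)%:R * t ^+ 18 + (x20)%:R * t ^+ 20 + (x22)%:R * t ^+ 22 + (x24)%:R * t ^+ 24 + (x26)%:R * t ^+ 26 + (x28)%:R * t ^+ 28 + (x30)%:R * t ^+ 30 + (x32)%:R * t ^+ 32 + (x34)%:R * t ^+ 34) + v * ((y11)%:R * t ^+ 11 + (y13)%:R * t ^+ 13 + (y15)%:R * t ^+ 15 + (y17)%:R * t ^+ 17 + (y19)%:R * t ^+ 19 + (y21)%:R * t ^+ 21 + (y23)%:R * t ^+ 23 + (y25)%:R * t ^+ 25 + (y27)%:R * t ^+ 27 + (y29)%:R * t ^+ 29 + (y31)%:R * t ^+ 31 + (y33)%:R * t ^+ 33 + (y35)%:R * t ^+ 35)) = (u + 3 * v) * ((1%N)%:R * (1 + 3 * t) ^+ 35 * (1 - t) ^+ 0 + (x12)%:R * (1 + 3 * t) ^+ 23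 * (1 - t) ^+ 12 + (x14)%:R * (1 + 3 * t) ^+ 21 * (1 - t) ^+ 14 + (x16)%:R * (1 + 3 * t) ^+ 19 * (1 - t) ^+ 16 + (x18)%:R * (1 + 3 * t) ^+ 17 * (1 - t) ^+ 18 + (x20)%:R * (1 + 3 * t) ^+ 15 * (1 - t) ^+ 20 + (x22)%:R * (1 + 3 * t) ^+ 13 * (1 - t) ^+ 22 + (x24)%:R * (1 + 3 * t) ^+ 11 * (1 - t) ^+ 24 + (x26)%:R * (1 + 3 * t) ^+ 9 * (1 - t) ^+ 26 + (x28)%:R * (1 + 3 * t) ^+ 7 * (1 - t) ^+ 28 + (x30)%:R * (1 + 3 * t) ^+ 5 * (1 - t) ^+ 30 + (x32)%:R * (1 + 3 * t) ^+ 3 * (1 - t) ^+ 32 + (x34)%:R * (1 + 3 * t) ^+ 1 * (1 - t) ^+ 34) + (u - v) * ((y11)%:R * (1 + 3 * t) ^+ 24 * (1 - t) ^+ 11 + (y13)%:R * (1 + 3 * t) ^+ 22 * (1 - t) ^+ 13 + (y15)%:R * (1 + 3 * t) ^+ 20 * (1 - t) ^+ 15 + (y17)%:R * (1 + 3 * t) ^+ 18 * (1 - t) ^+ 17 + (y19)%:R * (1 + 3 * t) ^+ 16 * (1 - t) ^+ 19 + (y21)%:R * (1 + 3 * t) ^+ 14 * (1 - t) ^+ 21 + (y23)%:R * (1 + 3 * t) ^+ 12 * (1 - t) ^+ 23 + (y25)%:R * (1 + 3 * t) ^+ 10 * (1 - t) ^+ 25 + (y27)%:R * (1 + 3 * t)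 ^+ 8 * (1 - t) ^+ 27 + (y29)%:R * (1 + 3 * t) ^+ 6 * (1 - t) ^+ 29 + (y31)%:R * (1 + 3 * t) ^+ 4 * (1 - t) ^+ 31 + (y33)%:R * (1 + 3 * t) ^+ 2 * (1 - t) ^+ 33 + (y35)%:R * (1 + 3 * t) ^+ 0 * (1 - t) ^+ 35)) ->
  concl x12 y11 x14 y13.
Proof.
move=> H; rewrite /concl.
have [] := (@numericZ (Z.of_nat x12) (Z.of_nat x14) (Z.of_nat x16) (Z.of_nat x18) (Z.of_nat x20) (Z.of_nat x22) (Z.of_nat x24) (Z.of_nat x26) (Z.of_nat x28) (Z.of_nat x30) (Z.of_nat x32) (Z.of_nat x34) (Z.of_nat y11) (Z.of_nat y13) (Z.of_nat y15) (Z.of_nat y17) (Z.of_nat y19) (Z.of_nat y21) (Z.of_nat y23) (Z.of_nat y25) (Z.of_nat y27) (Z.of_nat y29) (Z.of_nat y31) (Z.of_nat y33) (Z.of_nat y35)).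
- by move: (H 1 0 0); zify; lia.
- by move: (H 0 1 0); zify; lia.
- by move: (H 1 0 1); zify; lia.
- by move: (H 0 1 1); zify; lia.
- by move: (H 1 0 2); zify; lia.
- by move: (H 0 1 2); zify; lia.
- by move: (H 1 0 3); zify; lia.
- by move: (H 0 1 3); zify; lia.
- by move: (H 1 0 4); zify; lia.
- by move: (H 0 1 4); zify; lia.
- by move: (H 1 0 5); zify; lia.
- by move: (H 0 1 5); zify; lia.
- by move: (H 1 0 6); zify; lia.
- by move: (H 0 1 6); zify; lia.
- by move: (H 1 0 7); zify; lia.
- by move: (H 0 1 7); zify; lia.
- by move: (H 1 0 8); zify; lia.
- by move: (H 0 1 8); zify; lia.
- by move: (H 1 0 9); zify; lia.
- by move: (H 0 1 9); zify; lia.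
- by move: (H 1 0 10); zify; lia.
- by move: (H 0 1 10); zify; lia.
- by move: (H 1 0 11); zify; lia.
- by move: (H 0 1 11); zify; lia.
- by move: (H 1 0 12); zify; lia.
- by move: (H 0 1 12); zify; lia.
- by move=> A B; split.
Qed.

Lemma numeric' (c0 c1 : nat -> nat) :
  c0 0%N = 1%N ->
  (forall j, ~~ good0 j -> c0 j = 0%N) -> (forall j, ~~ good1 j -> c1 j = 0%N) ->
  (forall u v t : int, 4 ^+ 18 * (u * Pw c0 t + v * Pw c1 t) = (u + 3 * v) * Qw c0 t + (u - v) * Qw c1 t) ->
  concl (c0 12%N) (c1 11%N) (c0 14%N) (c1 13%N).
Proof.
move=> c00 Z0 Z1 H.
apply: (@numeric (c0 12%N) (c0 14%N) (c0 16%N) (c0 18%N) (c0 20%N) (c0 22%N) (c0 24%N) (c0 26%N) (c0 28%N) (c0 30%N) (c0 32%N) (c0 34%N) (c1 11%N) (c1 13%N) (c1 15%N) (c1 17%N) (c1 19%N) (c1 21%N) (c1 23%N) (c1 25%N) (c1 27%N) (c1 29%N) (c1 31%N) (c1 33%N) (c1 35%N)) => u v t.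
have := H u v t; rewrite !Pw_expand !Qw_expand.
rewrite (Z0 1%N erefl) (Z0 2%N erefl) (Z0 3%N erefl) (Z0 4%N erefl) (Z0 5%N erefl) (Z0 6%N erefl) (Z0 7%N erefl) (Z0 8%N erefl) (Z0 9%N erefl) (Z0 10%N erefl) (Z0 11%N erefl) (Z0 13%N erefl) (Z0 15%N erefl) (Z0 17%N erefl) (Z0 19%N erefl) (Z0 21%N erefl) (Z0 23%N erefl) (Z0 25%N erefl) (Z0 27%N erefl) (Z0 29%N erefl) (Z0 31%N erefl) (Z0 33%N erefl) (Z0 35%N erefl) (Z1 0%N erefl) (Z1 1%N erefl) (Z1 2%N erefl) (Z1 3%N erefl) (Z1 4%N erefl) (Z1 5%N erefl) (Z1 6%N erefl) (Z1 7%N erefl) (Z1 8%N erefl) (Z1 9%N erefl) (Z1 10%N erefl) (Z1 12%N erefl) (Z1 14%N erefl) (Z1 16%N erefl) (Z1 18%N erefl) (Z1 20%N erefl) (Z1 22%N erefl) (Z1 24%N erefl) (Z1 26%N erefl) (Z1 28%N erefl) (Z1 30%N erefl) (Z1 32%N erefl) (Z1 34%N erefl) c00.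
rewrite !mulr0n !mul0r !addr0 !add0r.
by [].
Qed.

Section Field4.
Variable F : finFieldType.
Hypothesis F4 : #|F| = 4%N.

Lemma char2 : (2%N \in [pchar F]).
Proof. by apply: (@card_finPcharP _ 2 2) => //; rewrite F4. Qed.

Lemma addxx (x : F) : x + x = 0.
Proof. by rewrite -mulr2n -mulr_natr (pcharf0 char2) mulr0. Qed.

Lemma oppF (x : F) : - x = x.
Proof. by apply/eqP; rewrite eq_sym -subr_eq0 opprK addxx. Qed.

Lemma sqrD (x y : F) : (x + y) ^+ 2 = x ^+ 2 + y ^+ 2.
Proof. by rewrite sqrrD mulr2n addxx addr0. Qed.

Lemma exp4 (x : F) : x ^+ 4 = x.
Proof. by have := expf_card x; rewrite F4. Qed.

Lemma exp3 (x : F) : x != 0 -> x ^+ 3 = 1.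
Proof.
move=> nz; apply: (mulfI nz); rewrite mulr1 -exprS; exact: exp4.
Qed.

Definition Tr (x : F) := x + x ^+ 2.

Lemma TrD x y : Tr (x + y) = Tr x + Tr y.
Proof. by rewrite /Tr sqrD addrACA. Qed.

Lemma Tr_sq x : Tr x ^+ 2 = Tr x.
Proof. by rewrite /Tr sqrD -exprM exp4 addrC. Qed.

Lemma Tr01 x : Tr x = 0 \/ Tr x = 1.
Proof.
have : Tr x * (Tr x - 1) = 0 by rewrite mulrBr mulr1 -expr2 Tr_sq subrr.
by move/eqP; rewrite mulf_eq0 subr_eq0 => /orP[] /eqP; [left|right].
Qed.

Definition chi (x : F) : int := if Tr x == 0 then 1 else -1.

Lemma chi0 : chi 0 = 1.
Proof. by rewrite /chi /Tr expr0n /= addr0 eqxx. Qed.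

Lemma chiD x y : chi (x + y) = chi x * chi y.
Proof.
rewrite /chi TrD.
case: (Tr01 x) => ->; case: (Tr01 y) => ->;
  rewrite ?addr0 ?add0r ?addxx ?eqxx ?oner_eq0 ?mulr1 ?mul1r //.
Qed.

Lemma exists_Tr1 : exists a, Tr a != 0.
Proof.
apply/existsP; apply: contraT; rewrite negb_exists => /forallP H.
have H2 : forall x : F, x \in [:: 0; 1].
  move=> x; have := H x; rewrite negbK /Tr => /eqP.
  rewrite -[x in x + _]oppF => /eqP; rewrite addrC subr_eq0 => /eqP.
  move=> E; have : x * (x - 1) = 0 by rewrite mulrBr mulr1 -expr2 E subrr.
  by move/eqP; rewrite mulf_eq0 subr_eq0 !inE.
have : (#|F| <= 2)%N.
  apply: leq_trans (card_size [:: (0:F); 1]).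
  by apply: subset_leq_card; apply/subsetP => x _; exact: H2.
by rewrite F4.
Qed.

Lemma sum_chi : \sum_(x : F) chi x = 0.
Proof.
have [a Ha] := exists_Tr1.
have ca : chi a = -1 by rewrite /chi (negbTE Ha).
have E : \sum_(x : F) chi x = - \sum_(x : F) chi x.
  rewrite {1}(reindex_inj (addIr a)) /=.
  by rewrite -sumrN; apply: eq_bigr => x _; rewrite chiD ca mulrN1.
by move: E; lia.
Qed.

Lemma sqr_inj (c : F) : c != 0 -> injective (fun b : F => c * b ^+ 2).
Proof.
move=> cnz b b' /(mulfI cnz) E.
have : (b - b') ^+ 2 = 0 by rewrite oppF sqrD E addxx.
by move/eqP; rewrite expf_eq0 /= subr_eq0 => /eqP.
Qed.

Lemma sum_chi_sq (c : F) : c != 0 -> \sum_(b : F) chi (c * b ^+ 2) = 0.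
Proof.
move=> cnz; have := sum_chi; rewrite (reindex_inj (sqr_inj cnz)) /=.
by [].
Qed.

Definition gen (s t : int) (b : F) : int := if b == 0 then s else t.

Lemma gen_hat (s t : int) (c : F) :
  \sum_(b : F) gen s t b * chi (c * b ^+ 2) = gen (s + 3 * t) (s - t) c.
Proof.
rewrite (bigD1 0) //= /gen eqxx expr0n /= mulr0 chi0 mulr1.
have -> : \sum_(i | i != 0) (if i == 0 then s else t) * chi (c * i ^+ 2)
        = \sum_(i | i != 0) t * chi (c * i ^+ 2).
  by apply: eq_bigr => i /negbTE ->.
rewrite -mulr_sumr.
case: eqP => [->|/eqP cnz].
  rewrite (eq_bigr (fun _ => 1)); last by move=> i _; rewrite mul0r chi0.
  by rewrite sumr_const cardC1 F4 /= mulrC.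
have := sum_chi_sq cnz; rewrite (bigD1 0) //= expr0n /= mulr0 chi0 => E.
have -> : \sum_(i | i != 0) chi (c * i ^+ 2) = -1 by apply: (addrI 1); rewrite E subrr.
by rewrite mulrN1.
Qed.


Variable D : {vspace 'rV[F]_36}.
Hypothesis hsd : herm_self_dual D.

Lemma ipD (x z y : 'rV[F]_36) : herm_ip (x + z) y = herm_ip x y + herm_ip z y.
Proof. by rewrite /herm_ip -big_split; apply: eq_bigr => k _; rewrite !mxE mulrDl. Qed.

Lemma ipZ a (x y : 'rV[F]_36) : herm_ip (a *: x) y = a * herm_ip x y.
Proof. by rewrite /herm_ip mulr_sumr; apply: eq_bigr => k _; rewrite !mxE mulrA. Qed.

Lemma dualC x y : y \in D -> x \in D -> herm_ip x y = 0.
Proof.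
by rewrite hsd inE => /forallP /(_ x) /implyP H xD; apply/eqP; apply: H.
Qed.

Lemma notdual y : y \notin D -> exists2 x, x \in D & herm_ip x y != 0.
Proof.
rewrite hsd inE negb_forall => /existsP [x]; rewrite negb_imply => /andP[xD nz].
by exists x.
Qed.

Lemma orth y : \sum_(x | x \in D) chi (herm_ip x y) = if y \in D then (#|D|)%:R else 0.
Proof.
case: ifP => yD.
  rewrite (eq_bigr (fun _ => 1)); first by rewrite sumr_const.
  by move=> x xD; rewrite dualC // chi0.
have [x0 x0D nz] := notdual (negbT yD).
have [a Ha] := exists_Tr1.
pose z := (a / herm_ip x0 y) *: x0.
have zD : z \in D by rewrite memvZ.
have ipz : herm_ip z y = a by rewrite ipZ divfK.
have ca : chi a = -1 by rewrite /chi (negbTE Ha).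
set S := \sum_(x | x \in D) _.
have E : S = - S.
  rewrite {1}/S (reindex_inj (addIr z)) /=.
  rewrite -sumrN; apply: eq_big => [x|x xD]; first by rewrite rpredDr.
  by rewrite ipD ipz chiD ca mulrN1.
by move: E; lia.
Qed.


Definition rowf (f : {ffun 'I_36 -> F}) : 'rV[F]_36 := \row_k f k.
Definition ffr (y : 'rV[F]_36) : {ffun 'I_36 -> F} := [ffun k => y ord0 k].

Lemma rowfK : cancel rowf ffr.
Proof. by move=> f; apply/ffunP => k; rewrite ffunE mxE. Qed.
Lemma ffrK : cancel ffr rowf.
Proof. by move=> y; apply/rowP => k; rewrite mxE ffunE. Qed.

Lemma chi_sum (I : finType) (G : I -> F) : chi (\sum_i G i) = \prod_i chi (G i).
Proof. exact: (big_morph chi chiD chi0). Qed.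

Lemma mw (s t : 'I_36 -> int) :
  (#|D|)%:R * \sum_(y | y \in D) \prod_k gen (s k) (t k) (y ord0 k)
  = \sum_(x | x \in D) \prod_k gen (s k + 3 * t k) (s k - t k) (x ord0 k).
Proof.
have E1 : forall x : 'rV[F]_36, \prod_k gen (s k + 3 * t k) (s k - t k) (x ord0 k)
   = \sum_(f : {ffun 'I_36 -> F}) (\prod_k gen (s k) (t k) (f k)) * chi (herm_ip x (rowf f)).
  move=> x; rewrite (eq_bigr (fun k => \sum_b gen (s k) (t k) b * chi (x ord0 k * b ^+ 2))); last first.
    by move=> k _; rewrite gen_hat.
  rewrite bigA_distr_bigA /=; apply: eq_bigr => f _.
  rewrite big_split /= /herm_ip chi_sum; congr (_ * _); apply: eq_bigr => k _.
  by rewrite mxE.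
rewrite (eq_bigr _ (fun x _ => E1 x)) exchange_big /=.
rewrite (eq_bigr (fun f : {ffun 'I_36 -> F} => (\prod_k gen (s k) (t k) (f k)) * (if rowf f \in D then (#|D|)%:R else 0))); last first.
  by move=> f _; rewrite -mulr_sumr orth.
rewrite (reindex rowf); last by apply: onW_bij; exists ffr; [exact: rowfK | exact: ffrK].
rewrite mulr_sumr big_mkcond /=; apply: eq_bigr => f _.
case: ifP => _; last by rewrite mulr0.
by rewrite mulrC; congr (_ * _); apply: eq_bigr => k _; rewrite mxE.
Qed.


Definition i0 : 'I_36 := ord0.
Definition bw (y : 'rV[F]_36) : nat := #|[set k | (k != i0) && (y ord0 k != 0)]|.

Lemma prod_constP (P : pred 'I_36) (c : int) : \prod_(k | P k) c = c ^+ #|[set k | P k]|.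
Proof.
rewrite -prodr_const; apply: eq_bigl => k; by rewrite inE.
Qed.

Lemma bw_compl (y : 'rV[F]_36) : #|[set k | (k != i0) && (y ord0 k == 0)]| = (35 - bw y)%N.
Proof.
have c35 : #|[set~ i0]| = 35%N by rewrite cardsC1 card_ord.
have := cardsID [set k | y ord0 k == 0] [set~ i0].
rewrite c35 /bw.
have -> : [set~ i0] :&: [set k | y ord0 k == 0] = [set k | (k != i0) && (y ord0 k == 0)].
  by apply/setP => k; rewrite !inE.
have -> : [set~ i0] :\: [set k | y ord0 k == 0] = [set k | (k != i0) && (y ord0 k != 0)].
  by apply/setP => k; rewrite !inE andbC.
lia.
Qed.

Lemma prod_gen (y : 'rV[F]_36) (p p' q q' : int) :
  \prod_k gen (if k == i0 then p else q) (if k == i0 then p' else q') (y ord0 k)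
  = gen p p' (y ord0 i0) * q ^+ (35 - bw y) * q' ^+ bw y.
Proof.
rewrite (bigD1 i0) //= ?eqxx -mulrA; congr (_ * _).
rewrite (bigID (fun k => y ord0 k == 0)) /=.
rewrite (eq_bigr (fun _ => q)); last by move=> k /andP[/negbTE kn yz]; rewrite /gen kn yz.
rewrite [X in _ * X](eq_bigr (fun _ => q')); last first.
  by move=> k /andP[/negbTE kn /negbTE yz]; rewrite /gen kn yz.
by rewrite !prod_constP bw_compl.
Qed.

Lemma mw_spec (u v t : int) :
  (#|D|)%:R * \sum_(y | y \in D) gen u v (y ord0 i0) * t ^+ bw y
  = \sum_(x | x \in D) gen (u + 3 * v) (u - v) (x ord0 i0) * (1 + 3 * t) ^+ (35 - bw x) * (1 - t) ^+ bw x.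
Proof.
have := mw (fun k => if k == i0 then u else 1) (fun k => if k == i0 then v else t).
rewrite (eq_bigr (fun y : 'rV[F]_36 => gen u v (y ord0 i0) * t ^+ bw y)); last first.
  by move=> y _; rewrite prod_gen expr1n mulr1.
move=> ->; apply: eq_bigr => x _.
rewrite -prod_gen; apply: eq_bigr => k _; by case: (k == i0).
Qed.


Lemma bw_lt (y : 'rV[F]_36) : (bw y < 36)%N.
Proof.
have c35 : #|[set~ i0]| = 35%N by rewrite cardsC1 card_ord.
have : (bw y <= #|[set~ i0]|)%N.
  by apply: subset_leq_card; apply/subsetP => k; rewrite !inE => /andP[].
by rewrite c35.
Qed.

Lemma group (P : pred 'rV[F]_36) (H : nat -> int) :
  \sum_(y | P y) H (bw y) = \sum_(j < 36) (#|[set y | P y && (bw y == j)]|)%:R * H j.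
Proof.
rewrite (eq_bigr (fun j : 'I_36 => \sum_(y | P y && (bw y == j)) H j)); last first.
  move=> j _; rewrite mulr_natl -sumr_const; apply: eq_bigl => y; by rewrite inE.
rewrite (eq_bigr (fun j : 'I_36 => \sum_(y | P y) (if bw y == j then H j else 0))); last first.
  by move=> j _; rewrite big_mkcondr.
rewrite exchange_big /=; apply: eq_bigr => y _.
rewrite -big_mkcond /=.
pose j0 : 'I_36 := Ordinal (bw_lt y).
rewrite (eq_bigl (fun j => j == j0)); last by move=> j; rewrite /j0 eq_sym.
by rewrite big_pred1_eq.
Qed.

Definition c0 (j : nat) := #|[set y : 'rV[F]_36 | ((y \in D) && (y ord0 i0 == 0)) && (bw y == j)]|.
Definition c1 (j : nat) := #|[set y : 'rV[F]_36 | ((y \in D) && ~~ (y ord0 i0 == 0)) && (bw y == j)]|.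

Lemma mw_group (u v t : int) :
  (#|D|)%:R * (u * Pw c0 t + v * Pw c1 t) = (u + 3 * v) * Qw c0 t + (u - v) * Qw c1 t.
Proof.
have := mw_spec u v t.
rewrite (bigID (fun y : 'rV[F]_36 => y ord0 i0 == 0)) /=.
rewrite [in RHS](bigID (fun y : 'rV[F]_36 => y ord0 i0 == 0)) /=.
rewrite (eq_bigr (fun y : 'rV[F]_36 => u * t ^+ bw y)); last by move=> y /andP[_ yz]; rewrite /gen yz.
rewrite [X in _ * (_ + X) = _](eq_bigr (fun y : 'rV[F]_36 => v * t ^+ bw y)); last first.
  by move=> y /andP[_ /negbTE yz]; rewrite /gen yz.
rewrite [X in _ = X + _](eq_bigr (fun y : 'rV[F]_36 => (u + 3 * v) * ((1 + 3 * t) ^+ (35 - bw y) * (1 - t) ^+ bw y))); last first.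
  by move=> y /andP[_ yz]; rewrite /gen yz mulrA.
rewrite [X in _ = _ + X](eq_bigr (fun y : 'rV[F]_36 => (u - v) * ((1 + 3 * t) ^+ (35 - bw y) * (1 - t) ^+ bw y))); last first.
  by move=> y /andP[_ /negbTE yz]; rewrite /gen yz mulrA.
rewrite -!mulr_sumr.
rewrite (group _ (fun j => t ^+ j)) (group _ (fun j => t ^+ j)).
rewrite (group _ (fun j => (1 + 3 * t) ^+ (35 - j) * (1 - t) ^+ j)).
rewrite (group _ (fun j => (1 + 3 * t) ^+ (35 - j) * (1 - t) ^+ j)).
move=> ->; rewrite /Qw.
by congr (_ * _ + _ * _); apply: eq_bigr => j _; rewrite mulrA.
Qed.


Hypothesis hmin : forall x, x \in D -> x != 0 -> (12 <= wt x)%N.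

Lemma wt_split (y : 'rV[F]_36) : wt y = ((y ord0 i0 != 0%R) + bw y)%N.
Proof.
rewrite /wt (cardsD1 i0) inE; congr (_ + _)%N; apply: eq_card => k; rewrite !inE.
by [].
Qed.

Lemma wt_zero : wt (0 : 'rV[F]_36) = 0%N.
Proof.
by apply/eqP; rewrite cards_eq0; apply/eqP/setP => k; rewrite !inE mxE eqxx.
Qed.

Lemma bw_zero : bw (0 : 'rV[F]_36) = 0%N.
Proof.
by apply/eqP; rewrite cards_eq0; apply/eqP/setP => k; rewrite !inE mxE eqxx andbF.
Qed.

Lemma wt0 (y : 'rV[F]_36) : wt y = 0%N -> y = 0.
Proof.
move/eqP; rewrite cards_eq0 => /eqP E; apply/rowP => k; rewrite mxE.
apply/eqP; apply: contraT => nz.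
have : k \in [set k | y ord0 k != 0] by rewrite inE.
by rewrite E inE.
Qed.

Lemma wt_even (y : 'rV[F]_36) : y \in D -> ~~ odd (wt y).
Proof.
move=> yD; have E := dualC yD yD.
have : herm_ip y y = (wt y)%:R.
  rewrite /herm_ip /wt -sumr_const [RHS]big_mkcond /=; apply: eq_bigr => k _.
  rewrite inE -exprS; case: eqP => [->|/eqP nz]; first by rewrite expr0n.
  by rewrite exp3.
rewrite E => /esym/eqP; rewrite -(dvdn_pcharf char2) => H.
by rewrite -dvdn2.
Qed.


Lemma c0_zero j : ~~ good0 j -> c0 j = 0%N.
Proof.
move=> g; apply/eqP; rewrite cards_eq0; apply/eqP/setP => y; rewrite !inE.
apply/negbTE/negP => /andP[/andP[yD yz] /eqP bj].
have ws : wt y = j by rewrite wt_split yz /= bj.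
move: g; rewrite /good0 -ws.
case: (eqVneq y 0) => [->|ynz]; first by rewrite wt_zero.
by rewrite (hmin yD ynz) (wt_even yD) orbT.
Qed.

Lemma c1_zero j : ~~ good1 j -> c1 j = 0%N.
Proof.
move=> g; apply/eqP; rewrite cards_eq0; apply/eqP/setP => y; rewrite !inE.
apply/negbTE/negP => /andP[/andP[yD yz] /eqP bj].
have ynz : y != 0 by apply: contraNneq yz => ->; rewrite mxE.
have ws : wt y = j.+1 by rewrite wt_split yz /= bj.
have := hmin yD ynz; have := wt_even yD; rewrite ws /= negbK.
move: g; rewrite /good1 => /negP g ev lt; apply: g; by rewrite ev andbT.
Qed.

Lemma c0_0 : c0 0 = 1%N.
Proof.
rewrite /c0 (_ : [set y | _] = [set 0]) ?cards1 //; apply/setP => y; rewrite !inE.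
case: (eqVneq y 0) => [->|ynz]; first by rewrite mem0v mxE eqxx bw_zero.
apply/negbTE/negP => /andP[/andP[yD yz] /eqP bj].
by apply/negP: ynz; apply/negPn/eqP; apply: wt0; rewrite wt_split yz bj.
Qed.


Lemma card_D : ((#|D|)%:R : int) = 4 ^+ 18.
Proof.
have := mw_group 1 1 1.
have P1 : Pw c0 1 + Pw c1 1 = (#|D|)%:R.
  have G0 : \sum_(j < 36) (c0 j)%:R * 1 = \sum_(y | (y \in D) && (y ord0 i0 == 0)) (1:int)
    := esym (group _ (fun _ => 1)).
  have G1 : \sum_(j < 36) (c1 j)%:R * 1 = \sum_(y | (y \in D) && ~~ (y ord0 i0 == 0)) (1:int)
    := esym (group _ (fun _ => 1)).
  rewrite /Pw.
  rewrite (eq_bigr (fun j : 'I_36 => (c0 j)%:R * 1)); last by move=> j _; rewrite expr1n.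
  rewrite [X in _ + X = _](eq_bigr (fun j : 'I_36 => (c1 j)%:R * 1)); last by move=> j _; rewrite expr1n.
  by rewrite G0 G1 -bigID /= sumr_const.
rewrite !mul1r P1 subrr mul0r addr0.
have -> : Qw c0 1 = 4 ^+ 35.
  rewrite /Qw big_ord_recl subrr.
  rewrite big1 => [|j _]; last by rewrite exprS mul0r mulr0.
  rewrite addr0 expr0 mulr1 c0_0 mul1r subn0.
  by rewrite mulr1; congr (_ ^+ _).
move=> E.
have E2 : ((#|D|)%:R : int) * (#|D|)%:R = 4 ^+ 36.
  by rewrite E (_ : (1 + 3 * 1 : int) = 4) // -exprS.
have : ((#|D|)%:R : int) ^+ 2 == (4 ^+ 18) ^+ 2.
  by rewrite expr2 E2 -exprM; apply/eqP; congr (_ ^+ _).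
rewrite (Num.Theory.eqrXn2 (n := 2)).
- by move/eqP.
- by [].
- exact: Num.Theory.ler0n.
- exact: Num.Theory.exprn_ge0.
Qed.


Definition b1 (j : nat) := #|[set y : 'rV[F]_36 | ((y \in D) && (y ord0 i0 == 1)) && (bw y == j)]|.

Lemma bw_scale c (z : 'rV[F]_36) : c != 0 -> bw (c *: z) = bw z.
Proof. by move=> cnz; apply: eq_card => k; rewrite !inE mxE mulf_eq0 (negbTE cnz). Qed.

Lemma c1_b1 j : c1 j = (3 * b1 j)%N.
Proof.
rewrite /c1 -sum1_card.
rewrite (partition_big (fun y : 'rV[F]_36 => y ord0 i0) (fun c => c != 0)) /=; last first.
  by move=> y; rewrite inE => /andP[/andP[_ nz] _].
rewrite (eq_bigr (fun _ => b1 j)) => [|c cnz].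
  rewrite (eq_bigl (fun c => c \in [set~ (0:F)])) => [|c]; last by rewrite !inE.
  by rewrite sum_nat_const cardsC1 F4.
rewrite (reindex_inj (scalerI cnz)) /= /b1 -sum1_card; apply: eq_bigl => z; rewrite !inE.
rewrite rpredZeq (negbTE cnz) /= mxE bw_scale // mulf_eq0 (negbTE cnz) /=.
rewrite -{2}[c]mulr1 (inj_eq (mulfI cnz)).
case: (eqVneq (z ord0 i0) 1) => [->|ne]; first by rewrite oner_eq0 /= !andbT.
by rewrite !andbF.
Qed.

Lemma nw_split : num_weight D 12 = (c0 12 + c1 11)%N.
Proof.
rewrite /num_weight -(cardsID [set y : 'rV[F]_36 | y ord0 i0 == 0]).
congr (_ + _)%N; apply: eq_card => y; rewrite !inE wt_split;
  case: (y \in D); case E: (y ord0 i0 == 0) => //=; rewrite ?add0n ?add1n ?andbT ?andbF ?eqSS //.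
Qed.

End Field4.

Theorem fact5p6 (F : finFieldType) (D : {vspace 'rV[F]_36}) :
  #|F| = 4%N ->
  herm_self_dual D ->
  min_weight D 12 ->
  exists beta : nat, (1 <= beta <= 7140)%N /\ num_weight D 12 = (9 * beta)%N.
Proof.
move=> F4 hsd [hmin [x0 x0D /andP[x0nz /eqP wx0]]].
have Hmw : forall u v t : int, 4 ^+ 18 * (u * Pw (c0 D) t + v * Pw (c1 D) t)
    = (u + 3 * v) * Qw (c0 D) t + (u - v) * Qw (c1 D) t.
  have cD : ((#|D|)%:R : int) = 4 ^+ 18 by apply: card_D.
  by move=> u v t; rewrite -cD; apply: mw_group.
have c00 : c0 D 0 = 1%N by apply: c0_0.
have z0 : forall j, ~~ good0 j -> c0 D j = 0%N by move=> j; apply: c0_zero.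
have z1 : forall j, ~~ good1 j -> c1 D j = 0%N by move=> j; apply: c1_zero.
have [A B] := numeric' c00 z0 z1 Hmw.
have e1 : c1 D 11 = (3 * b1 D 11)%N by apply: c1_b1.
have nw : num_weight D 12 = (c0 D 12 + c1 D 11)%N by apply: nw_split.
have a1 : (0 < num_weight D 12)%N.
  by apply/card_gt0P; exists x0; rewrite inE x0D wx0 eqxx.
have key1 : c0 D 12 = (2 * c1 D 11)%N by lia.
exists (b1 D 11); split; last by rewrite nw key1 e1; lia.
apply/andP; split; first by move: a1; rewrite nw key1 e1; lia.
apply/leP; apply Nat2Z.inj_le; rewrite Z7140.
clear -B key1 e1; lia.
Qed.
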